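(* Let $N\ge 3$ and let $E,F\subset\bigcup_{k=1}^5S_k$. Then $S^{N-1}_{\mathbb R,E}\in\{S^{N-1}_{\mathbb R},S^{N-1}_{\mathbb R,*},S^{N-1}_{\mathbb R,+}\}$; in particular for any $\sigma\in S_k$ with $k\le5$ and $\sigma\ne1_k$, $S^{N-1}_{\mathbb R,\{\sigma\}}\in\{S^{N-1}_{\mathbb R},S^{N-1}_{\mathbb R,*}\}$. Likewise $\bar S^{N-1}_{\mathbb R,F}\in\{\bar S^{N-1}_{\mathbb R},\bar S^{N-1}_{\mathbb R,*},S^{N-1}_{\mathbb R,+}\}$, and the mixed sphere $S^{N-1}_{\mathbb R,E}\cap\bar S^{N-1}_{\mathbb R,F}$ is one of the nine spheres $S^{N-1}_{\mathbb R},S^{N-1}_{\mathbb R,*},S^{N-1}_{\mathbb R,+},S^{N-1,1}_{\mathbb R},S^{N-1,1}_{\mathbb R,*},\bar S^{N-1}_{\mathbb R,*},S^{N-1,0}_{\mathbb R},\bar S^{N-1,1}_{\mathbb R},\bar S^{N-1}_{\mathbb R}$.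
   Context: $C(S^{N-1}_{\mathbb R,+})$ denotes the universal $C^*$-algebra generated by self-adjoint elements $x_1,\dots,x_N$ subject to $\sum_i x_i^2=1$; subspaces are given by quotients by relations among the $x_i$, and intersections by imposing both sets of relations. Subspheres: $S^{N-1}_{\mathbb R}$: $x_ix_j=x_jx_i$ for all $i,j$; $\bar S^{N-1}_{\mathbb R}$: $x_ix_j=-x_jx_i$ for all $i\ne j$; $S^{N-1}_{\mathbb R,*}$: $x_ix_jx_k=x_kx_jx_i$ for all $i,j,k$; $\bar S^{N-1}_{\mathbb R,*}$: $x_ix_jx_k=-x_kx_jx_i$ for $i,j,k$ pairwise distinct and $x_ix_jx_k=x_kx_jx_i$ otherwise. Polygonal versions $S^{N-1,d-1}_{\mathbb R}$, $\bar S^{N-1,d-1}_{\mathbb R}$, $S^{N-1,d-1}_{\mathbb R,*}$ are obtained by additionally imposing $x_{i_0}\cdots x_{i_d}=0$ for pairwise distinct $i_0,\dots,i_d$. For $\sigma\in S_k$ and indices $i_1,\dots,i_k$, let $\varepsilon_\sigma(i)=(-1)^m$ with $m$ the number of pairs $r<s$ with $\sigma(r)>\sigma(s)$ and $i_{\sigma(r)}\ne i_{\sigma(s)}$. Untwisted relations $\mathcal R_\sigma$: $x_{i_1}\cdots x_{i_k}=x_{i_{\sigma(1)}}\cdots x_{i_{\sigma(k)}}$ for all indices; twisted relations $\bar{\mathcal R}_\sigma$: $x_{i_1}\cdots x_{i_k}=\varepsilon_\sigma(i)x_{i_{\sigma(1)}}\cdots x_{i_{\sigma(k)}}$ for all indices.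 For $E\subset\bigcup_kS_k$, $S^{N-1}_{\mathbb R,E}$ (resp. $\bar S^{N-1}_{\mathbb R,E}$) is the subsphere of $S^{N-1}_{\mathbb R,+}$ defined by $\mathcal R_\sigma$ (resp. $\bar{\mathcal R}_\sigma$), $\sigma\in E$. *)

(* Defs.v *)
From Stdlib Require Import Reals List Arith Bool.
Import ListNotations.

Definition C : Type := (R * R)%type.
Definition Cadd (a b : C) : C := (fst a + fst b, snd a + snd b)%R.
Definition Cmul (a b : C) : C :=
  (fst a * fst b - snd a * snd b, fst a * snd b + snd a * fst b)%R.
Definition Cconj (a : C) : C := (fst a, - snd a)%R.
Definition Cmod (a : C) : R := sqrt (fst a * fst a + snd a * snd a)%R.
Definition C1 : C := (1%R, 0%R).

Record CStarAlg := {
  car :> Type;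
  c0 : car; c1 : car;
  cadd : car -> car -> car; copp : car -> car; cmul : car -> car -> car;
  csc : C -> car -> car; cstar : car -> car; cnorm : car -> R;
  addA : forall x y z, cadd x (cadd y z) = cadd (cadd x y) z;
  addC : forall x y, cadd x y = cadd y x;
  add0 : forall x, cadd c0 x = x;
  addN : forall x, cadd (copp x) x = c0;
  mulA : forall x y z, cmul x (cmul y z) = cmul (cmul x y) z;
  mul1l : forall x, cmul c1 x = x;
  mul1r : forall x, cmul x c1 = x;
  mulDl : forall x y z, cmul (cadd x y) z = cadd (cmul x z) (cmul y z);
  mulDr : forall x y z, cmul x (cadd y z) = cadd (cmul x y) (cmul x z);
  scA : forall a b x, csc a (csc b x) = csc (Cmul a b) x;
  sc1 : forall x, csc C1 x = x;
  scDl : forall a b x, csc (Cadd a b) x = cadd (csc a x) (csc b x);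
  scDr : forall a x y, csc a (cadd x y) = cadd (csc a x) (csc a y);
  scMl : forall a x y, cmul (csc a x) y = csc a (cmul x y);
  scMr : forall a x y, cmul x (csc a y) = csc a (cmul x y);
  starK : forall x, cstar (cstar x) = x;
  starD : forall x y, cstar (cadd x y) = cadd (cstar x) (cstar y);
  starM : forall x y, cstar (cmul x y) = cmul (cstar y) (cstar x);
  starZ : forall a x, cstar (csc a x) = csc (Cconj a) (cstar x);
  norm_eq0 : forall x, cnorm x = 0%R -> x = c0;
  normD : forall x y, (cnorm (cadd x y) <= cnorm x + cnorm y)%R;
  normZ : forall a x, cnorm (csc a x) = (Cmod a * cnorm x)%R;
  normM : forall x y, (cnorm (cmul x y) <= cnorm x * cnorm y)%R;
  norm_cstar : forall x, cnorm (cmul (cstar x) x) = (cnorm x * cnorm x)%R;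
  complete : forall u : nat -> car,
    (forall eps, (0 < eps)%R -> exists M, forall m n, (M <= m)%nat -> (M <= n)%nat ->
        (cnorm (cadd (u m) (copp (u n))) < eps)%R) ->
    exists l, forall eps, (0 < eps)%R -> exists M, forall n, (M <= n)%nat ->
        (cnorm (cadd (u n) (copp l)) < eps)%R
}.

Arguments c0 {_}. Arguments c1 {_}. Arguments cadd {_}. Arguments copp {_}.
Arguments cmul {_}. Arguments cstar {_}.

Definition mprod {A : CStarAlg} (l : list (car A)) : car A := fold_right cmul c1 l.
Definition msum {A : CStarAlg} (l : list (car A)) : car A := fold_right cadd c0 l.

Definition rels : Type := forall A : CStarAlg, (nat -> car A) -> Prop.

Definition sphere_pt (N : nat) (A : CStarAlg) (x : nat -> car A) : Prop :=
  (forall i, (i < N)%nat -> cstar (x i) = x i) /\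
  msum (map (fun i => cmul (x i) (x i)) (seq 0 N)) = c1.

(* Two subspheres (quotients of C(S^{N-1}_{R,+}) by the relations) coincide
   iff the relations are equivalent for every sphere point in every C*-algebra
   (universal property). *)
Definition sph_eq (N : nat) (P Q : rels) : Prop :=
  forall (A : CStarAlg) (x : nat -> car A), sphere_pt N A x -> (P A x <-> Q A x).

Definition rels_and (P Q : rels) : rels := fun A x => P A x /\ Q A x.
Definition free_rels : rels := fun _ _ => True.

Definition is_perm (k : nat) (s : nat -> nat) : Prop :=
  (forall r, (r < k)%nat -> (s r < k)%nat) /\
  (forall r r', (r < k)%nat -> (r' < k)%nat -> s r = s r' -> r = r').

(* sign epsilon_sigma(i) : (-1)^m, m = #{r<s : sigma r > sigma s, i_{sigma r} <> i_{sigma s}} *)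
Definition inv_count (k : nat) (s i : nat -> nat) : nat :=
  length (filter (fun p : nat * nat =>
            (fst p <? snd p) && (s (snd p) <? s (fst p)) && negb (i (s (fst p)) =? i (s (snd p))))
          (list_prod (seq 0 k) (seq 0 k))).

Definition sgn {A : CStarAlg} (b : bool) (a : car A) : car A := if b then copp a else a.

Definition indices_ok (N k : nat) (i : nat -> nat) : Prop := forall r, (r < k)%nat -> (i r < N)%nat.

Definition R_sigma (N k : nat) (s : nat -> nat) : rels := fun A x =>
  forall i, indices_ok N k i ->
    mprod (map (fun r => x (i r)) (seq 0 k)) = mprod (map (fun r => x (i (s r))) (seq 0 k)).

Definition Rbar_sigma (N k : nat) (s : nat -> nat) : rels := fun A x =>
  forall i, indices_ok N k i ->
    mprod (map (fun r => x (i r)) (seq 0 k)) =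
    sgn (Nat.odd (inv_count k s i)) (mprod (map (fun r => x (i (s r))) (seq 0 k))).

Definition permset : Type := nat -> (nat -> nat) -> Prop.
Definition S_E (N : nat) (E : permset) : rels := fun A x =>
  forall k s, E k s -> R_sigma N k s A x.
Definition Sbar_F (N : nat) (F : permset) : rels := fun A x =>
  forall k s, F k s -> Rbar_sigma N k s A x.
Definition single (k0 : nat) (s0 : nat -> nat) : permset := fun k s => k = k0 /\ s = s0.

Definition classical (N : nat) : rels := fun A x =>
  forall i j, (i < N)%nat -> (j < N)%nat -> cmul (x i) (x j) = cmul (x j) (x i).
Definition anticomm (N : nat) : rels := fun A x =>
  forall i j, (i < N)%nat -> (j < N)%nat -> i <> j -> cmul (x i) (x j) = copp (cmul (x j) (x i)).
Definition halflib (N : nat) : rels := fun A x =>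
  forall i j k, (i < N)%nat -> (j < N)%nat -> (k < N)%nat ->
    cmul (x i) (cmul (x j) (x k)) = cmul (x k) (cmul (x j) (x i)).
Definition halflib_bar (N : nat) : rels := fun A x =>
  forall i j k, (i < N)%nat -> (j < N)%nat -> (k < N)%nat ->
    cmul (x i) (cmul (x j) (x k)) =
    sgn (negb (i =? j) && negb (j =? k) && negb (i =? k)) (cmul (x k) (cmul (x j) (x i))).
Definition poly0 (N : nat) : rels := fun A x =>
  forall i j, (i < N)%nat -> (j < N)%nat -> i <> j -> cmul (x i) (x j) = c0.
Definition poly1 (N : nat) : rels := fun A x =>
  forall i j k, (i < N)%nat -> (j < N)%nat -> (k < N)%nat -> i <> j -> j <> k -> i <> k ->
    cmul (x i) (cmul (x j) (x k)) = c0.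

(* Main.v *)
From Stdlib Require Import Reals List Arith Bool Lia Permutation Classical.
Require Import Defs.
Import ListNotations.

Lemma add0r' (A : CStarAlg) (x : car A) : cadd x c0 = x.
Proof. rewrite addC. apply add0. Qed.
Lemma addrN' (A : CStarAlg) (x : car A) : cadd x (copp x) = c0.
Proof. rewrite addC. apply addN. Qed.
Lemma opp_unique (A : CStarAlg) (a b : car A) : cadd a b = c0 -> a = copp b.
Proof.
  intro H. rewrite <- (add0r' A a). rewrite <- (addrN' A b). rewrite addA, H. apply add0.
Qed.
Lemma oppK (A : CStarAlg) (y : car A) : copp (copp y) = y.
Proof. symmetry. apply opp_unique. apply addrN'. Qed.
Lemma double0 (A : CStarAlg) (u : car A) : u = cadd u u -> u = c0.
Proof.
  intro H. assert (cadd (cadd u u) (copp u) = c0) as H2.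
  { rewrite <- H. apply addrN'. }
  rewrite <- addA, addrN', add0r' in H2. exact H2.
Qed.
Lemma mul0l (A : CStarAlg) (z : car A) : cmul c0 z = c0.
Proof. apply double0. rewrite <- mulDl. rewrite add0. reflexivity. Qed.
Lemma mul0r (A : CStarAlg) (z : car A) : cmul z c0 = c0.
Proof. apply double0. rewrite <- mulDr. rewrite add0. reflexivity. Qed.
Lemma mulNl (A : CStarAlg) (y z : car A) : cmul (copp y) z = copp (cmul y z).
Proof. apply opp_unique. rewrite <- mulDl, addN. apply mul0l. Qed.
Lemma mulNr (A : CStarAlg) (y z : car A) : cmul z (copp y) = copp (cmul z y).
Proof. apply opp_unique. rewrite <- mulDr, addN. apply mul0r. Qed.
Lemma oppD (A : CStarAlg) (a b : car A) : copp (cadd a b) = cadd (copp a) (copp b).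
Proof.
  symmetry. apply opp_unique.
  rewrite <- addA. rewrite (addC _ a b). rewrite (addA _ (copp b) b a). rewrite addN, add0. apply addN.
Qed.
Lemma opp0 (A : CStarAlg) : copp (@c0 A) = c0.
Proof. symmetry. apply opp_unique. apply add0. Qed.
Lemma star0 (A : CStarAlg) : cstar (@c0 A) = c0.
Proof. apply double0. rewrite <- starD, add0. reflexivity. Qed.
Lemma starN (A : CStarAlg) (y : car A) : cstar (copp y) = copp (cstar y).
Proof. apply opp_unique. rewrite <- starD, addN. apply star0. Qed.
Lemma star1 (A : CStarAlg) : cstar (@c1 A) = c1.
Proof.
  assert (H : cstar (cmul (@c1 A) (cstar c1)) = cstar c1).
  { rewrite starM, starK. apply mul1l. }
  rewrite mul1l, starK in H. symmetry; exact H.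
Qed.

Definition sgn' := @sgn.
Lemma sgn_sgn (A : CStarAlg) b1 b2 (y : car A) : sgn b1 (sgn b2 y) = sgn (xorb b1 b2) y.
Proof. destruct b1, b2; simpl; rewrite ?oppK; reflexivity. Qed.
Lemma sgn_mull (A : CStarAlg) b (y z : car A) : cmul (sgn b y) z = sgn b (cmul y z).
Proof. destruct b; simpl; [apply mulNl|reflexivity]. Qed.
Lemma sgn_mulr (A : CStarAlg) b (y z : car A) : cmul z (sgn b y) = sgn b (cmul z y).
Proof. destruct b; simpl; [apply mulNr|reflexivity]. Qed.
Lemma sgn_star (A : CStarAlg) b (y : car A) : cstar (sgn b y) = sgn b (cstar y).
Proof. destruct b; simpl; [apply starN|reflexivity]. Qed.
Lemma sgn_msum (A : CStarAlg) b (f : nat -> car A) l :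
  msum (map (fun j => sgn b (f j)) l) = sgn b (msum (map f l)).
Proof.
  destruct b; simpl; [|reflexivity].
  induction l as [|a l IH]; simpl. symmetry; apply opp0.
  rewrite IH, oppD. reflexivity.
Qed.
Lemma mprod_app (A : CStarAlg) (l1 l2 : list (car A)) :
  mprod (l1 ++ l2) = cmul (mprod l1) (mprod l2).
Proof.
  induction l1 as [|a l IH]; simpl. symmetry; apply mul1l.
  unfold mprod in *. simpl. rewrite IH. apply mulA.
Qed.
Lemma msum_mul (A : CStarAlg) (a b : car A) (f : nat -> car A) l :
  msum (map (fun j => cmul a (cmul (f j) b)) l) = cmul a (cmul (msum (map f l)) b).
Proof.
  induction l as [|c l IH]; simpl. rewrite mul0l, mul0r. reflexivity.
  unfold msum in *. simpl. rewrite IH. rewrite <- mulDr, <- mulDl. reflexivity.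
Qed.
Lemma star_mprod (A : CStarAlg) (l : list (car A)) :
  (forall y, In y l -> cstar y = y) -> cstar (mprod l) = mprod (rev l).
Proof.
  induction l as [|a l IH]; intro H; simpl. apply star1.
  unfold mprod in *. simpl. rewrite starM, IH.
  - rewrite (H a (or_introl eq_refl)). fold (mprod (rev l ++ [a])). fold (mprod (rev l)).
    rewrite mprod_app. unfold mprod at 3. simpl. rewrite mul1r. reflexivity.
  - intros y Hy. apply H. right; exact Hy.
Qed.
Lemma half0 (A : CStarAlg) (y : car A) : y = copp y -> y = c0.
Proof.
  intro H.
  assert (H1 : cadd y y = c0). { rewrite H at 1. apply addN. }
  assert (H2 : cadd y y = csc _ (Cadd C1 C1) y). { rewrite scDl, sc1. reflexivity. }
  assert (Hc : forall a, csc _ a (@c0 A) = c0).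
  { intro a. apply double0. rewrite <- scDr, add0. reflexivity. }
  assert (HC : Cmul (1/2, 0)%R (Cadd C1 C1) = C1).
  { unfold Cmul, Cadd, C1; simpl. f_equal; field. }
  rewrite <- (sc1 A y). rewrite <- HC. rewrite <- scA. rewrite <- H2, H1. apply Hc.
Qed.
Definition neqp (i : nat -> nat) (pr : nat * nat) : bool := negb (i (fst pr) =? i (snd pr)).
Definition sg (D : list (nat * nat)) (i : nat -> nat) : bool :=
  Nat.odd (length (filter (neqp i) D)).
Lemma sg_nil i : sg [] i = false. Proof. reflexivity. Qed.
Lemma sg_cons pr D i : sg (pr :: D) i = xorb (neqp i pr) (sg D i).
Proof.
  unfold sg; simpl. destruct (neqp i pr); simpl; [|reflexivity].
  rewrite Nat.odd_succ, <- Nat.negb_odd. reflexivity.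
Qed.
Lemma sg_app D1 D2 i : sg (D1 ++ D2) i = xorb (sg D1 i) (sg D2 i).
Proof.
  induction D1 as [|p D IH]; simpl. reflexivity.
  rewrite !sg_cons, IH. symmetry; apply xorb_assoc.
Qed.
Lemma sg_perm D D' i : Permutation D D' -> sg D i = sg D' i.
Proof.
  induction 1; rewrite ?sg_cons; try congruence.
  destruct (neqp i x), (neqp i y); reflexivity.
Qed.
Definition peqb (p q : nat * nat) : bool := (fst p =? fst q) && (snd p =? snd q).
Lemma peqb_eq p q : peqb p q = true <-> p = q.
Proof.
  destruct p, q; unfold peqb; simpl. rewrite andb_true_iff, !Nat.eqb_eq.
  split. intros [-> ->]; reflexivity. intro H; inversion H; auto.
Qed.
Definition inbp (p : nat * nat) (l : list (nat * nat)) : bool := existsb (peqb p) l.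
Lemma inbp_In p l : inbp p l = true -> In p l.
Proof.
  unfold inbp. rewrite existsb_exists. intros [q [Hq E]]. apply peqb_eq in E. subst; auto.
Qed.
Fixpoint rem1 (p : nat * nat) (l : list (nat * nat)) : list (nat * nat) :=
  match l with [] => [] | q :: l' => if peqb p q then l' else q :: rem1 p l' end.
Lemma rem1_perm p l : In p l -> Permutation l (p :: rem1 p l).
Proof.
  induction l as [|q l IH]; simpl. contradiction.
  intros [E|H].
  - subst. assert (peqb p p = true) as ->. apply peqb_eq; auto. auto.
  - destruct (peqb p q) eqn:E. apply peqb_eq in E; subst; auto.
    eapply perm_trans. apply perm_skip. apply IH, H. apply perm_swap.
Qed.
Definition toggle (p : nat * nat) (acc : list (nat * nat)) :=
  if inbp p acc then rem1 p acc else p :: acc.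
Lemma sg_toggle p acc i : sg (toggle p acc) i = xorb (neqp i p) (sg acc i).
Proof.
  unfold toggle. destruct (inbp p acc) eqn:E.
  - apply inbp_In in E. rewrite (sg_perm _ _ i (rem1_perm _ _ E)), sg_cons.
    destruct (neqp i p), (sg (rem1 p acc) i); reflexivity.
  - apply sg_cons.
Qed.
Definition orient (p : nat * nat) : nat * nat :=
  if fst p <=? snd p then p else (snd p, fst p).
Definition norm (D : list (nat * nat)) : list (nat * nat) :=
  fold_right toggle [] (map orient (filter (fun p => negb (fst p =? snd p)) D)).
Lemma sg_norm D i : sg (norm D) i = sg D i.
Proof.
  unfold norm. induction D as [|p D IH]; simpl. reflexivity.
  rewrite sg_cons. destruct (fst p =? snd p) eqn:E; simpl.
  - rewrite IH. apply Nat.eqb_eq in E. unfold neqp. rewrite E, Nat.eqb_refl. reflexivity.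
  - rewrite sg_toggle, IH. f_equal. unfold orient, neqp.
    destruct (fst p <=? snd p); simpl; auto. rewrite Nat.eqb_sym; auto.
Qed.
Fixpoint permb (l1 l2 : list (nat * nat)) : bool :=
  match l1 with
  | [] => match l2 with [] => true | _ => false end
  | p :: l1' => inbp p l2 && permb l1' (rem1 p l2)
  end.
Lemma permb_perm l1 l2 : permb l1 l2 = true -> Permutation l1 l2.
Proof.
  revert l2; induction l1 as [|p l IH]; intros l2 H; simpl in H.
  - destruct l2; [auto|discriminate].
  - apply andb_true_iff in H as [H1 H2]. apply inbp_In in H1.
    eapply perm_trans. apply perm_skip. apply IH, H2. apply Permutation_sym, rem1_perm, H1.
Qed.
Lemma sg_map g D i : sg (map (fun pr => (g (fst pr), g (snd pr))) D) i = sg D (fun v => i (g v)).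
Proof. induction D; simpl; rewrite ?sg_cons, ?IHD; reflexivity. Qed.
Lemma sg_ext D i j : (forall pr, In pr D -> i (fst pr) = j (fst pr) /\ i (snd pr) = j (snd pr)) ->
  sg D i = sg D j.
Proof.
  induction D as [|p D IH]; intro H; simpl. reflexivity.
  rewrite !sg_cons. destruct (H p (or_introl eq_refl)) as [E1 E2]. unfold neqp. rewrite E1, E2.
  rewrite IH; auto. intros; apply H; right; auto.
Qed.

Fixpoint leqb (l1 l2 : list nat) : bool :=
  match l1, l2 with
  | [], [] => true
  | a :: l1', b :: l2' => (a =? b) && leqb l1' l2'
  | _, _ => false end.
Lemma leqb_eq l1 l2 : leqb l1 l2 = true -> l1 = l2.
Proof.
  revert l2; induction l1 as [|a l IH]; intros [|b l2] H; simpl in H; try discriminate; auto.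
  apply andb_true_iff in H as [H1 H2]. apply Nat.eqb_eq in H1. subst. f_equal; auto.
Qed.
Definition inbn (v : nat) (l : list nat) : bool := existsb (Nat.eqb v) l.
Lemma inbn_false v l : inbn v l = false -> ~ In v l.
Proof.
  unfold inbn. intros H Hin. assert (existsb (Nat.eqb v) l = true).
  apply existsb_exists. exists v. split; auto. apply Nat.eqb_refl. congruence.
Qed.
Inductive fact := Fact (n : nat) (L P : list nat) (D : list (nat * nat)).
Definition Wd (A : CStarAlg) (x : nat -> car A) (w : list nat) : car A := mprod (map x w).
Definition Holds (N : nat) (A : CStarAlg) (x : nat -> car A) (b : bool) (f : fact) : Prop :=
  match f with Fact n L P D =>
    forall i, (forall v, v < n -> i v < N) ->
      Wd A x (map i L) = sgn (b && sg D i) (Wd A x (map i P)) end.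
Definition dflt := Fact 0 [] [] [].
Lemma Holds_dflt N A x b : Holds N A x b dflt.
Proof. simpl. intros. rewrite sg_nil, andb_false_r. reflexivity. Qed.

Inductive step :=
| SRefl (n : nat) (L : list nat)
| SRelabel (a n2 : nat) (g : list nat)
| SSym (a : nat)
| STrans (a c : nat)
| SStar (a : nat)
| SMulR (a : nat)
| SMulL (a : nat)
| SContr (a v q1 q2 : nat).

Definition apply_step (fs : list fact) (s : step) : option fact :=
  match s with
  | SRefl n L => Some (Fact n L L [])
  | SRelabel a n2 g =>
      match nth a fs dflt with Fact n L P D =>
        if forallb (fun v => nth v g 0 <? n2) (seq 0 n)
        then Some (Fact n2 (map (fun v => nth v g 0) L) (map (fun v => nth v g 0) P)
                (norm (map (fun pr => (nth (fst pr) g 0, nth (snd pr) g 0)) D)))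
        else None end
  | SSym a => match nth a fs dflt with Fact n L P D => Some (Fact n P L D) end
  | STrans a c =>
      match nth a fs dflt, nth c fs dflt with Fact n L P D1, Fact n2 P2 Q D2 =>
        if (n =? n2) && leqb P P2 then Some (Fact n L Q (norm (D1 ++ D2))) else None end
  | SStar a => match nth a fs dflt with Fact n L P D =>
        if forallb (fun v => v <? n) (L ++ P) then Some (Fact n (rev L) (rev P) D) else None end
  | SMulR a => match nth a fs dflt with Fact n L P D =>
        Some (Fact (S n) (L ++ [n]) (P ++ [n]) D) end
  | SMulL a => match nth a fs dflt with Fact n L P D =>
        Some (Fact (S n) (n :: L) (n :: P) D) end
  | SContr a v q1 q2 => match nth a fs dflt with Fact n L P D =>
        let L1 := firstn q1 L in let L2 := skipn (S (S q1)) L in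
        let P1 := firstn q2 P in let P2 := skipn (S (S q2)) P in
        if leqb L (L1 ++ v :: v :: L2) && leqb P (P1 ++ v :: v :: P2)
           && negb (inbn v (L1 ++ L2 ++ P1 ++ P2))
           && forallb (fun pr => negb (fst pr =? v) && negb (snd pr =? v)) D
        then Some (Fact n (L1 ++ L2) (P1 ++ P2) D) else None end
  end.

Fixpoint run (fs : list fact) (ss : list step) : option (list fact) :=
  match ss with
  | [] => Some fs
  | s :: ss' => match apply_step fs s with Some f => run (fs ++ [f]) ss' | None => None end
  end.

Lemma Forall_nth' {T} (P : T -> Prop) l d a : Forall P l -> P d -> P (nth a l d).
Proof.
  intros H Hd. revert a; induction H; intros [|a]; simpl; auto.
Qed.

Lemma Wd_app A x l1 l2 : Wd A x (l1 ++ l2) = cmul (Wd A x l1) (Wd A x l2).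
Proof. unfold Wd. rewrite map_app. apply mprod_app. Qed.

Lemma apply_sound N A x b (Hs : sphere_pt N A x) fs s f :
  Forall (Holds N A x b) fs -> apply_step fs s = Some f -> Holds N A x b f.
Proof.
  intros HF Hap.
  destruct s as [n L|a n2 g|a|a c|a|a|a|a v q1 q2]; cbn -[skipn firstn] in Hap.
  - inversion Hap; subst. simpl. intros. rewrite sg_nil, andb_false_r. reflexivity.
  - pose proof (Forall_nth' _ fs dflt a HF (Holds_dflt N A x b)) as H.
    destruct (nth a fs dflt) as [n L P D].
    destruct (forallb _ _) eqn:Hc; [|discriminate]. inversion Hap; subst. clear Hap.
    rewrite forallb_forall in Hc.
    simpl in *. intros i Hi.
    rewrite sg_norm, (sg_map (fun v => nth v g 0)), !map_map.
    apply (H (fun v => i (nth v g 0))).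
    intros v Hv. apply Hi. apply Nat.ltb_lt. apply Hc. apply in_seq. lia.
  - pose proof (Forall_nth' _ fs dflt a HF (Holds_dflt N A x b)) as H.
    destruct (nth a fs dflt) as [n L P D]. inversion Hap; subst. simpl in *.
    intros i Hi. rewrite (H i Hi), sgn_sgn, xorb_nilpotent. reflexivity.
  - pose proof (Forall_nth' _ fs dflt a HF (Holds_dflt N A x b)) as H1.
    pose proof (Forall_nth' _ fs dflt c HF (Holds_dflt N A x b)) as H2.
    destruct (nth a fs dflt) as [n L P D1]. destruct (nth c fs dflt) as [n' P2 Q D2].
    destruct ((n =? n') && leqb P P2) eqn:Hc; [|discriminate]. inversion Hap; subst. clear Hap.
    apply andb_true_iff in Hc as [Hn HP]. apply Nat.eqb_eq in Hn. apply leqb_eq in HP. subst.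
    simpl in *. intros i Hi. rewrite sg_norm, sg_app, (H1 i Hi), (H2 i Hi), sgn_sgn.
    destruct b; reflexivity.
  - pose proof (Forall_nth' _ fs dflt a HF (Holds_dflt N A x b)) as H.
    destruct (nth a fs dflt) as [n L P D].
    destruct (forallb _ _) eqn:Hc; [|discriminate]. inversion Hap; subst. clear Hap.
    rewrite forallb_forall in Hc. simpl in *. intros i Hi.
    assert (Hsa : forall l, (forall v, In v l -> In v (L ++ P)) ->
              cstar (Wd A x (map i l)) = Wd A x (map i (rev l))).
    { intros l Hl. unfold Wd. rewrite star_mprod.
      - rewrite !map_rev. reflexivity.
      - intros y Hy. apply in_map_iff in Hy as [w [<- Hw]]. apply in_map_iff in Hw as [v [<- Hv]].
        apply (proj1 Hs). apply Hi. apply Nat.ltb_lt, Hc, Hl, Hv. }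
    rewrite <- Hsa, <- Hsa. rewrite (H i Hi), sgn_star. reflexivity.
    intros; apply in_or_app; auto. intros; apply in_or_app; auto.
  - pose proof (Forall_nth' _ fs dflt a HF (Holds_dflt N A x b)) as H.
    destruct (nth a fs dflt) as [n L P D]. inversion Hap; subst. simpl in *.
    intros i Hi. rewrite !map_app, !Wd_app, (H i), sgn_mull. reflexivity.
    intros; apply Hi; lia.
  - pose proof (Forall_nth' _ fs dflt a HF (Holds_dflt N A x b)) as H.
    destruct (nth a fs dflt) as [n L P D]. inversion Hap; subst. simpl in *.
    intros i Hi. 
    assert (E : forall l, Wd A x (i n :: map i l) = cmul (x (i n)) (Wd A x (map i l))) by reflexivity.
    rewrite !E, (H i), sgn_mulr. reflexivity.
    intros; apply Hi; lia.
  - pose proof (Forall_nth' _ fs dflt a HF (Holds_dflt N A x b)) as H.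
    destruct (nth a fs dflt) as [n L P D].
    match type of Hap with context [if ?c then _ else _] => destruct c eqn:Hc end; [|discriminate].
    inversion Hap; subst. clear Hap.
    apply andb_true_iff in Hc as [Hc HD]. apply andb_true_iff in Hc as [Hc Hv].
    apply andb_true_iff in Hc as [HL HP]. apply leqb_eq in HL. apply leqb_eq in HP.
    apply negb_true_iff, inbn_false in Hv. rewrite forallb_forall in HD.
    set (L1 := firstn q1 L) in *. set (L2 := skipn (S (S q1)) L) in *.
    set (P1 := firstn q2 P) in *. set (P2 := skipn (S (S q2)) P) in *.
    unfold Holds in H |- *. intros i Hi.
    set (ij := fun j t => if t =? v then j else i t).
    assert (Hext : forall j l, ~ In v l -> map (ij j) l = map i l).
    { intros j l Hl. apply map_ext_in. intros t Ht. unfold ij.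
      destruct (t =? v) eqn:E; auto. apply Nat.eqb_eq in E. rewrite E in Ht; contradiction. }
    assert (HW : forall j l1 l2, ~ In v l1 -> ~ In v l2 ->
      Wd A x (map (ij j) (l1 ++ v :: v :: l2)) =
      cmul (Wd A x (map i l1)) (cmul (cmul (x j) (x j)) (Wd A x (map i l2)))).
    { intros j l1 l2 H1 H2. rewrite map_app, Wd_app, Hext by auto. f_equal.
      simpl. unfold ij at 1 2. rewrite Nat.eqb_refl. rewrite Hext by auto.
      unfold Wd; simpl. unfold mprod; simpl. rewrite mulA. reflexivity. }
    assert (Hsg : forall j, sg D (ij j) = sg D i).
    { intro j. apply sg_ext. intros pr Hpr. specialize (HD pr Hpr).
      apply andb_true_iff in HD as [E1 E2]. apply negb_true_iff in E1, E2. unfold ij.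
      rewrite E1, E2. auto. }
    assert (Hrel : forall j, j < N ->
      cmul (Wd A x (map i L1)) (cmul (cmul (x j) (x j)) (Wd A x (map i L2))) =
      sgn (b && sg D i) (cmul (Wd A x (map i P1)) (cmul (cmul (x j) (x j)) (Wd A x (map i P2))))).
    { intros j Hj. rewrite <- !HW, <- HL, <- HP, <- (Hsg j).
      apply H. intros t Ht. unfold ij. destruct (t =? v); auto.
      all: intro; apply Hv; rewrite ?in_app_iff; tauto. }
    assert (Hone : forall u w : car A, cmul u w =
       msum (map (fun j => cmul u (cmul (cmul (x j) (x j)) w)) (seq 0 N))).
    { intros u w. rewrite msum_mul, (proj2 Hs), mul1l. reflexivity. }
    rewrite !map_app, !Wd_app, Hone, (Hone (Wd A x (map i P1))), <- sgn_msum.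
    f_equal. apply map_ext_in. intros j Hj. apply in_seq in Hj. apply Hrel. lia.
Qed.

Lemma run_sound N A x b (Hs : sphere_pt N A x) ss : forall fs fs',
  Forall (Holds N A x b) fs -> run fs ss = Some fs' -> Forall (Holds N A x b) fs'.
Proof.
  induction ss as [|s ss IH]; intros fs fs' HF Hr; simpl in Hr.
  - inversion Hr; subst; auto.
  - destruct (apply_step fs s) as [f|] eqn:E; [|discriminate].
    apply (IH (fs ++ [f])); auto. apply Forall_app; split; auto.
    constructor; [|constructor]. eapply apply_sound; eauto.
Qed.

Definition fact_match (f t : fact) : bool :=
  match f, t with Fact n L P D, Fact n' L' P' D' =>
    (n =? n') && leqb L L' && leqb P P' && permb (norm D) (norm D') end.
Lemma fact_match_sound N A x b f t : Holds N A x b f -> fact_match f t = true -> Holds N A x b t.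
Proof.
  destruct f as [n L P D], t as [n' L' P' D']; simpl. intros H Hm.
  apply andb_true_iff in Hm as [Hm Hp]. apply andb_true_iff in Hm as [Hm HP].
  apply andb_true_iff in Hm as [Hn HL]. apply Nat.eqb_eq in Hn. apply leqb_eq in HL, HP. subst.
  intros i Hi. rewrite (H i Hi). f_equal. f_equal.
  rewrite <- (sg_norm D), <- (sg_norm D'). apply sg_perm, permb_perm, Hp.
Qed.
Definition cert_ok (start : list fact) (target : fact) (ss : list step) : bool :=
  match run start ss with
  | Some fs => existsb (fun f => fact_match f target) fs
  | None => false end.
Lemma cert_sound N A x b (Hs : sphere_pt N A x) start target ss :
  Forall (Holds N A x b) start -> cert_ok start target ss = true -> Holds N A x b target.
Proof.
  unfold cert_ok. intros HF Hc. destruct (run start ss) as [fs|] eqn:E; [|discriminate].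
  apply existsb_exists in Hc as [f [Hin Hm]].
  pose proof (run_sound N A x b Hs ss start fs HF E) as HF'.
  rewrite Forall_forall in HF'. eapply fact_match_sound; eauto.
Qed.
Definition Dinv (p : list nat) : list (nat * nat) :=
  map (fun pr => (nth (fst pr) p 0, nth (snd pr) p 0))
    (filter (fun pr => (fst pr <? snd pr) && (nth (snd pr) p 0 <? nth (fst pr) p 0))
       (list_prod (seq 0 (length p)) (seq 0 (length p)))).
Definition Fperm (p : list nat) : fact := Fact (length p) (seq 0 (length p)) p (Dinv p).
Definition FC := Fperm [1;0].
Definition FH := Fperm [2;1;0].
Fixpoint allf (m n : nat) : list (list nat) :=
  match n with 0 => [[]] | S n' => flat_map (fun a => map (cons a) (allf m n')) (seq 0 m) end.
Fixpoint nodupb (l : list nat) : bool :=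
  match l with [] => true | a :: l' => negb (inbn a l') && nodupb l' end.
Definition certCH : list step := [SMulR 0;
  SMulL 0;
  SRelabel 2 3 [1;2;0];
  SRelabel 1 3 [0;2;1];
  STrans 3 4;
  SRelabel 5 3 [1;0;2];
  STrans 1 6].
Definition table : list (list nat * nat * list step * list step * list step) := [
([0], 0, [SRefl 1 [0]], [SRefl 1 [0]], []);
([0;1], 0, [SRefl 2 [0;1]], [SRefl 2 [0;1]], []);
([1;0], 1, [], [], []);
([0;1;2], 0, [SRefl 3 [0;1;2]], [SRefl 3 [0;1;2]], []);
([0;2;1], 1, [SMulL 0;
  SRelabel 1 3 [1;2;0]], [SMulL 0;
  SRelabel 1 4 [1;2;3;0];
  SRelabel 2 3 [0;0;1;2];
  SContr 3 0 0 0;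
  SRelabel 4 2 [0;0;1]], []);
([1;0;2], 1, [SMulR 0], [SMulR 0;
  SRelabel 1 3 [0;1;2;2];
  SContr 2 2 2 2;
  SRelabel 3 2 [0;1;0]], []);
([1;2;0], 1, [SMulR 0;
  SMulL 0;
  SRelabel 2 3 [1;2;0];
  SRelabel 3 3 [1;0;2];
  STrans 1 4], [SMulR 0;
  SRelabel 1 3 [0;1;2;2];
  SRelabel 0 3 [2;0;2];
  SMulL 3;
  SRelabel 4 3 [0;1;2;1];
  STrans 2 5;
  SContr 6 2 2 2;
  SRelabel 7 2 [0;1;0]], []);
([2;0;1], 1, [SMulL 0;
  SRelabel 1 3 [1;2;0];
  SMulR 0;
  SRelabel 3 3 [0;2;1];
  STrans 2 4], [SStar 0;
  SRelabel 1 3 [2;1;0];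
  SMulR 2;
  SRelabel 3 3 [0;1;2;2];
  SRelabel 2 3 [2;0;2];
  SMulL 5;
  SRelabel 6 3 [0;1;2;1];
  STrans 4 7;
  SContr 8 2 2 2;
  SRelabel 9 2 [0;1;0]], []);
([2;1;0], 2, [SMulR 0;
  SMulL 0;
  SRelabel 2 3 [1;2;0];
  SRelabel 1 3 [0;2;1];
  STrans 3 4;
  SRelabel 5 3 [1;0;2];
  STrans 1 6], [], []);
([0;1;2;3], 0, [SRefl 4 [0;1;2;3]], [SRefl 4 [0;1;2;3]], []);
([0;1;3;2], 1, [SMulL 0;
  SRelabel 1 3 [1;2;0];
  SMulL 2;
  SRelabel 3 4 [1;2;3;0]], [SRelabel 0 3 [0;0;1;2];
  SContr 1 0 0 0;
  SRelabel 2 2 [0;0;1]], []);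
([0;2;1;3], 1, [SMulR 0;
  SMulL 1;
  SRelabel 2 4 [1;2;3;0]], [SMulR 0;
  SRelabel 1 4 [0;1;2;3;3];
  SContr 2 3 3 3;
  SRelabel 3 3 [0;1;2;0];
  SMulL 4;
  SRelabel 5 4 [1;2;3;0];
  SRelabel 6 3 [0;0;1;2];
  SContr 7 0 0 0;
  SRelabel 8 2 [0;0;1]], []);
([0;2;3;1], 1, [SMulR 0;
  SMulL 1;
  SRelabel 2 4 [1;2;3;0];
  SMulL 0;
  SRelabel 4 3 [1;2;0];
  SMulL 5;
  SRelabel 6 4 [1;2;3;0];
  SRelabel 7 4 [0;2;1;3];
  STrans 3 8], [SMulL 0;
  SRelabel 1 5 [1;2;3;4;0];
  SRelabel 2 4 [0;0;1;2;3];
  SContr 3 0 0 0;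
  SRelabel 4 3 [0;0;1;2];
  SMulR 5;
  SRelabel 6 3 [0;1;2;2];
  SRelabel 5 3 [2;0;2];
  SMulL 8;
  SRelabel 9 3 [0;1;2;1];
  STrans 7 10;
  SContr 11 2 2 2;
  SRelabel 12 2 [0;1;0]], []);
([0;3;1;2], 1, [SMulL 0;
  SRelabel 1 3 [1;2;0];
  SMulL 2;
  SRelabel 3 4 [1;2;3;0];
  SMulR 0;
  SMulL 5;
  SRelabel 6 4 [1;2;3;0];
  SRelabel 7 4 [0;1;3;2];
  STrans 4 8], [SStar 0;
  SRelabel 1 4 [3;2;1;0];
  SRelabel 2 4 [0;3;1;2];
  STrans 0 3;
  SRelabel 4 3 [0;0;1;2];
  SContr 5 0 0 1;
  SRelabel 6 2 [0;0;1]], []);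
([0;3;2;1], 2, [SMulR 0;
  SMulL 1;
  SRelabel 2 4 [1;2;3;0];
  SMulL 0;
  SRelabel 4 3 [1;2;0];
  SMulL 5;
  SRelabel 6 4 [1;2;3;0];
  SRelabel 3 4 [0;1;3;2];
  STrans 7 8;
  SRelabel 9 4 [0;2;1;3];
  STrans 3 10], [SMulL 0;
  SRelabel 1 5 [1;2;3;4;0];
  SRelabel 2 4 [0;0;1;2;3];
  SContr 3 0 0 0;
  SRelabel 4 3 [0;0;1;2]], [SMulL 0;
  SRelabel 1 4 [1;2;3;0]]);
([1;0;2;3], 1, [SMulR 0;
  SMulR 1], [SRelabel 0 3 [0;1;2;2];
  SContr 1 2 2 2;
  SRelabel 2 2 [0;1;0]], []);
([1;0;3;2], 1, [SMulR 0;
  SMulR 1;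
  SMulL 0;
  SRelabel 3 3 [1;2;0];
  SMulL 4;
  SRelabel 5 4 [1;2;3;0];
  SRelabel 6 4 [1;0;2;3];
  STrans 2 7], [SRelabel 0 3 [0;0;1;2];
  SContr 1 0 0 0;
  SRelabel 2 2 [0;0;1]], []);
([1;2;0;3], 1, [SMulR 0;
  SMulR 1;
  SMulL 1;
  SRelabel 3 4 [1;2;3;0];
  SRelabel 4 4 [1;0;2;3];
  STrans 2 5], [SMulR 0;
  SRelabel 1 4 [0;1;2;3;3];
  SContr 2 3 3 3;
  SRelabel 3 3 [0;1;2;0];
  SMulR 4;
  SRelabel 5 3 [0;1;2;2];
  SRelabel 4 3 [2;0;2];
  SMulL 7;
  SRelabel 8 3 [0;1;2;1];
  STrans 6 9;
  SContr 10 2 2 2;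
  SRelabel 11 2 [0;1;0]], []);
([1;2;3;0], 1, [SMulR 0;
  SMulR 1;
  SMulL 1;
  SRelabel 3 4 [1;2;3;0];
  SMulL 0;
  SRelabel 5 3 [1;2;0];
  SMulL 6;
  SRelabel 7 4 [1;2;3;0];
  SRelabel 8 4 [0;2;1;3];
  STrans 4 9;
  SRelabel 10 4 [1;0;2;3];
  STrans 2 11], [SRelabel 0 3 [0;1;1;2];
  SContr 1 1 1 0;
  SRelabel 2 2 [0;0;1]], []);
([1;3;0;2], 1, [SMulR 0;
  SMulR 1;
  SMulL 0;
  SRelabel 3 3 [1;2;0];
  SMulL 4;
  SRelabel 5 4 [1;2;3;0];
  SMulL 1;
  SRelabel 7 4 [1;2;3;0];
  SRelabel 8 4 [0;1;3;2];
  STrans 6 9;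
  SRelabel 10 4 [1;0;2;3];
  STrans 2 11], [SRelabel 0 4 [1;3;0;2];
  STrans 0 1;
  SRelabel 2 3 [0;1;2;2];
  SContr 3 2 2 0;
  SRelabel 4 2 [0;1;0]], []);
([1;3;2;0], 1, [SMulR 0;
  SMulR 1;
  SMulL 1;
  SRelabel 3 4 [1;2;3;0];
  SRelabel 4 4 [1;0;2;3];
  STrans 2 5;
  SMulL 0;
  SRelabel 7 3 [1;2;0];
  SMulL 8;
  SRelabel 9 4 [1;2;3;0];
  SRelabel 4 4 [0;1;3;2];
  STrans 10 11;
  SRelabel 12 4 [1;2;0;3];
  STrans 6 13], [SRelabel 0 3 [0;1;2;2];
  SContr 1 2 2 1;
  SRelabel 2 2 [0;1;0]], []);
([2;0;1;3], 1, [SMulR 0;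
  SMulL 1;
  SRelabel 2 4 [1;2;3;0];
  SMulR 1;
  SRelabel 4 4 [0;2;1;3];
  STrans 3 5], [SStar 0;
  SRelabel 1 4 [3;2;1;0];
  SRelabel 2 4 [2;0;1;3];
  STrans 0 3;
  SRelabel 4 3 [0;1;1;2];
  SContr 5 1 1 0;
  SRelabel 6 2 [0;0;1]], []);
([2;0;3;1], 1, [SMulR 0;
  SMulL 1;
  SRelabel 2 4 [1;2;3;0];
  SMulR 1;
  SMulL 0;
  SRelabel 5 3 [1;2;0];
  SMulL 6;
  SRelabel 7 4 [1;2;3;0];
  SRelabel 8 4 [1;0;2;3];
  STrans 4 9;
  SRelabel 10 4 [0;2;1;3];
  STrans 3 11], [SRelabel 0 4 [2;0;3;1];
  STrans 0 1;
  SRelabel 2 3 [0;1;2;2];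
  SContr 3 2 2 0;
  SRelabel 4 2 [0;1;0]], []);
([2;1;0;3], 2, [SMulR 0;
  SMulR 1;
  SMulL 1;
  SRelabel 3 4 [1;2;3;0];
  SRelabel 2 4 [0;2;1;3];
  STrans 4 5;
  SRelabel 6 4 [1;0;2;3];
  STrans 2 7], [SMulR 0;
  SRelabel 1 4 [0;1;2;3;3];
  SContr 2 3 3 3;
  SRelabel 3 3 [0;1;2;0]], [SMulR 0]);
([2;1;3;0], 1, [SMulR 0;
  SMulR 1;
  SMulL 1;
  SRelabel 3 4 [1;2;3;0];
  SRelabel 4 4 [1;0;2;3];
  STrans 2 5;
  SMulL 0;
  SRelabel 7 3 [1;2;0];
  SMulL 8;
  SRelabel 9 4 [1;2;3;0];
  SRelabel 10 4 [1;0;2;3];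
  STrans 2 11;
  SRelabel 12 4 [1;2;0;3];
  STrans 6 13], [SRelabel 0 3 [0;1;1;2];
  SContr 1 1 1 0;
  SRelabel 2 2 [0;0;1]], []);
([2;3;0;1], 2, [SMulR 0;
  SMulL 1;
  SRelabel 2 4 [1;2;3;0];
  SMulR 1;
  SRelabel 4 4 [0;2;1;3];
  STrans 3 5;
  SMulL 0;
  SRelabel 7 3 [1;2;0];
  SMulL 8;
  SRelabel 9 4 [1;2;3;0];
  SRelabel 3 4 [0;1;3;2];
  STrans 10 11;
  SRelabel 12 4 [2;0;1;3];
  STrans 6 13], [SMulR 0;
  SRelabel 1 4 [0;1;2;3;3];
  SRelabel 0 4 [3;0;1;3];
  SMulL 3;
  SRelabel 4 4 [0;1;2;3;2];
  STrans 2 5;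
  SContr 6 3 3 2;
  SRelabel 7 3 [0;1;2;0]], [SMulR 0;
  SMulL 0;
  SRelabel 2 4 [1;2;3;0];
  SRelabel 3 4 [2;1;0;3];
  STrans 1 4]);
([2;3;1;0], 1, [SMulR 0;
  SMulR 1;
  SMulL 1;
  SRelabel 3 4 [1;2;3;0];
  SRelabel 2 4 [0;2;1;3];
  STrans 4 5;
  SMulL 0;
  SRelabel 7 3 [1;2;0];
  SMulL 8;
  SRelabel 9 4 [1;2;3;0];
  SRelabel 4 4 [0;1;3;2];
  STrans 10 11;
  SRelabel 12 4 [2;0;1;3];
  STrans 6 13;
  SRelabel 14 4 [1;0;2;3];
  STrans 2 15], [SRelabel 0 3 [0;1;2;2];
  SContr 1 2 2 0;
  SRelabel 2 2 [0;1;0]], []);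
([3;0;1;2], 1, [SMulL 0;
  SRelabel 1 3 [1;2;0];
  SMulL 2;
  SRelabel 3 4 [1;2;3;0];
  SMulR 0;
  SMulL 5;
  SRelabel 6 4 [1;2;3;0];
  SMulR 5;
  SRelabel 8 4 [0;2;1;3];
  STrans 7 9;
  SRelabel 10 4 [0;1;3;2];
  STrans 4 11], [SRelabel 0 3 [0;0;1;2];
  SContr 1 0 0 1;
  SRelabel 2 2 [0;0;1]], []);
([3;0;2;1], 1, [SMulR 0;
  SMulL 1;
  SRelabel 2 4 [1;2;3;0];
  SMulL 0;
  SRelabel 4 3 [1;2;0];
  SMulL 5;
  SRelabel 6 4 [1;2;3;0];
  SRelabel 7 4 [0;2;1;3];
  STrans 3 8;
  SMulR 1;
  SRelabel 10 4 [0;2;1;3];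
  STrans 3 11;
  SRelabel 12 4 [0;2;3;1];
  STrans 9 13], [SRelabel 0 3 [0;1;1;2];
  SContr 1 1 1 2;
  SRelabel 2 2 [0;0;1]], []);
([3;1;0;2], 1, [SMulR 0;
  SMulR 1;
  SMulL 0;
  SRelabel 3 3 [1;2;0];
  SMulL 4;
  SRelabel 5 4 [1;2;3;0];
  SRelabel 6 4 [1;0;2;3];
  STrans 2 7;
  SMulL 1;
  SRelabel 9 4 [1;2;3;0];
  SRelabel 2 4 [0;2;1;3];
  STrans 10 11;
  SRelabel 12 4 [1;0;3;2];
  STrans 8 13], [SRelabel 0 3 [0;0;1;2];
  SContr 1 0 0 1;
  SRelabel 2 2 [0;0;1]], []);
([3;1;2;0], 1, [SMulR 0;
  SMulR 1;
  SMulL 1;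
  SRelabel 3 4 [1;2;3;0];
  SMulL 0;
  SRelabel 5 3 [1;2;0];
  SMulL 6;
  SRelabel 7 4 [1;2;3;0];
  SRelabel 8 4 [0;2;1;3];
  STrans 4 9;
  SRelabel 2 4 [0;2;1;3];
  STrans 4 11;
  SRelabel 12 4 [0;2;3;1];
  STrans 10 13;
  SRelabel 14 4 [1;0;2;3];
  STrans 2 15], [SRelabel 0 3 [0;1;1;2];
  SContr 1 1 1 1;
  SRelabel 2 2 [0;0;1]], []);
([3;2;0;1], 1, [SMulR 0;
  SMulL 1;
  SRelabel 2 4 [1;2;3;0];
  SMulR 1;
  SMulL 0;
  SRelabel 5 3 [1;2;0];
  SMulL 6;
  SRelabel 7 4 [1;2;3;0];
  SRelabel 8 4 [1;0;2;3];
  STrans 4 9;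
  SRelabel 4 4 [0;2;1;3];
  STrans 3 11;
  SRelabel 12 4 [1;0;3;2];
  STrans 10 13;
  SRelabel 14 4 [0;2;1;3];
  STrans 3 15], [SRelabel 0 3 [0;0;1;2];
  SContr 1 0 0 2;
  SRelabel 2 2 [0;0;1]], []);
([3;2;1;0], 1, [SMulR 0;
  SMulR 1;
  SMulL 1;
  SRelabel 3 4 [1;2;3;0];
  SRelabel 4 4 [1;0;2;3];
  STrans 2 5;
  SMulL 0;
  SRelabel 7 3 [1;2;0];
  SMulL 8;
  SRelabel 9 4 [1;2;3;0];
  SRelabel 10 4 [1;0;2;3];
  STrans 2 11;
  SRelabel 2 4 [0;2;1;3];
  STrans 4 13;
  SRelabel 14 4 [1;0;3;2];
  STrans 12 15;
  SRelabel 16 4 [1;2;0;3];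
  STrans 6 17], [SRelabel 0 3 [0;1;2;2];
  SContr 1 2 2 0;
  SRelabel 2 2 [0;1;0]], []);
([0;1;2;3;4], 0, [SRefl 5 [0;1;2;3;4]], [SRefl 5 [0;1;2;3;4]], []);
([0;1;2;4;3], 1, [SMulL 0;
  SRelabel 1 3 [1;2;0];
  SMulL 2;
  SRelabel 3 4 [1;2;3;0];
  SMulL 4;
  SRelabel 5 5 [1;2;3;4;0]], [SRelabel 0 4 [0;0;1;2;3];
  SContr 1 0 0 0;
  SRelabel 2 3 [0;0;1;2];
  SMulL 3;
  SRelabel 4 4 [1;2;3;0];
  SRelabel 5 3 [0;0;1;2];
  SContr 6 0 0 0;
  SRelabel 7 2 [0;0;1]], []);
([0;1;3;2;4], 1, [SMulR 0;
  SMulL 1;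
  SRelabel 2 4 [1;2;3;0];
  SMulL 3;
  SRelabel 4 5 [1;2;3;4;0]], [SRelabel 0 4 [0;0;1;2;3];
  SContr 1 0 0 0;
  SRelabel 2 3 [0;0;1;2];
  SMulR 3;
  SRelabel 4 3 [0;1;2;2];
  SContr 5 2 2 2;
  SRelabel 6 2 [0;1;0]], []);
([0;1;3;4;2], 1, [SMulR 0;
  SMulL 1;
  SRelabel 2 4 [1;2;3;0];
  SMulL 3;
  SRelabel 4 5 [1;2;3;4;0];
  SMulL 0;
  SRelabel 6 3 [1;2;0];
  SMulL 7;
  SRelabel 8 4 [1;2;3;0];
  SMulL 9;
  SRelabel 10 5 [1;2;3;4;0];
  SRelabel 11 5 [0;1;3;2;4];
  STrans 5 12], [SRelabel 0 4 [0;0;1;2;3];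
  SContr 1 0 0 0;
  SRelabel 2 3 [0;0;1;2];
  SMulR 3;
  SRelabel 4 3 [0;1;2;2];
  SRelabel 3 3 [2;0;2];
  SMulL 6;
  SRelabel 7 3 [0;1;2;1];
  STrans 5 8;
  SContr 9 2 2 2;
  SRelabel 10 2 [0;1;0]], []);
([0;1;4;2;3], 1, [SMulL 0;
  SRelabel 1 3 [1;2;0];
  SMulL 2;
  SRelabel 3 4 [1;2;3;0];
  SMulL 4;
  SRelabel 5 5 [1;2;3;4;0];
  SMulR 0;
  SMulL 7;
  SRelabel 8 4 [1;2;3;0];
  SMulL 9;
  SRelabel 10 5 [1;2;3;4;0];
  SRelabel 11 5 [0;1;2;4;3];
  STrans 6 12], [SStar 0;
  SRelabel 1 5 [4;3;2;1;0];
  SRelabel 2 4 [0;1;2;3;3];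
  SContr 3 3 3 3;
  SRelabel 4 3 [0;1;2;0];
  SMulR 5;
  SRelabel 6 3 [0;1;2;2];
  SRelabel 5 3 [2;0;2];
  SMulL 8;
  SRelabel 9 3 [0;1;2;1];
  STrans 7 10;
  SContr 11 2 2 2;
  SRelabel 12 2 [0;1;0]], []);
([0;1;4;3;2], 2, [SMulR 0;
  SMulL 1;
  SRelabel 2 4 [1;2;3;0];
  SMulL 3;
  SRelabel 4 5 [1;2;3;4;0];
  SMulL 0;
  SRelabel 6 3 [1;2;0];
  SMulL 7;
  SRelabel 8 4 [1;2;3;0];
  SMulL 9;
  SRelabel 10 5 [1;2;3;4;0];
  SRelabel 5 5 [0;1;2;4;3];
  STrans 11 12;
  SRelabel 13 5 [0;1;3;2;4];
  STrans 5 14], [SRelabel 0 4 [0;0;1;2;3];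
  SContr 1 0 0 0;
  SRelabel 2 3 [0;0;1;2]], [SMulL 0;
  SRelabel 1 4 [1;2;3;0];
  SMulL 2;
  SRelabel 3 5 [1;2;3;4;0]]);
([0;2;1;3;4], 1, [SMulR 0;
  SMulR 1;
  SMulL 2;
  SRelabel 3 5 [1;2;3;4;0]], [SRelabel 0 4 [0;1;2;3;3];
  SContr 1 3 3 3;
  SRelabel 2 3 [0;1;2;0];
  SMulL 3;
  SRelabel 4 4 [1;2;3;0];
  SRelabel 5 3 [0;0;1;2];
  SContr 6 0 0 0;
  SRelabel 7 2 [0;0;1]], []);
([0;2;1;4;3], 1, [SMulR 0;
  SMulR 1;
  SMulL 2;
  SRelabel 3 5 [1;2;3;4;0];
  SMulL 0;
  SRelabel 5 3 [1;2;0];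
  SMulL 6;
  SRelabel 7 4 [1;2;3;0];
  SMulL 8;
  SRelabel 9 5 [1;2;3;4;0];
  SRelabel 10 5 [0;2;1;3;4];
  STrans 4 11], [SRelabel 0 4 [0;1;1;2;3];
  SContr 1 1 1 1;
  SRelabel 2 3 [0;0;1;2];
  SMulL 3;
  SRelabel 4 4 [1;2;3;0];
  SRelabel 5 3 [0;0;1;2];
  SContr 6 0 0 0;
  SRelabel 7 2 [0;0;1]], []);
([0;2;3;1;4], 1, [SMulR 0;
  SMulR 1;
  SMulL 2;
  SRelabel 3 5 [1;2;3;4;0];
  SMulL 1;
  SRelabel 5 4 [1;2;3;0];
  SMulL 6;
  SRelabel 7 5 [1;2;3;4;0];
  SRelabel 8 5 [0;2;1;3;4];
  STrans 4 9], [SMulL 0;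
  SRelabel 1 6 [1;2;3;4;5;0];
  SRelabel 2 5 [0;0;1;2;3;4];
  SContr 3 0 0 0;
  SRelabel 4 4 [0;0;1;2;3];
  SMulR 0;
  SRelabel 6 5 [0;1;2;3;4;4];
  SContr 7 4 4 4;
  SRelabel 8 4 [0;1;2;3;0];
  SRelabel 9 4 [1;2;0;3];
  STrans 5 10;
  SRelabel 11 3 [0;0;1;2];
  SContr 12 0 0 0;
  SRelabel 13 2 [0;0;1]], []);
([0;2;3;4;1], 1, [SMulR 0;
  SMulR 1;
  SMulL 2;
  SRelabel 3 5 [1;2;3;4;0];
  SMulL 1;
  SRelabel 5 4 [1;2;3;0];
  SMulL 6;
  SRelabel 7 5 [1;2;3;4;0];
  SMulL 0;
  SRelabel 9 3 [1;2;0];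
  SMulL 10;
  SRelabel 11 4 [1;2;3;0];
  SMulL 12;
  SRelabel 13 5 [1;2;3;4;0];
  SRelabel 14 5 [0;1;3;2;4];
  STrans 8 15;
  SRelabel 16 5 [0;2;1;3;4];
  STrans 4 17], [SRelabel 0 4 [0;1;2;2;3];
  SContr 1 2 2 1;
  SRelabel 2 3 [0;1;0;2];
  SMulL 3;
  SRelabel 4 4 [1;2;3;0];
  SRelabel 5 3 [0;0;1;2];
  SContr 6 0 0 0;
  SRelabel 7 2 [0;0;1]], []);
([0;2;4;1;3], 1, [SMulR 0;
  SMulR 1;
  SMulL 2;
  SRelabel 3 5 [1;2;3;4;0];
  SMulL 0;
  SRelabel 5 3 [1;2;0];
  SMulL 6;
  SRelabel 7 4 [1;2;3;0];
  SMulL 8;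
  SRelabel 9 5 [1;2;3;4;0];
  SMulL 1;
  SRelabel 11 4 [1;2;3;0];
  SMulL 12;
  SRelabel 13 5 [1;2;3;4;0];
  SRelabel 14 5 [0;1;2;4;3];
  STrans 10 15;
  SRelabel 16 5 [0;2;1;3;4];
  STrans 4 17], [SMulL 0;
  SRelabel 1 6 [1;2;3;4;5;0];
  SRelabel 2 5 [0;0;1;2;3;4];
  SContr 3 0 0 0;
  SRelabel 4 4 [0;0;1;2;3];
  SRelabel 5 4 [1;3;0;2];
  STrans 5 6;
  SRelabel 7 3 [0;1;2;2];
  SContr 8 2 2 0;
  SRelabel 9 2 [0;1;0]], []);
([0;2;4;3;1], 1, [SMulR 0;
  SMulR 1;
  SMulL 2;
  SRelabel 3 5 [1;2;3;4;0];
  SMulL 1;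
  SRelabel 5 4 [1;2;3;0];
  SMulL 6;
  SRelabel 7 5 [1;2;3;4;0];
  SRelabel 8 5 [0;2;1;3;4];
  STrans 4 9;
  SMulL 0;
  SRelabel 11 3 [1;2;0];
  SMulL 12;
  SRelabel 13 4 [1;2;3;0];
  SMulL 14;
  SRelabel 15 5 [1;2;3;4;0];
  SRelabel 8 5 [0;1;2;4;3];
  STrans 16 17;
  SRelabel 18 5 [0;2;3;1;4];
  STrans 10 19], [SRelabel 0 4 [0;1;2;3;3];
  SContr 1 3 3 2;
  SRelabel 2 3 [0;1;2;0];
  SMulL 3;
  SRelabel 4 4 [1;2;3;0];
  SRelabel 5 3 [0;0;1;2];
  SContr 6 0 0 0;
  SRelabel 7 2 [0;0;1]], []);
([0;3;1;2;4], 1, [SMulR 0;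
  SMulL 1;
  SRelabel 2 4 [1;2;3;0];
  SMulL 3;
  SRelabel 4 5 [1;2;3;4;0];
  SMulR 1;
  SMulL 6;
  SRelabel 7 5 [1;2;3;4;0];
  SRelabel 8 5 [0;1;3;2;4];
  STrans 5 9], [SMulR 0;
  SRelabel 1 5 [0;1;2;3;4;4];
  SContr 2 4 4 4;
  SRelabel 3 4 [0;1;2;3;0];
  SMulL 0;
  SRelabel 5 6 [1;2;3;4;5;0];
  SRelabel 6 5 [0;0;1;2;3;4];
  SContr 7 0 0 0;
  SRelabel 8 4 [0;0;1;2;3];
  SRelabel 9 4 [0;3;1;2];
  STrans 4 10;
  SRelabel 11 3 [0;0;1;2];
  SContr 12 0 0 0;
  SRelabel 13 2 [0;0;1]], []);
([0;3;1;4;2], 1, [SMulR 0;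
  SMulL 1;
  SRelabel 2 4 [1;2;3;0];
  SMulL 3;
  SRelabel 4 5 [1;2;3;4;0];
  SMulR 1;
  SMulL 6;
  SRelabel 7 5 [1;2;3;4;0];
  SMulL 0;
  SRelabel 9 3 [1;2;0];
  SMulL 10;
  SRelabel 11 4 [1;2;3;0];
  SMulL 12;
  SRelabel 13 5 [1;2;3;4;0];
  SRelabel 14 5 [0;2;1;3;4];
  STrans 8 15;
  SRelabel 16 5 [0;1;3;2;4];
  STrans 5 17], [SMulL 0;
  SRelabel 1 6 [1;2;3;4;5;0];
  SRelabel 2 5 [0;0;1;2;3;4];
  SContr 3 0 0 0;
  SRelabel 4 4 [0;0;1;2;3];
  SRelabel 5 4 [2;0;3;1];
  STrans 5 6;
  SRelabel 7 3 [0;1;2;2];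
  SContr 8 2 2 0;
  SRelabel 9 2 [0;1;0]], []);
([0;3;2;1;4], 2, [SMulR 0;
  SMulR 1;
  SMulL 2;
  SRelabel 3 5 [1;2;3;4;0];
  SMulL 1;
  SRelabel 5 4 [1;2;3;0];
  SMulL 6;
  SRelabel 7 5 [1;2;3;4;0];
  SRelabel 4 5 [0;1;3;2;4];
  STrans 8 9;
  SRelabel 10 5 [0;2;1;3;4];
  STrans 4 11], [SMulR 0;
  SRelabel 1 5 [0;1;2;3;4;4];
  SContr 2 4 4 4;
  SRelabel 3 4 [0;1;2;3;0];
  SMulL 4;
  SRelabel 5 5 [1;2;3;4;0];
  SRelabel 6 4 [0;0;1;2;3];
  SContr 7 0 0 0;
  SRelabel 8 3 [0;0;1;2]], [SMulR 0;
  SMulL 1;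
  SRelabel 2 5 [1;2;3;4;0]]);
([0;3;2;4;1], 1, [SMulR 0;
  SMulR 1;
  SMulL 2;
  SRelabel 3 5 [1;2;3;4;0];
  SMulL 1;
  SRelabel 5 4 [1;2;3;0];
  SMulL 6;
  SRelabel 7 5 [1;2;3;4;0];
  SRelabel 8 5 [0;2;1;3;4];
  STrans 4 9;
  SMulL 0;
  SRelabel 11 3 [1;2;0];
  SMulL 12;
  SRelabel 13 4 [1;2;3;0];
  SMulL 14;
  SRelabel 15 5 [1;2;3;4;0];
  SRelabel 16 5 [0;2;1;3;4];
  STrans 4 17;
  SRelabel 18 5 [0;2;3;1;4];
  STrans 10 19], [SRelabel 0 4 [0;1;2;2;3];
  SContr 1 2 2 1;
  SRelabel 2 3 [0;1;0;2];
  SMulL 3;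
  SRelabel 4 4 [1;2;3;0];
  SRelabel 5 3 [0;0;1;2];
  SContr 6 0 0 0;
  SRelabel 7 2 [0;0;1]], []);
([0;3;4;1;2], 2, [SMulR 0;
  SMulL 1;
  SRelabel 2 4 [1;2;3;0];
  SMulL 3;
  SRelabel 4 5 [1;2;3;4;0];
  SMulR 1;
  SMulL 6;
  SRelabel 7 5 [1;2;3;4;0];
  SRelabel 8 5 [0;1;3;2;4];
  STrans 5 9;
  SMulL 0;
  SRelabel 11 3 [1;2;0];
  SMulL 12;
  SRelabel 13 4 [1;2;3;0];
  SMulL 14;
  SRelabel 15 5 [1;2;3;4;0];
  SRelabel 5 5 [0;1;2;4;3];
  STrans 16 17;
  SRelabel 18 5 [0;3;1;2;4];
  STrans 10 19], [SMulL 0;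
  SRelabel 1 6 [1;2;3;4;5;0];
  SRelabel 2 5 [0;0;1;2;3;4];
  SContr 3 0 0 0;
  SRelabel 4 4 [0;0;1;2;3];
  SMulR 5;
  SRelabel 6 4 [0;1;2;3;3];
  SRelabel 5 4 [3;0;1;3];
  SMulL 8;
  SRelabel 9 4 [0;1;2;3;2];
  STrans 7 10;
  SContr 11 3 3 2;
  SRelabel 12 3 [0;1;2;0]], [SMulR 0;
  SMulL 1;
  SRelabel 2 5 [1;2;3;4;0];
  SMulL 0;
  SRelabel 4 4 [1;2;3;0];
  SMulL 5;
  SRelabel 6 5 [1;2;3;4;0];
  SRelabel 7 5 [0;3;2;1;4];
  STrans 3 8]);
([0;3;4;2;1], 1, [SMulR 0;
  SMulR 1;
  SMulL 2;
  SRelabel 3 5 [1;2;3;4;0];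
  SMulL 1;
  SRelabel 5 4 [1;2;3;0];
  SMulL 6;
  SRelabel 7 5 [1;2;3;4;0];
  SRelabel 4 5 [0;1;3;2;4];
  STrans 8 9;
  SMulL 0;
  SRelabel 11 3 [1;2;0];
  SMulL 12;
  SRelabel 13 4 [1;2;3;0];
  SMulL 14;
  SRelabel 15 5 [1;2;3;4;0];
  SRelabel 8 5 [0;1;2;4;3];
  STrans 16 17;
  SRelabel 18 5 [0;3;1;2;4];
  STrans 10 19;
  SRelabel 20 5 [0;2;1;3;4];
  STrans 4 21], [SRelabel 0 4 [0;1;2;3;3];
  SContr 1 3 3 1;
  SRelabel 2 3 [0;1;2;0];
  SMulL 3;
  SRelabel 4 4 [1;2;3;0];
  SRelabel 5 3 [0;0;1;2];
  SContr 6 0 0 0;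
  SRelabel 7 2 [0;0;1]], []);
([0;4;1;2;3], 1, [SMulL 0;
  SRelabel 1 3 [1;2;0];
  SMulL 2;
  SRelabel 3 4 [1;2;3;0];
  SMulL 4;
  SRelabel 5 5 [1;2;3;4;0];
  SMulR 0;
  SMulL 7;
  SRelabel 8 4 [1;2;3;0];
  SMulL 9;
  SRelabel 10 5 [1;2;3;4;0];
  SMulR 7;
  SMulL 12;
  SRelabel 13 5 [1;2;3;4;0];
  SRelabel 14 5 [0;1;3;2;4];
  STrans 11 15;
  SRelabel 16 5 [0;1;2;4;3];
  STrans 6 17], [SRelabel 0 4 [0;1;1;2;3];
  SContr 1 1 1 2;
  SRelabel 2 3 [0;0;1;2];
  SMulL 3;
  SRelabel 4 4 [1;2;3;0];
  SRelabel 5 3 [0;0;1;2];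
  SContr 6 0 0 0;
  SRelabel 7 2 [0;0;1]], []);
([0;4;1;3;2], 1, [SMulR 0;
  SMulL 1;
  SRelabel 2 4 [1;2;3;0];
  SMulL 3;
  SRelabel 4 5 [1;2;3;4;0];
  SMulL 0;
  SRelabel 6 3 [1;2;0];
  SMulL 7;
  SRelabel 8 4 [1;2;3;0];
  SMulL 9;
  SRelabel 10 5 [1;2;3;4;0];
  SRelabel 11 5 [0;1;3;2;4];
  STrans 5 12;
  SMulR 1;
  SMulL 14;
  SRelabel 15 5 [1;2;3;4;0];
  SRelabel 16 5 [0;1;3;2;4];
  STrans 5 17;
  SRelabel 18 5 [0;1;3;4;2];
  STrans 13 19], [SRelabel 0 4 [0;1;2;2;3];
  SContr 1 2 2 3;
  SRelabel 2 3 [0;1;0;2];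
  SMulL 3;
  SRelabel 4 4 [1;2;3;0];
  SRelabel 5 3 [0;0;1;2];
  SContr 6 0 0 0;
  SRelabel 7 2 [0;0;1]], []);
([0;4;2;1;3], 1, [SMulR 0;
  SMulR 1;
  SMulL 2;
  SRelabel 3 5 [1;2;3;4;0];
  SMulL 0;
  SRelabel 5 3 [1;2;0];
  SMulL 6;
  SRelabel 7 4 [1;2;3;0];
  SMulL 8;
  SRelabel 9 5 [1;2;3;4;0];
  SRelabel 10 5 [0;2;1;3;4];
  STrans 4 11;
  SMulL 1;
  SRelabel 13 4 [1;2;3;0];
  SMulL 14;
  SRelabel 15 5 [1;2;3;4;0];
  SRelabel 4 5 [0;1;3;2;4];
  STrans 16 17;
  SRelabel 18 5 [0;2;1;4;3];
  STrans 12 19], [SRelabel 0 4 [0;1;1;2;3];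
  SContr 1 1 1 2;
  SRelabel 2 3 [0;0;1;2];
  SMulL 3;
  SRelabel 4 4 [1;2;3;0];
  SRelabel 5 3 [0;0;1;2];
  SContr 6 0 0 0;
  SRelabel 7 2 [0;0;1]], []);
([0;4;2;3;1], 1, [SMulR 0;
  SMulR 1;
  SMulL 2;
  SRelabel 3 5 [1;2;3;4;0];
  SMulL 1;
  SRelabel 5 4 [1;2;3;0];
  SMulL 6;
  SRelabel 7 5 [1;2;3;4;0];
  SMulL 0;
  SRelabel 9 3 [1;2;0];
  SMulL 10;
  SRelabel 11 4 [1;2;3;0];
  SMulL 12;
  SRelabel 13 5 [1;2;3;4;0];
  SRelabel 14 5 [0;1;3;2;4];
  STrans 8 15;
  SRelabel 4 5 [0;1;3;2;4];
  STrans 8 17;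
  SRelabel 18 5 [0;1;3;4;2];
  STrans 16 19;
  SRelabel 20 5 [0;2;1;3;4];
  STrans 4 21], [SRelabel 0 4 [0;1;2;2;3];
  SContr 1 2 2 2;
  SRelabel 2 3 [0;1;0;2];
  SMulL 3;
  SRelabel 4 4 [1;2;3;0];
  SRelabel 5 3 [0;0;1;2];
  SContr 6 0 0 0;
  SRelabel 7 2 [0;0;1]], []);
([0;4;3;1;2], 1, [SMulR 0;
  SMulL 1;
  SRelabel 2 4 [1;2;3;0];
  SMulL 3;
  SRelabel 4 5 [1;2;3;4;0];
  SMulR 1;
  SMulL 6;
  SRelabel 7 5 [1;2;3;4;0];
  SMulL 0;
  SRelabel 9 3 [1;2;0];
  SMulL 10;
  SRelabel 11 4 [1;2;3;0];
  SMulL 12;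
  SRelabel 13 5 [1;2;3;4;0];
  SRelabel 14 5 [0;2;1;3;4];
  STrans 8 15;
  SRelabel 8 5 [0;1;3;2;4];
  STrans 5 17;
  SRelabel 18 5 [0;2;1;4;3];
  STrans 16 19;
  SRelabel 20 5 [0;1;3;2;4];
  STrans 5 21], [SRelabel 0 4 [0;1;1;2;3];
  SContr 1 1 1 3;
  SRelabel 2 3 [0;0;1;2];
  SMulL 3;
  SRelabel 4 4 [1;2;3;0];
  SRelabel 5 3 [0;0;1;2];
  SContr 6 0 0 0;
  SRelabel 7 2 [0;0;1]], []);
([0;4;3;2;1], 1, [SMulR 0;
  SMulR 1;
  SMulL 2;
  SRelabel 3 5 [1;2;3;4;0];
  SMulL 1;
  SRelabel 5 4 [1;2;3;0];
  SMulL 6;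
  SRelabel 7 5 [1;2;3;4;0];
  SRelabel 8 5 [0;2;1;3;4];
  STrans 4 9;
  SMulL 0;
  SRelabel 11 3 [1;2;0];
  SMulL 12;
  SRelabel 13 4 [1;2;3;0];
  SMulL 14;
  SRelabel 15 5 [1;2;3;4;0];
  SRelabel 16 5 [0;2;1;3;4];
  STrans 4 17;
  SRelabel 4 5 [0;1;3;2;4];
  STrans 8 19;
  SRelabel 20 5 [0;2;1;4;3];
  STrans 18 21;
  SRelabel 22 5 [0;2;3;1;4];
  STrans 10 23], [SRelabel 0 4 [0;1;2;3;3];
  SContr 1 3 3 1;
  SRelabel 2 3 [0;1;2;0];
  SMulL 3;
  SRelabel 4 4 [1;2;3;0];
  SRelabel 5 3 [0;0;1;2];
  SContr 6 0 0 0;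
  SRelabel 7 2 [0;0;1]], []);
([1;0;2;3;4], 1, [SMulR 0;
  SMulR 1;
  SMulR 2], [SRelabel 0 4 [0;1;2;2;3];
  SContr 1 2 2 2;
  SRelabel 2 3 [0;1;0;2];
  SMulR 3;
  SRelabel 4 3 [0;1;2;2];
  SContr 5 2 2 2;
  SRelabel 6 2 [0;1;0]], []);
([1;0;2;4;3], 1, [SMulR 0;
  SMulR 1;
  SMulR 2;
  SMulL 0;
  SRelabel 4 3 [1;2;0];
  SMulL 5;
  SRelabel 6 4 [1;2;3;0];
  SMulL 7;
  SRelabel 8 5 [1;2;3;4;0];
  SRelabel 9 5 [1;0;2;3;4];
  STrans 3 10], [SRelabel 0 4 [0;0;1;2;3];
  SContr 1 0 0 0;
  SRelabel 2 3 [0;0;1;2];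
  SMulL 3;
  SRelabel 4 4 [1;2;3;0];
  SRelabel 5 3 [0;0;1;2];
  SContr 6 0 0 0;
  SRelabel 7 2 [0;0;1]], []);
([1;0;3;2;4], 1, [SMulR 0;
  SMulR 1;
  SMulR 2;
  SMulL 1;
  SRelabel 4 4 [1;2;3;0];
  SMulL 5;
  SRelabel 6 5 [1;2;3;4;0];
  SRelabel 7 5 [1;0;2;3;4];
  STrans 3 8], [SRelabel 0 4 [0;0;1;2;3];
  SContr 1 0 0 0;
  SRelabel 2 3 [0;0;1;2];
  SMulR 3;
  SRelabel 4 3 [0;1;2;2];
  SContr 5 2 2 2;
  SRelabel 6 2 [0;1;0]], []);
([1;0;3;4;2], 1, [SMulR 0;
  SMulR 1;
  SMulR 2;
  SMulL 1;
  SRelabel 4 4 [1;2;3;0];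
  SMulL 5;
  SRelabel 6 5 [1;2;3;4;0];
  SMulL 0;
  SRelabel 8 3 [1;2;0];
  SMulL 9;
  SRelabel 10 4 [1;2;3;0];
  SMulL 11;
  SRelabel 12 5 [1;2;3;4;0];
  SRelabel 13 5 [0;1;3;2;4];
  STrans 7 14;
  SRelabel 15 5 [1;0;2;3;4];
  STrans 3 16], [SRelabel 0 4 [0;1;2;3;3];
  SContr 1 3 3 2;
  SRelabel 2 3 [0;1;2;0];
  SMulR 3;
  SRelabel 4 3 [0;1;2;2];
  SContr 5 2 2 2;
  SRelabel 6 2 [0;1;0]], []);
([1;0;4;2;3], 1, [SMulR 0;
  SMulR 1;
  SMulR 2;
  SMulL 0;
  SRelabel 4 3 [1;2;0];
  SMulL 5;
  SRelabel 6 4 [1;2;3;0];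
  SMulL 7;
  SRelabel 8 5 [1;2;3;4;0];
  SMulL 1;
  SRelabel 10 4 [1;2;3;0];
  SMulL 11;
  SRelabel 12 5 [1;2;3;4;0];
  SRelabel 13 5 [0;1;2;4;3];
  STrans 9 14;
  SRelabel 15 5 [1;0;2;3;4];
  STrans 3 16], [SRelabel 0 4 [0;1;2;2;3];
  SContr 1 2 2 3;
  SRelabel 2 3 [0;1;0;2];
  SMulR 3;
  SRelabel 4 3 [0;1;2;2];
  SContr 5 2 2 2;
  SRelabel 6 2 [0;1;0]], []);
([1;0;4;3;2], 1, [SMulR 0;
  SMulR 1;
  SMulR 2;
  SMulL 1;
  SRelabel 4 4 [1;2;3;0];
  SMulL 5;
  SRelabel 6 5 [1;2;3;4;0];
  SRelabel 7 5 [1;0;2;3;4];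
  STrans 3 8;
  SMulL 0;
  SRelabel 10 3 [1;2;0];
  SMulL 11;
  SRelabel 12 4 [1;2;3;0];
  SMulL 13;
  SRelabel 14 5 [1;2;3;4;0];
  SRelabel 7 5 [0;1;2;4;3];
  STrans 15 16;
  SRelabel 17 5 [1;0;3;2;4];
  STrans 9 18], [SRelabel 0 4 [0;1;2;3;3];
  SContr 1 3 3 2;
  SRelabel 2 3 [0;1;2;0];
  SMulR 3;
  SRelabel 4 3 [0;1;2;2];
  SContr 5 2 2 2;
  SRelabel 6 2 [0;1;0]], []);
([1;2;0;3;4], 1, [SMulR 0;
  SMulR 1;
  SMulR 2;
  SMulL 2;
  SRelabel 4 5 [1;2;3;4;0];
  SRelabel 5 5 [1;0;2;3;4];
  STrans 3 6], [SRelabel 0 4 [0;1;2;3;3];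
  SContr 1 3 3 3;
  SRelabel 2 3 [0;1;2;0];
  SMulR 3;
  SRelabel 4 3 [0;1;2;2];
  SRelabel 3 3 [2;0;2];
  SMulL 6;
  SRelabel 7 3 [0;1;2;1];
  STrans 5 8;
  SContr 9 2 2 2;
  SRelabel 10 2 [0;1;0]], []);
([1;2;0;4;3], 1, [SMulR 0;
  SMulR 1;
  SMulR 2;
  SMulL 2;
  SRelabel 4 5 [1;2;3;4;0];
  SMulL 0;
  SRelabel 6 3 [1;2;0];
  SMulL 7;
  SRelabel 8 4 [1;2;3;0];
  SMulL 9;
  SRelabel 10 5 [1;2;3;4;0];
  SRelabel 11 5 [0;2;1;3;4];
  STrans 5 12;
  SRelabel 13 5 [1;0;2;3;4];
  STrans 3 14], [SRelabel 0 4 [0;1;1;2;3];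
  SContr 1 1 1 0;
  SRelabel 2 3 [0;0;1;2];
  SMulL 3;
  SRelabel 4 4 [1;2;3;0];
  SRelabel 5 3 [0;0;1;2];
  SContr 6 0 0 0;
  SRelabel 7 2 [0;0;1]], []);
([1;2;3;0;4], 1, [SMulR 0;
  SMulR 1;
  SMulR 2;
  SMulL 2;
  SRelabel 4 5 [1;2;3;4;0];
  SMulL 1;
  SRelabel 6 4 [1;2;3;0];
  SMulL 7;
  SRelabel 8 5 [1;2;3;4;0];
  SRelabel 9 5 [0;2;1;3;4];
  STrans 5 10;
  SRelabel 11 5 [1;0;2;3;4];
  STrans 3 12], [SRelabel 0 4 [0;1;1;2;3];
  SContr 1 1 1 0;
  SRelabel 2 3 [0;0;1;2];
  SMulR 3;
  SRelabel 4 3 [0;1;2;2];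
  SContr 5 2 2 2;
  SRelabel 6 2 [0;1;0]], []);
([1;2;3;4;0], 1, [SMulR 0;
  SMulR 1;
  SMulR 2;
  SMulL 2;
  SRelabel 4 5 [1;2;3;4;0];
  SRelabel 5 5 [1;0;2;3;4];
  STrans 3 6;
  SMulL 1;
  SRelabel 8 4 [1;2;3;0];
  SMulL 9;
  SRelabel 10 5 [1;2;3;4;0];
  SMulL 0;
  SRelabel 12 3 [1;2;0];
  SMulL 13;
  SRelabel 14 4 [1;2;3;0];
  SMulL 15;
  SRelabel 16 5 [1;2;3;4;0];
  SRelabel 17 5 [0;1;3;2;4];
  STrans 11 18;
  SRelabel 19 5 [1;2;0;3;4];
  STrans 7 20], [SRelabel 0 4 [0;1;1;2;3];
  SContr 1 1 1 0;
  SRelabel 2 3 [0;0;1;2];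
  SMulR 3;
  SRelabel 4 3 [0;1;2;2];
  SRelabel 3 3 [2;0;2];
  SMulL 6;
  SRelabel 7 3 [0;1;2;1];
  STrans 5 8;
  SContr 9 2 2 2;
  SRelabel 10 2 [0;1;0]], []);
([1;2;4;0;3], 1, [SMulR 0;
  SMulR 1;
  SMulR 2;
  SMulL 2;
  SRelabel 4 5 [1;2;3;4;0];
  SRelabel 5 5 [1;0;2;3;4];
  STrans 3 6;
  SMulL 0;
  SRelabel 8 3 [1;2;0];
  SMulL 9;
  SRelabel 10 4 [1;2;3;0];
  SMulL 11;
  SRelabel 12 5 [1;2;3;4;0];
  SMulL 1;
  SRelabel 14 4 [1;2;3;0];
  SMulL 15;
  SRelabel 16 5 [1;2;3;4;0];
  SRelabel 17 5 [0;1;2;4;3];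
  STrans 13 18;
  SRelabel 19 5 [1;2;0;3;4];
  STrans 7 20], [SRelabel 0 5 [1;2;4;0;3];
  STrans 0 1;
  SRelabel 2 4 [0;0;1;2;3];
  SContr 3 0 0 3;
  SRelabel 4 3 [0;0;1;2];
  SMulL 5;
  SRelabel 6 4 [1;2;3;0];
  SRelabel 7 3 [0;0;1;2];
  SContr 8 0 0 0;
  SRelabel 9 2 [0;0;1]], []);
([1;2;4;3;0], 1, [SMulR 0;
  SMulR 1;
  SMulR 2;
  SMulL 2;
  SRelabel 4 5 [1;2;3;4;0];
  SMulL 1;
  SRelabel 6 4 [1;2;3;0];
  SMulL 7;
  SRelabel 8 5 [1;2;3;4;0];
  SRelabel 9 5 [0;2;1;3;4];
  STrans 5 10;
  SMulL 0;
  SRelabel 12 3 [1;2;0];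
  SMulL 13;
  SRelabel 14 4 [1;2;3;0];
  SMulL 15;
  SRelabel 16 5 [1;2;3;4;0];
  SRelabel 9 5 [0;1;2;4;3];
  STrans 17 18;
  SRelabel 19 5 [0;2;3;1;4];
  STrans 11 20;
  SRelabel 21 5 [1;0;2;3;4];
  STrans 3 22], [SRelabel 0 4 [0;1;2;3;3];
  SContr 1 3 3 2;
  SRelabel 2 3 [0;1;2;0];
  SMulR 3;
  SRelabel 4 3 [0;1;2;2];
  SRelabel 3 3 [2;0;2];
  SMulL 6;
  SRelabel 7 3 [0;1;2;1];
  STrans 5 8;
  SContr 9 2 2 2;
  SRelabel 10 2 [0;1;0]], []);
([1;3;0;2;4], 1, [SMulR 0;
  SMulR 1;
  SMulR 2;
  SMulL 1;
  SRelabel 4 4 [1;2;3;0];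
  SMulL 5;
  SRelabel 6 5 [1;2;3;4;0];
  SMulL 2;
  SRelabel 8 5 [1;2;3;4;0];
  SRelabel 9 5 [0;1;3;2;4];
  STrans 7 10;
  SRelabel 11 5 [1;0;2;3;4];
  STrans 3 12], [SMulR 0;
  SRelabel 1 5 [0;1;2;3;4;4];
  SContr 2 4 4 4;
  SRelabel 3 4 [0;1;2;3;0];
  SRelabel 4 4 [1;3;0;2];
  STrans 4 5;
  SRelabel 6 3 [0;1;2;2];
  SContr 7 2 2 0;
  SRelabel 8 2 [0;1;0]], []);
([1;3;0;4;2], 1, [SMulR 0;
  SMulR 1;
  SMulR 2;
  SMulL 1;
  SRelabel 4 4 [1;2;3;0];
  SMulL 5;
  SRelabel 6 5 [1;2;3;4;0];
  SRelabel 7 5 [1;0;2;3;4];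
  STrans 3 8;
  SMulL 2;
  SRelabel 10 5 [1;2;3;4;0];
  SMulL 0;
  SRelabel 12 3 [1;2;0];
  SMulL 13;
  SRelabel 14 4 [1;2;3;0];
  SMulL 15;
  SRelabel 16 5 [1;2;3;4;0];
  SRelabel 17 5 [0;2;1;3;4];
  STrans 11 18;
  SRelabel 19 5 [1;0;3;2;4];
  STrans 9 20], [SRelabel 0 5 [1;3;0;4;2];
  STrans 0 1;
  SRelabel 2 4 [0;1;2;3;3];
  SContr 3 3 3 0;
  SRelabel 4 3 [0;1;2;0];
  SMulR 5;
  SRelabel 6 3 [0;1;2;2];
  SRelabel 5 3 [2;0;2];
  SMulL 8;
  SRelabel 9 3 [0;1;2;1];
  STrans 7 10;
  SContr 11 2 2 2;
  SRelabel 12 2 [0;1;0]], []);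
([1;3;2;0;4], 1, [SMulR 0;
  SMulR 1;
  SMulR 2;
  SMulL 2;
  SRelabel 4 5 [1;2;3;4;0];
  SRelabel 5 5 [1;0;2;3;4];
  STrans 3 6;
  SMulL 1;
  SRelabel 8 4 [1;2;3;0];
  SMulL 9;
  SRelabel 10 5 [1;2;3;4;0];
  SRelabel 5 5 [0;1;3;2;4];
  STrans 11 12;
  SRelabel 13 5 [1;2;0;3;4];
  STrans 7 14], [SRelabel 0 4 [0;1;2;2;3];
  SContr 1 2 2 1;
  SRelabel 2 3 [0;1;0;2];
  SMulR 3;
  SRelabel 4 3 [0;1;2;2];
  SContr 5 2 2 2;
  SRelabel 6 2 [0;1;0]], []);
([1;3;2;4;0], 1, [SMulR 0;
  SMulR 1;
  SMulR 2;
  SMulL 2;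
  SRelabel 4 5 [1;2;3;4;0];
  SMulL 1;
  SRelabel 6 4 [1;2;3;0];
  SMulL 7;
  SRelabel 8 5 [1;2;3;4;0];
  SRelabel 9 5 [0;2;1;3;4];
  STrans 5 10;
  SMulL 0;
  SRelabel 12 3 [1;2;0];
  SMulL 13;
  SRelabel 14 4 [1;2;3;0];
  SMulL 15;
  SRelabel 16 5 [1;2;3;4;0];
  SRelabel 17 5 [0;2;1;3;4];
  STrans 5 18;
  SRelabel 19 5 [0;2;3;1;4];
  STrans 11 20;
  SRelabel 21 5 [1;0;2;3;4];
  STrans 3 22], [SRelabel 0 4 [0;1;2;2;3];
  SContr 1 2 2 1;
  SRelabel 2 3 [0;1;0;2];
  SMulR 3;
  SRelabel 4 3 [0;1;2;2];
  SRelabel 3 3 [2;0;2];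
  SMulL 6;
  SRelabel 7 3 [0;1;2;1];
  STrans 5 8;
  SContr 9 2 2 2;
  SRelabel 10 2 [0;1;0]], []);
([1;3;4;0;2], 1, [SMulR 0;
  SMulR 1;
  SMulR 2;
  SMulL 1;
  SRelabel 4 4 [1;2;3;0];
  SMulL 5;
  SRelabel 6 5 [1;2;3;4;0];
  SMulL 2;
  SRelabel 8 5 [1;2;3;4;0];
  SRelabel 9 5 [0;1;3;2;4];
  STrans 7 10;
  SMulL 0;
  SRelabel 12 3 [1;2;0];
  SMulL 13;
  SRelabel 14 4 [1;2;3;0];
  SMulL 15;
  SRelabel 16 5 [1;2;3;4;0];
  SRelabel 7 5 [0;1;2;4;3];
  STrans 17 18;
  SRelabel 19 5 [0;3;1;2;4];
  STrans 11 20;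
  SRelabel 21 5 [1;0;2;3;4];
  STrans 3 22], [SRelabel 0 4 [0;1;2;3;3];
  SContr 1 3 3 1;
  SRelabel 2 3 [0;1;2;0];
  SMulR 3;
  SRelabel 4 3 [0;1;2;2];
  SContr 5 2 2 2;
  SRelabel 6 2 [0;1;0]], []);
([1;3;4;2;0], 1, [SMulR 0;
  SMulR 1;
  SMulR 2;
  SMulL 2;
  SRelabel 4 5 [1;2;3;4;0];
  SRelabel 5 5 [1;0;2;3;4];
  STrans 3 6;
  SMulL 1;
  SRelabel 8 4 [1;2;3;0];
  SMulL 9;
  SRelabel 10 5 [1;2;3;4;0];
  SRelabel 5 5 [0;1;3;2;4];
  STrans 11 12;
  SMulL 0;
  SRelabel 14 3 [1;2;0];
  SMulL 15;
  SRelabel 16 4 [1;2;3;0];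
  SMulL 17;
  SRelabel 18 5 [1;2;3;4;0];
  SRelabel 11 5 [0;1;2;4;3];
  STrans 19 20;
  SRelabel 21 5 [0;3;1;2;4];
  STrans 13 22;
  SRelabel 23 5 [1;2;0;3;4];
  STrans 7 24], [SRelabel 0 4 [0;1;2;3;3];
  SContr 1 3 3 1;
  SRelabel 2 3 [0;1;2;0];
  SMulR 3;
  SRelabel 4 3 [0;1;2;2];
  SRelabel 3 3 [2;0;2];
  SMulL 6;
  SRelabel 7 3 [0;1;2;1];
  STrans 5 8;
  SContr 9 2 2 2;
  SRelabel 10 2 [0;1;0]], []);
([1;4;0;2;3], 1, [SMulR 0;
  SMulR 1;
  SMulR 2;
  SMulL 0;
  SRelabel 4 3 [1;2;0];
  SMulL 5;
  SRelabel 6 4 [1;2;3;0];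
  SMulL 7;
  SRelabel 8 5 [1;2;3;4;0];
  SRelabel 9 5 [1;0;2;3;4];
  STrans 3 10;
  SMulL 1;
  SRelabel 12 4 [1;2;3;0];
  SMulL 13;
  SRelabel 14 5 [1;2;3;4;0];
  SMulL 2;
  SRelabel 16 5 [1;2;3;4;0];
  SRelabel 17 5 [0;1;3;2;4];
  STrans 15 18;
  SRelabel 19 5 [1;0;2;4;3];
  STrans 11 20], [SRelabel 0 4 [0;1;2;2;3];
  SContr 1 2 2 3;
  SRelabel 2 3 [0;1;0;2];
  SMulR 3;
  SRelabel 4 3 [0;1;2;2];
  SRelabel 3 3 [2;0;2];
  SMulL 6;
  SRelabel 7 3 [0;1;2;1];
  STrans 5 8;
  SContr 9 2 2 2;
  SRelabel 10 2 [0;1;0]], []);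
([1;4;0;3;2], 1, [SMulR 0;
  SMulR 1;
  SMulR 2;
  SMulL 1;
  SRelabel 4 4 [1;2;3;0];
  SMulL 5;
  SRelabel 6 5 [1;2;3;4;0];
  SMulL 0;
  SRelabel 8 3 [1;2;0];
  SMulL 9;
  SRelabel 10 4 [1;2;3;0];
  SMulL 11;
  SRelabel 12 5 [1;2;3;4;0];
  SRelabel 13 5 [0;1;3;2;4];
  STrans 7 14;
  SMulL 2;
  SRelabel 16 5 [1;2;3;4;0];
  SRelabel 17 5 [0;1;3;2;4];
  STrans 7 18;
  SRelabel 19 5 [0;1;3;4;2];
  STrans 15 20;
  SRelabel 21 5 [1;0;2;3;4];
  STrans 3 22], [SRelabel 0 4 [0;1;2;2;3];
  SContr 1 2 2 3;
  SRelabel 2 3 [0;1;0;2];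
  SMulR 3;
  SRelabel 4 3 [0;1;2;2];
  SRelabel 3 3 [2;0;2];
  SMulL 6;
  SRelabel 7 3 [0;1;2;1];
  STrans 5 8;
  SContr 9 2 2 2;
  SRelabel 10 2 [0;1;0]], []);
([1;4;2;0;3], 1, [SMulR 0;
  SMulR 1;
  SMulR 2;
  SMulL 2;
  SRelabel 4 5 [1;2;3;4;0];
  SMulL 0;
  SRelabel 6 3 [1;2;0];
  SMulL 7;
  SRelabel 8 4 [1;2;3;0];
  SMulL 9;
  SRelabel 10 5 [1;2;3;4;0];
  SRelabel 11 5 [0;2;1;3;4];
  STrans 5 12;
  SMulL 1;
  SRelabel 14 4 [1;2;3;0];
  SMulL 15;
  SRelabel 16 5 [1;2;3;4;0];
  SRelabel 5 5 [0;1;3;2;4];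
  STrans 17 18;
  SRelabel 19 5 [0;2;1;4;3];
  STrans 13 20;
  SRelabel 21 5 [1;0;2;3;4];
  STrans 3 22], [SRelabel 0 5 [1;4;2;0;3];
  STrans 0 1;
  SRelabel 2 4 [0;1;2;3;3];
  SContr 3 3 3 0;
  SRelabel 4 3 [0;1;2;0];
  SMulR 5;
  SMulR 6;
  SRelabel 7 5 [1;4;2;0;3];
  STrans 0 8;
  SRelabel 9 4 [0;0;1;2;3];
  SContr 10 0 0 2;
  SRelabel 11 3 [0;0;1;2];
  SMulL 12;
  SRelabel 13 4 [1;2;3;0];
  SRelabel 14 3 [0;0;1;2];
  SContr 15 0 0 0;
  SRelabel 16 2 [0;0;1]], []);
([1;4;2;3;0], 1, [SMulR 0;
  SMulR 1;
  SMulR 2;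
  SMulL 2;
  SRelabel 4 5 [1;2;3;4;0];
  SRelabel 5 5 [1;0;2;3;4];
  STrans 3 6;
  SMulL 1;
  SRelabel 8 4 [1;2;3;0];
  SMulL 9;
  SRelabel 10 5 [1;2;3;4;0];
  SMulL 0;
  SRelabel 12 3 [1;2;0];
  SMulL 13;
  SRelabel 14 4 [1;2;3;0];
  SMulL 15;
  SRelabel 16 5 [1;2;3;4;0];
  SRelabel 17 5 [0;1;3;2;4];
  STrans 11 18;
  SRelabel 5 5 [0;1;3;2;4];
  STrans 11 20;
  SRelabel 21 5 [0;1;3;4;2];
  STrans 19 22;
  SRelabel 23 5 [1;2;0;3;4];
  STrans 7 24], [SRelabel 0 4 [0;1;2;2;3];
  SContr 1 2 2 2;
  SRelabel 2 3 [0;1;0;2];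
  SMulR 3;
  SRelabel 4 3 [0;1;2;2];
  SRelabel 3 3 [2;0;2];
  SMulL 6;
  SRelabel 7 3 [0;1;2;1];
  STrans 5 8;
  SContr 9 2 2 2;
  SRelabel 10 2 [0;1;0]], []);
([1;4;3;0;2], 1, [SMulR 0;
  SMulR 1;
  SMulR 2;
  SMulL 1;
  SRelabel 4 4 [1;2;3;0];
  SMulL 5;
  SRelabel 6 5 [1;2;3;4;0];
  SRelabel 7 5 [1;0;2;3;4];
  STrans 3 8;
  SMulL 2;
  SRelabel 10 5 [1;2;3;4;0];
  SMulL 0;
  SRelabel 12 3 [1;2;0];
  SMulL 13;
  SRelabel 14 4 [1;2;3;0];
  SMulL 15;
  SRelabel 16 5 [1;2;3;4;0];
  SRelabel 17 5 [0;2;1;3;4];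
  STrans 11 18;
  SRelabel 11 5 [0;1;3;2;4];
  STrans 7 20;
  SRelabel 21 5 [0;2;1;4;3];
  STrans 19 22;
  SRelabel 23 5 [1;0;3;2;4];
  STrans 9 24], [SRelabel 0 4 [0;1;2;3;3];
  SContr 1 3 3 1;
  SRelabel 2 3 [0;1;2;0];
  SMulR 3;
  SRelabel 4 3 [0;1;2;2];
  SContr 5 2 2 2;
  SRelabel 6 2 [0;1;0]], []);
([1;4;3;2;0], 1, [SMulR 0;
  SMulR 1;
  SMulR 2;
  SMulL 2;
  SRelabel 4 5 [1;2;3;4;0];
  SMulL 1;
  SRelabel 6 4 [1;2;3;0];
  SMulL 7;
  SRelabel 8 5 [1;2;3;4;0];
  SRelabel 9 5 [0;2;1;3;4];
  STrans 5 10;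
  SRelabel 11 5 [1;0;2;3;4];
  STrans 3 12;
  SMulL 0;
  SRelabel 14 3 [1;2;0];
  SMulL 15;
  SRelabel 16 4 [1;2;3;0];
  SMulL 17;
  SRelabel 18 5 [1;2;3;4;0];
  SRelabel 19 5 [0;2;1;3;4];
  STrans 5 20;
  SRelabel 5 5 [0;1;3;2;4];
  STrans 9 22;
  SRelabel 23 5 [0;2;1;4;3];
  STrans 21 24;
  SRelabel 25 5 [1;2;3;0;4];
  STrans 13 26], [SRelabel 0 4 [0;1;2;3;3];
  SContr 1 3 3 1;
  SRelabel 2 3 [0;1;2;0];
  SMulR 3;
  SRelabel 4 3 [0;1;2;2];
  SRelabel 3 3 [2;0;2];
  SMulL 6;
  SRelabel 7 3 [0;1;2;1];
  STrans 5 8;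
  SContr 9 2 2 2;
  SRelabel 10 2 [0;1;0]], []);
([2;0;1;3;4], 1, [SMulR 0;
  SMulR 1;
  SMulL 2;
  SRelabel 3 5 [1;2;3;4;0];
  SMulR 2;
  SRelabel 5 5 [0;2;1;3;4];
  STrans 4 6], [SStar 0;
  SRelabel 1 5 [4;3;2;1;0];
  SRelabel 2 4 [0;0;1;2;3];
  SContr 3 0 0 0;
  SRelabel 4 3 [0;0;1;2];
  SMulR 5;
  SRelabel 6 3 [0;1;2;2];
  SRelabel 5 3 [2;0;2];
  SMulL 8;
  SRelabel 9 3 [0;1;2;1];
  STrans 7 10;
  SContr 11 2 2 2;
  SRelabel 12 2 [0;1;0]], []);
([2;0;1;4;3], 1, [SMulR 0;
  SMulR 1;
  SMulL 2;
  SRelabel 3 5 [1;2;3;4;0];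
  SMulR 2;
  SMulL 0;
  SRelabel 6 3 [1;2;0];
  SMulL 7;
  SRelabel 8 4 [1;2;3;0];
  SMulL 9;
  SRelabel 10 5 [1;2;3;4;0];
  SRelabel 11 5 [1;0;2;3;4];
  STrans 5 12;
  SRelabel 13 5 [0;2;1;3;4];
  STrans 4 14], [SRelabel 0 4 [0;0;1;2;3];
  SContr 1 0 0 1;
  SRelabel 2 3 [0;0;1;2];
  SMulL 3;
  SRelabel 4 4 [1;2;3;0];
  SRelabel 5 3 [0;0;1;2];
  SContr 6 0 0 0;
  SRelabel 7 2 [0;0;1]], []);
([2;0;3;1;4], 1, [SMulR 0;
  SMulR 1;
  SMulL 2;
  SRelabel 3 5 [1;2;3;4;0];
  SMulR 2;
  SMulL 1;
  SRelabel 6 4 [1;2;3;0];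
  SMulL 7;
  SRelabel 8 5 [1;2;3;4;0];
  SRelabel 9 5 [1;0;2;3;4];
  STrans 5 10;
  SRelabel 11 5 [0;2;1;3;4];
  STrans 4 12], [SMulR 0;
  SRelabel 1 5 [0;1;2;3;4;4];
  SContr 2 4 4 4;
  SRelabel 3 4 [0;1;2;3;0];
  SRelabel 4 4 [2;0;3;1];
  STrans 4 5;
  SRelabel 6 3 [0;1;2;2];
  SContr 7 2 2 0;
  SRelabel 8 2 [0;1;0]], []);
([2;0;3;4;1], 1, [SMulR 0;
  SMulR 1;
  SMulL 2;
  SRelabel 3 5 [1;2;3;4;0];
  SMulR 2;
  SRelabel 5 5 [0;2;1;3;4];
  STrans 4 6;
  SMulL 1;
  SRelabel 8 4 [1;2;3;0];
  SMulL 9;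
  SRelabel 10 5 [1;2;3;4;0];
  SMulL 0;
  SRelabel 12 3 [1;2;0];
  SMulL 13;
  SRelabel 14 4 [1;2;3;0];
  SMulL 15;
  SRelabel 16 5 [1;2;3;4;0];
  SRelabel 17 5 [0;1;3;2;4];
  STrans 11 18;
  SRelabel 19 5 [2;0;1;3;4];
  STrans 7 20], [SRelabel 0 5 [2;0;3;4;1];
  STrans 0 1;
  SRelabel 2 4 [0;0;1;2;3];
  SContr 3 0 0 3;
  SRelabel 4 3 [0;0;1;2];
  SMulR 5;
  SRelabel 6 3 [0;1;2;2];
  SContr 7 2 2 2;
  SRelabel 8 2 [0;1;0]], []);
([2;0;4;1;3], 1, [SMulR 0;
  SMulR 1;
  SMulL 2;
  SRelabel 3 5 [1;2;3;4;0];
  SMulR 2;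
  SRelabel 5 5 [0;2;1;3;4];
  STrans 4 6;
  SMulL 0;
  SRelabel 8 3 [1;2;0];
  SMulL 9;
  SRelabel 10 4 [1;2;3;0];
  SMulL 11;
  SRelabel 12 5 [1;2;3;4;0];
  SMulL 1;
  SRelabel 14 4 [1;2;3;0];
  SMulL 15;
  SRelabel 16 5 [1;2;3;4;0];
  SRelabel 17 5 [0;1;2;4;3];
  STrans 13 18;
  SRelabel 19 5 [2;0;1;3;4];
  STrans 7 20], [SRelabel 0 5 [2;0;4;1;3];
  STrans 0 1;
  SRelabel 2 5 [2;0;4;1;3];
  STrans 0 3;
  SRelabel 4 4 [0;1;2;3;3];
  SContr 5 3 3 0;
  SRelabel 6 3 [0;1;2;0];
  SMulR 7;
  SRelabel 8 3 [0;1;2;2];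
  SRelabel 7 3 [2;0;2];
  SMulL 10;
  SRelabel 11 3 [0;1;2;1];
  STrans 9 12;
  SContr 13 2 2 2;
  SRelabel 14 2 [0;1;0]], []);
([2;0;4;3;1], 1, [SMulR 0;
  SMulR 1;
  SMulL 2;
  SRelabel 3 5 [1;2;3;4;0];
  SMulR 2;
  SMulL 1;
  SRelabel 6 4 [1;2;3;0];
  SMulL 7;
  SRelabel 8 5 [1;2;3;4;0];
  SRelabel 9 5 [1;0;2;3;4];
  STrans 5 10;
  SMulL 0;
  SRelabel 12 3 [1;2;0];
  SMulL 13;
  SRelabel 14 4 [1;2;3;0];
  SMulL 15;
  SRelabel 16 5 [1;2;3;4;0];
  SRelabel 9 5 [0;1;2;4;3];
  STrans 17 18;
  SRelabel 19 5 [1;0;3;2;4];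
  STrans 11 20;
  SRelabel 21 5 [0;2;1;3;4];
  STrans 4 22], [SStar 0;
  SRelabel 1 5 [4;3;2;1;0];
  SRelabel 2 4 [0;0;1;2;3];
  SContr 3 0 0 1;
  SRelabel 4 3 [0;0;1;2];
  SMulR 5;
  SRelabel 6 3 [0;1;2;2];
  SRelabel 5 3 [2;0;2];
  SMulL 8;
  SRelabel 9 3 [0;1;2;1];
  STrans 7 10;
  SContr 11 2 2 2;
  SRelabel 12 2 [0;1;0]], []);
([2;1;0;3;4], 2, [SMulR 0;
  SMulR 1;
  SMulR 2;
  SMulL 2;
  SRelabel 4 5 [1;2;3;4;0];
  SRelabel 3 5 [0;2;1;3;4];
  STrans 5 6;
  SRelabel 7 5 [1;0;2;3;4];
  STrans 3 8], [SRelabel 0 4 [0;1;2;3;3];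
  SContr 1 3 3 3;
  SRelabel 2 3 [0;1;2;0]], [SMulR 0;
  SMulR 1]);
([2;1;0;4;3], 1, [SMulR 0;
  SMulR 1;
  SMulR 2;
  SMulL 2;
  SRelabel 4 5 [1;2;3;4;0];
  SRelabel 5 5 [1;0;2;3;4];
  STrans 3 6;
  SMulL 0;
  SRelabel 8 3 [1;2;0];
  SMulL 9;
  SRelabel 10 4 [1;2;3;0];
  SMulL 11;
  SRelabel 12 5 [1;2;3;4;0];
  SRelabel 13 5 [1;0;2;3;4];
  STrans 3 14;
  SRelabel 15 5 [1;2;0;3;4];
  STrans 7 16], [SRelabel 0 4 [0;1;1;2;3];
  SContr 1 1 1 0;
  SRelabel 2 3 [0;0;1;2];
  SMulL 3;
  SRelabel 4 4 [1;2;3;0];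
  SRelabel 5 3 [0;0;1;2];
  SContr 6 0 0 0;
  SRelabel 7 2 [0;0;1]], []);
([2;1;3;0;4], 1, [SMulR 0;
  SMulR 1;
  SMulR 2;
  SMulL 2;
  SRelabel 4 5 [1;2;3;4;0];
  SRelabel 5 5 [1;0;2;3;4];
  STrans 3 6;
  SMulL 1;
  SRelabel 8 4 [1;2;3;0];
  SMulL 9;
  SRelabel 10 5 [1;2;3;4;0];
  SRelabel 11 5 [1;0;2;3;4];
  STrans 3 12;
  SRelabel 13 5 [1;2;0;3;4];
  STrans 7 14], [SRelabel 0 4 [0;1;1;2;3];
  SContr 1 1 1 0;
  SRelabel 2 3 [0;0;1;2];
  SMulR 3;
  SRelabel 4 3 [0;1;2;2];
  SContr 5 2 2 2;
  SRelabel 6 2 [0;1;0]], []);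
([2;1;3;4;0], 1, [SMulR 0;
  SMulR 1;
  SMulR 2;
  SMulL 2;
  SRelabel 4 5 [1;2;3;4;0];
  SRelabel 3 5 [0;2;1;3;4];
  STrans 5 6;
  SMulL 1;
  SRelabel 8 4 [1;2;3;0];
  SMulL 9;
  SRelabel 10 5 [1;2;3;4;0];
  SMulL 0;
  SRelabel 12 3 [1;2;0];
  SMulL 13;
  SRelabel 14 4 [1;2;3;0];
  SMulL 15;
  SRelabel 16 5 [1;2;3;4;0];
  SRelabel 17 5 [0;1;3;2;4];
  STrans 11 18;
  SRelabel 19 5 [2;0;1;3;4];
  STrans 7 20;
  SRelabel 21 5 [1;0;2;3;4];
  STrans 3 22], [SRelabel 0 4 [0;1;1;2;3];
  SContr 1 1 1 0;
  SRelabel 2 3 [0;0;1;2];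
  SMulR 3;
  SRelabel 4 3 [0;1;2;2];
  SRelabel 3 3 [2;0;2];
  SMulL 6;
  SRelabel 7 3 [0;1;2;1];
  STrans 5 8;
  SContr 9 2 2 2;
  SRelabel 10 2 [0;1;0]], []);
([2;1;4;0;3], 1, [SMulR 0;
  SMulR 1;
  SMulR 2;
  SMulL 2;
  SRelabel 4 5 [1;2;3;4;0];
  SRelabel 3 5 [0;2;1;3;4];
  STrans 5 6;
  SMulL 0;
  SRelabel 8 3 [1;2;0];
  SMulL 9;
  SRelabel 10 4 [1;2;3;0];
  SMulL 11;
  SRelabel 12 5 [1;2;3;4;0];
  SMulL 1;
  SRelabel 14 4 [1;2;3;0];
  SMulL 15;
  SRelabel 16 5 [1;2;3;4;0];
  SRelabel 17 5 [0;1;2;4;3];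
  STrans 13 18;
  SRelabel 19 5 [2;0;1;3;4];
  STrans 7 20;
  SRelabel 21 5 [1;0;2;3;4];
  STrans 3 22], [SStar 0;
  SRelabel 1 5 [4;3;2;1;0];
  SRelabel 2 4 [0;1;2;2;3];
  SContr 3 2 2 3;
  SRelabel 4 3 [0;1;0;2];
  SMulR 5;
  SRelabel 6 3 [0;1;2;2];
  SRelabel 5 3 [2;0;2];
  SMulL 8;
  SRelabel 9 3 [0;1;2;1];
  STrans 7 10;
  SContr 11 2 2 2;
  SRelabel 12 2 [0;1;0]], []);
([2;1;4;3;0], 2, [SMulR 0;
  SMulR 1;
  SMulR 2;
  SMulL 2;
  SRelabel 4 5 [1;2;3;4;0];
  SRelabel 5 5 [1;0;2;3;4];
  STrans 3 6;
  SMulL 1;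
  SRelabel 8 4 [1;2;3;0];
  SMulL 9;
  SRelabel 10 5 [1;2;3;4;0];
  SRelabel 11 5 [1;0;2;3;4];
  STrans 3 12;
  SMulL 0;
  SRelabel 14 3 [1;2;0];
  SMulL 15;
  SRelabel 16 4 [1;2;3;0];
  SMulL 17;
  SRelabel 18 5 [1;2;3;4;0];
  SRelabel 11 5 [0;1;2;4;3];
  STrans 19 20;
  SRelabel 21 5 [1;0;3;2;4];
  STrans 13 22;
  SRelabel 23 5 [1;2;0;3;4];
  STrans 7 24], [SRelabel 0 4 [0;1;1;2;3];
  SContr 1 1 1 0;
  SRelabel 2 3 [0;0;1;2]], [SMulR 0;
  SMulR 1;
  SMulL 0;
  SRelabel 3 4 [1;2;3;0];
  SMulL 4;
  SRelabel 5 5 [1;2;3;4;0];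
  SRelabel 6 5 [2;1;0;3;4];
  STrans 2 7]);
([2;3;0;1;4], 2, [SMulR 0;
  SMulR 1;
  SMulL 2;
  SRelabel 3 5 [1;2;3;4;0];
  SMulR 2;
  SRelabel 5 5 [0;2;1;3;4];
  STrans 4 6;
  SMulL 1;
  SRelabel 8 4 [1;2;3;0];
  SMulL 9;
  SRelabel 10 5 [1;2;3;4;0];
  SRelabel 4 5 [0;1;3;2;4];
  STrans 11 12;
  SRelabel 13 5 [2;0;1;3;4];
  STrans 7 14], [SMulR 0;
  SRelabel 1 5 [0;1;2;3;4;4];
  SContr 2 4 4 4;
  SRelabel 3 4 [0;1;2;3;0];
  SMulR 4;
  SRelabel 5 4 [0;1;2;3;3];
  SRelabel 4 4 [3;0;1;3];
  SMulL 7;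
  SRelabel 8 4 [0;1;2;3;2];
  STrans 6 9;
  SContr 10 3 3 2;
  SRelabel 11 3 [0;1;2;0]], [SMulR 0;
  SMulR 1;
  SMulL 1;
  SRelabel 3 5 [1;2;3;4;0];
  SRelabel 4 5 [2;1;0;3;4];
  STrans 2 5]);
([2;3;0;4;1], 1, [SMulR 0;
  SMulR 1;
  SMulL 2;
  SRelabel 3 5 [1;2;3;4;0];
  SMulR 2;
  SMulL 1;
  SRelabel 6 4 [1;2;3;0];
  SMulL 7;
  SRelabel 8 5 [1;2;3;4;0];
  SRelabel 9 5 [1;0;2;3;4];
  STrans 5 10;
  SMulL 0;
  SRelabel 12 3 [1;2;0];
  SMulL 13;
  SRelabel 14 4 [1;2;3;0];
  SMulL 15;
  SRelabel 16 5 [1;2;3;4;0];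
  SRelabel 17 5 [0;2;1;3;4];
  STrans 4 18;
  SRelabel 19 5 [1;0;3;2;4];
  STrans 11 20;
  SRelabel 21 5 [0;2;1;3;4];
  STrans 4 22], [SRelabel 0 4 [0;1;2;2;3];
  SContr 1 2 2 0;
  SRelabel 2 3 [0;1;0;2];
  SMulL 3;
  SRelabel 4 4 [1;2;3;0];
  SRelabel 5 3 [0;0;1;2];
  SContr 6 0 0 0;
  SRelabel 7 2 [0;0;1]], []);
([2;3;1;0;4], 1, [SMulR 0;
  SMulR 1;
  SMulR 2;
  SMulL 2;
  SRelabel 4 5 [1;2;3;4;0];
  SRelabel 3 5 [0;2;1;3;4];
  STrans 5 6;
  SMulL 1;
  SRelabel 8 4 [1;2;3;0];
  SMulL 9;
  SRelabel 10 5 [1;2;3;4;0];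
  SRelabel 5 5 [0;1;3;2;4];
  STrans 11 12;
  SRelabel 13 5 [2;0;1;3;4];
  STrans 7 14;
  SRelabel 15 5 [1;0;2;3;4];
  STrans 3 16], [SRelabel 0 4 [0;1;2;2;3];
  SContr 1 2 2 0;
  SRelabel 2 3 [0;1;0;2];
  SMulR 3;
  SRelabel 4 3 [0;1;2;2];
  SContr 5 2 2 2;
  SRelabel 6 2 [0;1;0]], []);
([2;3;1;4;0], 1, [SMulR 0;
  SMulR 1;
  SMulR 2;
  SMulL 2;
  SRelabel 4 5 [1;2;3;4;0];
  SRelabel 5 5 [1;0;2;3;4];
  STrans 3 6;
  SMulL 1;
  SRelabel 8 4 [1;2;3;0];
  SMulL 9;
  SRelabel 10 5 [1;2;3;4;0];
  SRelabel 11 5 [1;0;2;3;4];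
  STrans 3 12;
  SMulL 0;
  SRelabel 14 3 [1;2;0];
  SMulL 15;
  SRelabel 16 4 [1;2;3;0];
  SMulL 17;
  SRelabel 18 5 [1;2;3;4;0];
  SRelabel 19 5 [0;2;1;3;4];
  STrans 5 20;
  SRelabel 21 5 [1;0;3;2;4];
  STrans 13 22;
  SRelabel 23 5 [1;2;0;3;4];
  STrans 7 24], [SRelabel 0 4 [0;1;2;2;3];
  SContr 1 2 2 0;
  SRelabel 2 3 [0;1;0;2];
  SMulR 3;
  SRelabel 4 3 [0;1;2;2];
  SRelabel 3 3 [2;0;2];
  SMulL 6;
  SRelabel 7 3 [0;1;2;1];
  STrans 5 8;
  SContr 9 2 2 2;
  SRelabel 10 2 [0;1;0]], []);
([2;3;4;0;1], 1, [SMulR 0;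
  SMulR 1;
  SMulL 2;
  SRelabel 3 5 [1;2;3;4;0];
  SMulR 2;
  SRelabel 5 5 [0;2;1;3;4];
  STrans 4 6;
  SMulL 1;
  SRelabel 8 4 [1;2;3;0];
  SMulL 9;
  SRelabel 10 5 [1;2;3;4;0];
  SRelabel 4 5 [0;1;3;2;4];
  STrans 11 12;
  SMulL 0;
  SRelabel 14 3 [1;2;0];
  SMulL 15;
  SRelabel 16 4 [1;2;3;0];
  SMulL 17;
  SRelabel 18 5 [1;2;3;4;0];
  SRelabel 11 5 [0;1;2;4;3];
  STrans 19 20;
  SRelabel 21 5 [0;3;1;2;4];
  STrans 13 22;
  SRelabel 23 5 [2;0;1;3;4];
  STrans 7 24], [SStar 0;
  SRelabel 1 5 [4;3;2;1;0];
  SRelabel 2 4 [0;0;1;2;3];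
  SContr 3 0 0 2;
  SRelabel 4 3 [0;0;1;2];
  SMulR 5;
  SRelabel 6 3 [0;1;2;2];
  SRelabel 5 3 [2;0;2];
  SMulL 8;
  SRelabel 9 3 [0;1;2;1];
  STrans 7 10;
  SContr 11 2 2 2;
  SRelabel 12 2 [0;1;0]], []);
([2;3;4;1;0], 2, [SMulR 0;
  SMulR 1;
  SMulR 2;
  SMulL 2;
  SRelabel 4 5 [1;2;3;4;0];
  SRelabel 3 5 [0;2;1;3;4];
  STrans 5 6;
  SRelabel 7 5 [1;0;2;3;4];
  STrans 3 8;
  SMulL 1;
  SRelabel 10 4 [1;2;3;0];
  SMulL 11;
  SRelabel 12 5 [1;2;3;4;0];
  SRelabel 5 5 [0;1;3;2;4];
  STrans 13 14;
  SMulL 0;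
  SRelabel 16 3 [1;2;0];
  SMulL 17;
  SRelabel 18 4 [1;2;3;0];
  SMulL 19;
  SRelabel 20 5 [1;2;3;4;0];
  SRelabel 13 5 [0;1;2;4;3];
  STrans 21 22;
  SRelabel 23 5 [0;3;1;2;4];
  STrans 15 24;
  SRelabel 25 5 [2;1;0;3;4];
  STrans 9 26], [SRelabel 0 4 [0;1;2;2;3];
  SContr 1 2 2 0;
  SRelabel 2 3 [0;1;0;2]], [SMulR 0;
  SMulR 1;
  SMulL 1;
  SRelabel 3 5 [1;2;3;4;0];
  SMulL 0;
  SRelabel 5 4 [1;2;3;0];
  SMulL 6;
  SRelabel 7 5 [1;2;3;4;0];
  SRelabel 8 5 [0;3;2;1;4];
  STrans 4 9;
  SRelabel 10 5 [2;1;0;3;4];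
  STrans 2 11]);
([2;4;0;1;3], 1, [SMulR 0;
  SMulR 1;
  SMulL 2;
  SRelabel 3 5 [1;2;3;4;0];
  SMulR 2;
  SMulL 0;
  SRelabel 6 3 [1;2;0];
  SMulL 7;
  SRelabel 8 4 [1;2;3;0];
  SMulL 9;
  SRelabel 10 5 [1;2;3;4;0];
  SRelabel 11 5 [1;0;2;3;4];
  STrans 5 12;
  SMulL 1;
  SRelabel 14 4 [1;2;3;0];
  SMulL 15;
  SRelabel 16 5 [1;2;3;4;0];
  SRelabel 4 5 [0;1;3;2;4];
  STrans 17 18;
  SRelabel 19 5 [1;0;2;4;3];
  STrans 13 20;
  SRelabel 21 5 [0;2;1;3;4];
  STrans 4 22], [SRelabel 0 4 [0;0;1;2;3];
  SContr 1 0 0 2;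
  SRelabel 2 3 [0;0;1;2];
  SMulL 3;
  SRelabel 4 4 [1;2;3;0];
  SRelabel 5 3 [0;0;1;2];
  SContr 6 0 0 0;
  SRelabel 7 2 [0;0;1]], []);
([2;4;0;3;1], 1, [SMulR 0;
  SMulR 1;
  SMulL 2;
  SRelabel 3 5 [1;2;3;4;0];
  SMulR 2;
  SRelabel 5 5 [0;2;1;3;4];
  STrans 4 6;
  SMulL 1;
  SRelabel 8 4 [1;2;3;0];
  SMulL 9;
  SRelabel 10 5 [1;2;3;4;0];
  SMulL 0;
  SRelabel 12 3 [1;2;0];
  SMulL 13;
  SRelabel 14 4 [1;2;3;0];
  SMulL 15;
  SRelabel 16 5 [1;2;3;4;0];
  SRelabel 17 5 [0;1;3;2;4];
  STrans 11 18;
  SRelabel 4 5 [0;1;3;2;4];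
  STrans 11 20;
  SRelabel 21 5 [0;1;3;4;2];
  STrans 19 22;
  SRelabel 23 5 [2;0;1;3;4];
  STrans 7 24], [SStar 0;
  SRelabel 1 5 [4;3;2;1;0];
  SRelabel 2 5 [2;4;0;3;1];
  STrans 0 3;
  SRelabel 4 4 [0;1;2;3;3];
  SContr 5 3 3 0;
  SRelabel 6 3 [0;1;2;0];
  SMulR 7;
  SRelabel 8 3 [0;1;2;2];
  SRelabel 7 3 [2;0;2];
  SMulL 10;
  SRelabel 11 3 [0;1;2;1];
  STrans 9 12;
  SContr 13 2 2 2;
  SRelabel 14 2 [0;1;0]], []);
([2;4;1;0;3], 1, [SMulR 0;
  SMulR 1;
  SMulR 2;
  SMulL 2;
  SRelabel 4 5 [1;2;3;4;0];
  SRelabel 5 5 [1;0;2;3;4];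
  STrans 3 6;
  SMulL 0;
  SRelabel 8 3 [1;2;0];
  SMulL 9;
  SRelabel 10 4 [1;2;3;0];
  SMulL 11;
  SRelabel 12 5 [1;2;3;4;0];
  SRelabel 13 5 [1;0;2;3;4];
  STrans 3 14;
  SMulL 1;
  SRelabel 16 4 [1;2;3;0];
  SMulL 17;
  SRelabel 18 5 [1;2;3;4;0];
  SRelabel 5 5 [0;1;3;2;4];
  STrans 19 20;
  SRelabel 21 5 [1;0;2;4;3];
  STrans 15 22;
  SRelabel 23 5 [1;2;0;3;4];
  STrans 7 24], [SRelabel 0 4 [0;0;1;2;3];
  SContr 1 0 0 2;
  SRelabel 2 3 [0;0;1;2];
  SMulL 3;
  SRelabel 4 4 [1;2;3;0];
  SRelabel 5 3 [0;0;1;2];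
  SContr 6 0 0 0;
  SRelabel 7 2 [0;0;1]], []);
([2;4;1;3;0], 1, [SMulR 0;
  SMulR 1;
  SMulR 2;
  SMulL 2;
  SRelabel 4 5 [1;2;3;4;0];
  SRelabel 3 5 [0;2;1;3;4];
  STrans 5 6;
  SRelabel 7 5 [1;0;2;3;4];
  STrans 3 8;
  SMulL 1;
  SRelabel 10 4 [1;2;3;0];
  SMulL 11;
  SRelabel 12 5 [1;2;3;4;0];
  SMulL 0;
  SRelabel 14 3 [1;2;0];
  SMulL 15;
  SRelabel 16 4 [1;2;3;0];
  SMulL 17;
  SRelabel 18 5 [1;2;3;4;0];
  SRelabel 19 5 [0;1;3;2;4];
  STrans 13 20;
  SRelabel 5 5 [0;1;3;2;4];
  STrans 13 22;
  SRelabel 23 5 [0;1;3;4;2];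
  STrans 21 24;
  SRelabel 25 5 [2;1;0;3;4];
  STrans 9 26], [SRelabel 0 5 [2;4;1;3;0];
  STrans 0 1;
  SRelabel 2 4 [0;1;2;3;3];
  SContr 3 3 3 2;
  SRelabel 4 3 [0;1;2;0];
  SMulR 5;
  SRelabel 6 3 [0;1;2;2];
  SContr 7 2 2 2;
  SRelabel 8 2 [0;1;0]], []);
([2;4;3;0;1], 1, [SMulR 0;
  SMulR 1;
  SMulL 2;
  SRelabel 3 5 [1;2;3;4;0];
  SMulR 2;
  SMulL 1;
  SRelabel 6 4 [1;2;3;0];
  SMulL 7;
  SRelabel 8 5 [1;2;3;4;0];
  SRelabel 9 5 [1;0;2;3;4];
  STrans 5 10;
  SRelabel 11 5 [0;2;1;3;4];
  STrans 4 12;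
  SMulL 0;
  SRelabel 14 3 [1;2;0];
  SMulL 15;
  SRelabel 16 4 [1;2;3;0];
  SMulL 17;
  SRelabel 18 5 [1;2;3;4;0];
  SRelabel 19 5 [0;2;1;3;4];
  STrans 4 20;
  SRelabel 4 5 [0;1;3;2;4];
  STrans 9 22;
  SRelabel 23 5 [0;2;1;4;3];
  STrans 21 24;
  SRelabel 25 5 [2;0;3;1;4];
  STrans 13 26], [SRelabel 0 4 [0;0;1;2;3];
  SContr 1 0 0 3;
  SRelabel 2 3 [0;0;1;2];
  SMulL 3;
  SRelabel 4 4 [1;2;3;0];
  SRelabel 5 3 [0;0;1;2];
  SContr 6 0 0 0;
  SRelabel 7 2 [0;0;1]], []);
([2;4;3;1;0], 1, [SMulR 0;
  SMulR 1;
  SMulR 2;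
  SMulL 2;
  SRelabel 4 5 [1;2;3;4;0];
  SRelabel 5 5 [1;0;2;3;4];
  STrans 3 6;
  SMulL 1;
  SRelabel 8 4 [1;2;3;0];
  SMulL 9;
  SRelabel 10 5 [1;2;3;4;0];
  SRelabel 11 5 [1;0;2;3;4];
  STrans 3 12;
  SRelabel 13 5 [1;2;0;3;4];
  STrans 7 14;
  SMulL 0;
  SRelabel 16 3 [1;2;0];
  SMulL 17;
  SRelabel 18 4 [1;2;3;0];
  SMulL 19;
  SRelabel 20 5 [1;2;3;4;0];
  SRelabel 21 5 [0;2;1;3;4];
  STrans 5 22;
  SRelabel 5 5 [0;1;3;2;4];
  STrans 11 24;
  SRelabel 25 5 [0;2;1;4;3];
  STrans 23 26;
  SRelabel 27 5 [2;1;3;0;4];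
  STrans 15 28], [SRelabel 0 4 [0;0;1;2;3];
  SContr 1 0 0 3;
  SRelabel 2 3 [0;0;1;2];
  SMulL 3;
  SRelabel 4 4 [1;2;3;0];
  SRelabel 5 3 [0;0;1;2];
  SContr 6 0 0 0;
  SRelabel 7 2 [0;0;1]], []);
([3;0;1;2;4], 1, [SMulR 0;
  SMulL 1;
  SRelabel 2 4 [1;2;3;0];
  SMulL 3;
  SRelabel 4 5 [1;2;3;4;0];
  SMulR 1;
  SMulL 6;
  SRelabel 7 5 [1;2;3;4;0];
  SMulR 6;
  SRelabel 9 5 [0;2;1;3;4];
  STrans 8 10;
  SRelabel 11 5 [0;1;3;2;4];
  STrans 5 12], [SRelabel 0 4 [0;0;1;2;3];
  SContr 1 0 0 1;
  SRelabel 2 3 [0;0;1;2];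
  SMulR 3;
  SRelabel 4 3 [0;1;2;2];
  SContr 5 2 2 2;
  SRelabel 6 2 [0;1;0]], []);
([3;0;1;4;2], 1, [SMulR 0;
  SMulL 1;
  SRelabel 2 4 [1;2;3;0];
  SMulL 3;
  SRelabel 4 5 [1;2;3;4;0];
  SMulR 1;
  SMulL 6;
  SRelabel 7 5 [1;2;3;4;0];
  SRelabel 8 5 [0;1;3;2;4];
  STrans 5 9;
  SMulR 6;
  SMulL 0;
  SRelabel 12 3 [1;2;0];
  SMulL 13;
  SRelabel 14 4 [1;2;3;0];
  SMulL 15;
  SRelabel 16 5 [1;2;3;4;0];
  SRelabel 17 5 [1;0;2;3;4];
  STrans 11 18;
  SRelabel 19 5 [0;3;1;2;4];
  STrans 10 20], [SRelabel 0 4 [0;0;1;2;3];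
  SContr 1 0 0 1;
  SRelabel 2 3 [0;0;1;2];
  SMulR 3;
  SRelabel 4 3 [0;1;2;2];
  SRelabel 3 3 [2;0;2];
  SMulL 6;
  SRelabel 7 3 [0;1;2;1];
  STrans 5 8;
  SContr 9 2 2 2;
  SRelabel 10 2 [0;1;0]], []);
([3;0;2;1;4], 1, [SMulR 0;
  SMulR 1;
  SMulL 2;
  SRelabel 3 5 [1;2;3;4;0];
  SMulL 1;
  SRelabel 5 4 [1;2;3;0];
  SMulL 6;
  SRelabel 7 5 [1;2;3;4;0];
  SRelabel 8 5 [0;2;1;3;4];
  STrans 4 9;
  SMulR 2;
  SRelabel 11 5 [0;2;1;3;4];
  STrans 4 12;
  SRelabel 13 5 [0;2;3;1;4];
  STrans 10 14], [SRelabel 0 4 [0;1;1;2;3];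
  SContr 1 1 1 2;
  SRelabel 2 3 [0;0;1;2];
  SMulR 3;
  SRelabel 4 3 [0;1;2;2];
  SContr 5 2 2 2;
  SRelabel 6 2 [0;1;0]], []);
([3;0;2;4;1], 1, [SMulR 0;
  SMulR 1;
  SMulL 2;
  SRelabel 3 5 [1;2;3;4;0];
  SMulL 1;
  SRelabel 5 4 [1;2;3;0];
  SMulL 6;
  SRelabel 7 5 [1;2;3;4;0];
  SRelabel 4 5 [0;1;3;2;4];
  STrans 8 9;
  SMulR 2;
  SMulL 0;
  SRelabel 12 3 [1;2;0];
  SMulL 13;
  SRelabel 14 4 [1;2;3;0];
  SMulL 15;
  SRelabel 16 5 [1;2;3;4;0];
  SRelabel 17 5 [1;0;2;3;4];
  STrans 11 18;
  SRelabel 19 5 [0;3;1;2;4];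
  STrans 10 20;
  SRelabel 21 5 [0;2;1;3;4];
  STrans 4 22], [SRelabel 0 5 [3;0;2;4;1];
  STrans 0 1;
  SRelabel 2 5 [3;0;2;4;1];
  STrans 0 3;
  SRelabel 2 4 [0;1;2;3;3];
  SContr 5 3 3 0;
  SRelabel 6 3 [0;1;2;0];
  SMulR 7;
  SMulR 8;
  SRelabel 9 5 [1;4;2;0;3];
  STrans 4 10;
  SRelabel 11 4 [0;0;1;2;3];
  SContr 12 0 0 2;
  SRelabel 13 3 [0;0;1;2];
  SMulL 14;
  SRelabel 15 4 [1;2;3;0];
  SRelabel 16 3 [0;0;1;2];
  SContr 17 0 0 0;
  SRelabel 18 2 [0;0;1]], []);
([3;0;4;1;2], 1, [SMulR 0;
  SMulL 1;
  SRelabel 2 4 [1;2;3;0];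
  SMulL 3;
  SRelabel 4 5 [1;2;3;4;0];
  SMulR 1;
  SMulL 6;
  SRelabel 7 5 [1;2;3;4;0];
  SMulR 6;
  SRelabel 9 5 [0;2;1;3;4];
  STrans 8 10;
  SMulL 0;
  SRelabel 12 3 [1;2;0];
  SMulL 13;
  SRelabel 14 4 [1;2;3;0];
  SMulL 15;
  SRelabel 16 5 [1;2;3;4;0];
  SRelabel 5 5 [0;1;2;4;3];
  STrans 17 18;
  SRelabel 19 5 [2;0;1;3;4];
  STrans 11 20;
  SRelabel 21 5 [0;1;3;2;4];
  STrans 5 22], [SRelabel 0 4 [0;1;1;2;3];
  SContr 1 1 1 3;
  SRelabel 2 3 [0;0;1;2];
  SMulR 3;
  SRelabel 4 3 [0;1;2;2];
  SContr 5 2 2 2;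
  SRelabel 6 2 [0;1;0]], []);
([3;0;4;2;1], 1, [SMulR 0;
  SMulR 1;
  SMulL 2;
  SRelabel 3 5 [1;2;3;4;0];
  SMulL 1;
  SRelabel 5 4 [1;2;3;0];
  SMulL 6;
  SRelabel 7 5 [1;2;3;4;0];
  SRelabel 8 5 [0;2;1;3;4];
  STrans 4 9;
  SMulR 2;
  SRelabel 11 5 [0;2;1;3;4];
  STrans 4 12;
  SMulL 0;
  SRelabel 14 3 [1;2;0];
  SMulL 15;
  SRelabel 16 4 [1;2;3;0];
  SMulL 17;
  SRelabel 18 5 [1;2;3;4;0];
  SRelabel 8 5 [0;1;2;4;3];
  STrans 19 20;
  SRelabel 21 5 [2;0;1;3;4];
  STrans 13 22;
  SRelabel 23 5 [0;2;3;1;4];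
  STrans 10 24], [SRelabel 0 4 [0;1;1;2;3];
  SContr 1 1 1 3;
  SRelabel 2 3 [0;0;1;2];
  SMulR 3;
  SRelabel 4 3 [0;1;2;2];
  SContr 5 2 2 2;
  SRelabel 6 2 [0;1;0]], []);
([3;1;0;2;4], 1, [SMulR 0;
  SMulR 1;
  SMulR 2;
  SMulL 1;
  SRelabel 4 4 [1;2;3;0];
  SMulL 5;
  SRelabel 6 5 [1;2;3;4;0];
  SRelabel 7 5 [1;0;2;3;4];
  STrans 3 8;
  SMulL 2;
  SRelabel 10 5 [1;2;3;4;0];
  SRelabel 3 5 [0;2;1;3;4];
  STrans 11 12;
  SRelabel 13 5 [1;0;3;2;4];
  STrans 9 14], [SRelabel 0 4 [0;0;1;2;3];
  SContr 1 0 0 1;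
  SRelabel 2 3 [0;0;1;2];
  SMulR 3;
  SRelabel 4 3 [0;1;2;2];
  SContr 5 2 2 2;
  SRelabel 6 2 [0;1;0]], []);
([3;1;0;4;2], 1, [SMulR 0;
  SMulR 1;
  SMulR 2;
  SMulL 1;
  SRelabel 4 4 [1;2;3;0];
  SMulL 5;
  SRelabel 6 5 [1;2;3;4;0];
  SMulL 2;
  SRelabel 8 5 [1;2;3;4;0];
  SRelabel 9 5 [0;1;3;2;4];
  STrans 7 10;
  SMulL 0;
  SRelabel 12 3 [1;2;0];
  SMulL 13;
  SRelabel 14 4 [1;2;3;0];
  SMulL 15;
  SRelabel 16 5 [1;2;3;4;0];
  SRelabel 17 5 [1;0;2;3;4];
  STrans 3 18;
  SRelabel 19 5 [0;3;1;2;4];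
  STrans 11 20;
  SRelabel 21 5 [1;0;2;3;4];
  STrans 3 22], [SRelabel 0 4 [0;0;1;2;3];
  SContr 1 0 0 1;
  SRelabel 2 3 [0;0;1;2];
  SMulR 3;
  SRelabel 4 3 [0;1;2;2];
  SRelabel 3 3 [2;0;2];
  SMulL 6;
  SRelabel 7 3 [0;1;2;1];
  STrans 5 8;
  SContr 9 2 2 2;
  SRelabel 10 2 [0;1;0]], []);
([3;1;2;0;4], 1, [SMulR 0;
  SMulR 1;
  SMulR 2;
  SMulL 2;
  SRelabel 4 5 [1;2;3;4;0];
  SMulL 1;
  SRelabel 6 4 [1;2;3;0];
  SMulL 7;
  SRelabel 8 5 [1;2;3;4;0];
  SRelabel 9 5 [0;2;1;3;4];
  STrans 5 10;
  SRelabel 3 5 [0;2;1;3;4];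
  STrans 5 12;
  SRelabel 13 5 [0;2;3;1;4];
  STrans 11 14;
  SRelabel 15 5 [1;0;2;3;4];
  STrans 3 16], [SRelabel 0 4 [0;1;1;2;3];
  SContr 1 1 1 1;
  SRelabel 2 3 [0;0;1;2];
  SMulR 3;
  SRelabel 4 3 [0;1;2;2];
  SContr 5 2 2 2;
  SRelabel 6 2 [0;1;0]], []);
([3;1;2;4;0], 1, [SMulR 0;
  SMulR 1;
  SMulR 2;
  SMulL 2;
  SRelabel 4 5 [1;2;3;4;0];
  SRelabel 5 5 [1;0;2;3;4];
  STrans 3 6;
  SMulL 1;
  SRelabel 8 4 [1;2;3;0];
  SMulL 9;
  SRelabel 10 5 [1;2;3;4;0];
  SRelabel 5 5 [0;1;3;2;4];
  STrans 11 12;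
  SMulL 0;
  SRelabel 14 3 [1;2;0];
  SMulL 15;
  SRelabel 16 4 [1;2;3;0];
  SMulL 17;
  SRelabel 18 5 [1;2;3;4;0];
  SRelabel 19 5 [1;0;2;3;4];
  STrans 3 20;
  SRelabel 21 5 [0;3;1;2;4];
  STrans 13 22;
  SRelabel 23 5 [1;2;0;3;4];
  STrans 7 24], [SRelabel 0 4 [0;1;1;2;3];
  SContr 1 1 1 1;
  SRelabel 2 3 [0;0;1;2];
  SMulR 3;
  SRelabel 4 3 [0;1;2;2];
  SRelabel 3 3 [2;0;2];
  SMulL 6;
  SRelabel 7 3 [0;1;2;1];
  STrans 5 8;
  SContr 9 2 2 2;
  SRelabel 10 2 [0;1;0]], []);
([3;1;4;0;2], 1, [SMulR 0;
  SMulR 1;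
  SMulR 2;
  SMulL 1;
  SRelabel 4 4 [1;2;3;0];
  SMulL 5;
  SRelabel 6 5 [1;2;3;4;0];
  SRelabel 7 5 [1;0;2;3;4];
  STrans 3 8;
  SMulL 2;
  SRelabel 10 5 [1;2;3;4;0];
  SRelabel 3 5 [0;2;1;3;4];
  STrans 11 12;
  SMulL 0;
  SRelabel 14 3 [1;2;0];
  SMulL 15;
  SRelabel 16 4 [1;2;3;0];
  SMulL 17;
  SRelabel 18 5 [1;2;3;4;0];
  SRelabel 7 5 [0;1;2;4;3];
  STrans 19 20;
  SRelabel 21 5 [2;0;1;3;4];
  STrans 13 22;
  SRelabel 23 5 [1;0;3;2;4];
  STrans 9 24], [SStar 0;
  SRelabel 1 5 [4;3;2;1;0];
  SRelabel 0 5 [2;4;0;3;1];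
  STrans 2 3;
  SRelabel 4 4 [0;1;2;3;3];
  SContr 5 3 3 0;
  SRelabel 6 3 [0;1;2;0];
  SMulR 7;
  SRelabel 8 3 [0;1;2;2];
  SRelabel 7 3 [2;0;2];
  SMulL 10;
  SRelabel 11 3 [0;1;2;1];
  STrans 9 12;
  SContr 13 2 2 2;
  SRelabel 14 2 [0;1;0]], []);
([3;1;4;2;0], 1, [SMulR 0;
  SMulR 1;
  SMulR 2;
  SMulL 2;
  SRelabel 4 5 [1;2;3;4;0];
  SMulL 1;
  SRelabel 6 4 [1;2;3;0];
  SMulL 7;
  SRelabel 8 5 [1;2;3;4;0];
  SRelabel 9 5 [0;2;1;3;4];
  STrans 5 10;
  SRelabel 11 5 [1;0;2;3;4];
  STrans 3 12;
  SRelabel 3 5 [0;2;1;3;4];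
  STrans 5 14;
  SMulL 0;
  SRelabel 16 3 [1;2;0];
  SMulL 17;
  SRelabel 18 4 [1;2;3;0];
  SMulL 19;
  SRelabel 20 5 [1;2;3;4;0];
  SRelabel 9 5 [0;1;2;4;3];
  STrans 21 22;
  SRelabel 23 5 [2;0;1;3;4];
  STrans 15 24;
  SRelabel 25 5 [1;2;3;0;4];
  STrans 13 26], [SRelabel 0 5 [3;1;4;2;0];
  STrans 0 1;
  SRelabel 2 4 [0;1;1;2;3];
  SContr 3 1 1 0;
  SRelabel 4 3 [0;0;1;2];
  SMulL 5;
  SRelabel 6 4 [1;2;3;0];
  SRelabel 7 3 [0;0;1;2];
  SContr 8 0 0 0;
  SRelabel 9 2 [0;0;1]], []);
([3;2;0;1;4], 1, [SMulR 0;
  SMulR 1;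
  SMulL 2;
  SRelabel 3 5 [1;2;3;4;0];
  SMulR 2;
  SMulL 1;
  SRelabel 6 4 [1;2;3;0];
  SMulL 7;
  SRelabel 8 5 [1;2;3;4;0];
  SRelabel 9 5 [1;0;2;3;4];
  STrans 5 10;
  SRelabel 5 5 [0;2;1;3;4];
  STrans 4 12;
  SRelabel 13 5 [1;0;3;2;4];
  STrans 11 14;
  SRelabel 15 5 [0;2;1;3;4];
  STrans 4 16], [SRelabel 0 4 [0;0;1;2;3];
  SContr 1 0 0 2;
  SRelabel 2 3 [0;0;1;2];
  SMulR 3;
  SRelabel 4 3 [0;1;2;2];
  SContr 5 2 2 2;
  SRelabel 6 2 [0;1;0]], []);
([3;2;0;4;1], 1, [SMulR 0;
  SMulR 1;
  SMulL 2;
  SRelabel 3 5 [1;2;3;4;0];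
  SMulR 2;
  SRelabel 5 5 [0;2;1;3;4];
  STrans 4 6;
  SMulL 1;
  SRelabel 8 4 [1;2;3;0];
  SMulL 9;
  SRelabel 10 5 [1;2;3;4;0];
  SRelabel 4 5 [0;1;3;2;4];
  STrans 11 12;
  SMulL 0;
  SRelabel 14 3 [1;2;0];
  SMulL 15;
  SRelabel 16 4 [1;2;3;0];
  SMulL 17;
  SRelabel 18 5 [1;2;3;4;0];
  SRelabel 19 5 [1;0;2;3;4];
  STrans 5 20;
  SRelabel 21 5 [0;3;1;2;4];
  STrans 13 22;
  SRelabel 23 5 [2;0;1;3;4];
  STrans 7 24], [SRelabel 0 4 [0;1;2;2;3];
  SContr 1 2 2 0;
  SRelabel 2 3 [0;1;0;2];
  SMulL 3;
  SRelabel 4 4 [1;2;3;0];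
  SRelabel 5 3 [0;0;1;2];
  SContr 6 0 0 0;
  SRelabel 7 2 [0;0;1]], []);
([3;2;1;0;4], 1, [SMulR 0;
  SMulR 1;
  SMulR 2;
  SMulL 2;
  SRelabel 4 5 [1;2;3;4;0];
  SRelabel 5 5 [1;0;2;3;4];
  STrans 3 6;
  SMulL 1;
  SRelabel 8 4 [1;2;3;0];
  SMulL 9;
  SRelabel 10 5 [1;2;3;4;0];
  SRelabel 11 5 [1;0;2;3;4];
  STrans 3 12;
  SRelabel 3 5 [0;2;1;3;4];
  STrans 5 14;
  SRelabel 15 5 [1;0;3;2;4];
  STrans 13 16;
  SRelabel 17 5 [1;2;0;3;4];
  STrans 7 18], [SRelabel 0 4 [0;1;2;2;3];
  SContr 1 2 2 0;
  SRelabel 2 3 [0;1;0;2];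
  SMulR 3;
  SRelabel 4 3 [0;1;2;2];
  SContr 5 2 2 2;
  SRelabel 6 2 [0;1;0]], []);
([3;2;1;4;0], 1, [SMulR 0;
  SMulR 1;
  SMulR 2;
  SMulL 2;
  SRelabel 4 5 [1;2;3;4;0];
  SRelabel 3 5 [0;2;1;3;4];
  STrans 5 6;
  SRelabel 7 5 [1;0;2;3;4];
  STrans 3 8;
  SMulL 1;
  SRelabel 10 4 [1;2;3;0];
  SMulL 11;
  SRelabel 12 5 [1;2;3;4;0];
  SRelabel 5 5 [0;1;3;2;4];
  STrans 13 14;
  SMulL 0;
  SRelabel 16 3 [1;2;0];
  SMulL 17;
  SRelabel 18 4 [1;2;3;0];
  SMulL 19;
  SRelabel 20 5 [1;2;3;4;0];
  SRelabel 21 5 [1;0;2;3;4];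
  STrans 3 22;
  SRelabel 23 5 [0;3;1;2;4];
  STrans 15 24;
  SRelabel 25 5 [2;1;0;3;4];
  STrans 9 26], [SRelabel 0 4 [0;1;2;2;3];
  SContr 1 2 2 0;
  SRelabel 2 3 [0;1;0;2];
  SMulR 3;
  SRelabel 4 3 [0;1;2;2];
  SRelabel 3 3 [2;0;2];
  SMulL 6;
  SRelabel 7 3 [0;1;2;1];
  STrans 5 8;
  SContr 9 2 2 2;
  SRelabel 10 2 [0;1;0]], []);
([3;2;4;0;1], 1, [SMulR 0;
  SMulR 1;
  SMulL 2;
  SRelabel 3 5 [1;2;3;4;0];
  SMulR 2;
  SMulL 1;
  SRelabel 6 4 [1;2;3;0];
  SMulL 7;
  SRelabel 8 5 [1;2;3;4;0];
  SRelabel 9 5 [1;0;2;3;4];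
  STrans 5 10;
  SRelabel 11 5 [0;2;1;3;4];
  STrans 4 12;
  SRelabel 5 5 [0;2;1;3;4];
  STrans 4 14;
  SMulL 0;
  SRelabel 16 3 [1;2;0];
  SMulL 17;
  SRelabel 18 4 [1;2;3;0];
  SMulL 19;
  SRelabel 20 5 [1;2;3;4;0];
  SRelabel 9 5 [0;1;2;4;3];
  STrans 21 22;
  SRelabel 23 5 [2;0;1;3;4];
  STrans 15 24;
  SRelabel 25 5 [2;0;3;1;4];
  STrans 13 26], [SRelabel 0 4 [0;0;1;2;3];
  SContr 1 0 0 3;
  SRelabel 2 3 [0;0;1;2];
  SMulR 3;
  SRelabel 4 3 [0;1;2;2];
  SContr 5 2 2 2;
  SRelabel 6 2 [0;1;0]], []);
([3;2;4;1;0], 1, [SMulR 0;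
  SMulR 1;
  SMulR 2;
  SMulL 2;
  SRelabel 4 5 [1;2;3;4;0];
  SRelabel 5 5 [1;0;2;3;4];
  STrans 3 6;
  SMulL 1;
  SRelabel 8 4 [1;2;3;0];
  SMulL 9;
  SRelabel 10 5 [1;2;3;4;0];
  SRelabel 11 5 [1;0;2;3;4];
  STrans 3 12;
  SRelabel 13 5 [1;2;0;3;4];
  STrans 7 14;
  SRelabel 3 5 [0;2;1;3;4];
  STrans 5 16;
  SMulL 0;
  SRelabel 18 3 [1;2;0];
  SMulL 19;
  SRelabel 20 4 [1;2;3;0];
  SMulL 21;
  SRelabel 22 5 [1;2;3;4;0];
  SRelabel 11 5 [0;1;2;4;3];
  STrans 23 24;
  SRelabel 25 5 [2;0;1;3;4];
  STrans 17 26;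
  SRelabel 27 5 [2;1;3;0;4];
  STrans 15 28], [SRelabel 0 4 [0;0;1;2;3];
  SContr 1 0 0 3;
  SRelabel 2 3 [0;0;1;2];
  SMulR 3;
  SRelabel 4 3 [0;1;2;2];
  SContr 5 2 2 2;
  SRelabel 6 2 [0;1;0]], []);
([3;4;0;1;2], 1, [SMulR 0;
  SMulL 1;
  SRelabel 2 4 [1;2;3;0];
  SMulL 3;
  SRelabel 4 5 [1;2;3;4;0];
  SMulR 1;
  SMulL 6;
  SRelabel 7 5 [1;2;3;4;0];
  SRelabel 8 5 [0;1;3;2;4];
  STrans 5 9;
  SMulR 6;
  SMulL 0;
  SRelabel 12 3 [1;2;0];
  SMulL 13;
  SRelabel 14 4 [1;2;3;0];
  SMulL 15;
  SRelabel 16 5 [1;2;3;4;0];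
  SRelabel 17 5 [1;0;2;3;4];
  STrans 11 18;
  SRelabel 10 5 [1;0;2;4;3];
  STrans 19 20;
  SRelabel 21 5 [0;3;1;2;4];
  STrans 10 22], [SRelabel 0 4 [0;0;1;2;3];
  SContr 1 0 0 2;
  SRelabel 2 3 [0;0;1;2];
  SMulR 3;
  SRelabel 4 3 [0;1;2;2];
  SRelabel 3 3 [2;0;2];
  SMulL 6;
  SRelabel 7 3 [0;1;2;1];
  STrans 5 8;
  SContr 9 2 2 2;
  SRelabel 10 2 [0;1;0]], []);
([3;4;0;2;1], 1, [SMulR 0;
  SMulR 1;
  SMulL 2;
  SRelabel 3 5 [1;2;3;4;0];
  SMulL 1;
  SRelabel 5 4 [1;2;3;0];
  SMulL 6;
  SRelabel 7 5 [1;2;3;4;0];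
  SRelabel 4 5 [0;1;3;2;4];
  STrans 8 9;
  SRelabel 10 5 [0;2;1;3;4];
  STrans 4 11;
  SMulR 2;
  SMulL 0;
  SRelabel 14 3 [1;2;0];
  SMulL 15;
  SRelabel 16 4 [1;2;3;0];
  SMulL 17;
  SRelabel 18 5 [1;2;3;4;0];
  SRelabel 19 5 [1;0;2;3;4];
  STrans 13 20;
  SRelabel 10 5 [1;0;2;4;3];
  STrans 21 22;
  SRelabel 23 5 [0;3;2;1;4];
  STrans 12 24], [SRelabel 0 4 [0;1;2;3;3];
  SContr 1 3 3 0;
  SRelabel 2 3 [0;1;2;0];
  SMulL 3;
  SRelabel 4 4 [1;2;3;0];
  SRelabel 5 3 [0;0;1;2];
  SContr 6 0 0 0;
  SRelabel 7 2 [0;0;1]], []);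
([3;4;1;0;2], 1, [SMulR 0;
  SMulR 1;
  SMulR 2;
  SMulL 1;
  SRelabel 4 4 [1;2;3;0];
  SMulL 5;
  SRelabel 6 5 [1;2;3;4;0];
  SMulL 2;
  SRelabel 8 5 [1;2;3;4;0];
  SRelabel 9 5 [0;1;3;2;4];
  STrans 7 10;
  SRelabel 11 5 [1;0;2;3;4];
  STrans 3 12;
  SMulL 0;
  SRelabel 14 3 [1;2;0];
  SMulL 15;
  SRelabel 16 4 [1;2;3;0];
  SMulL 17;
  SRelabel 18 5 [1;2;3;4;0];
  SRelabel 19 5 [1;0;2;3;4];
  STrans 3 20;
  SRelabel 11 5 [1;0;2;4;3];
  STrans 21 22;
  SRelabel 23 5 [1;3;0;2;4];
  STrans 13 24], [SRelabel 0 4 [0;1;2;3;3];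
  SContr 1 3 3 0;
  SRelabel 2 3 [0;1;2;0];
  SMulR 3;
  SRelabel 4 3 [0;1;2;2];
  SContr 5 2 2 2;
  SRelabel 6 2 [0;1;0]], []);
([3;4;1;2;0], 1, [SMulR 0;
  SMulR 1;
  SMulR 2;
  SMulL 2;
  SRelabel 4 5 [1;2;3;4;0];
  SRelabel 5 5 [1;0;2;3;4];
  STrans 3 6;
  SMulL 1;
  SRelabel 8 4 [1;2;3;0];
  SMulL 9;
  SRelabel 10 5 [1;2;3;4;0];
  SRelabel 5 5 [0;1;3;2;4];
  STrans 11 12;
  SRelabel 13 5 [1;2;0;3;4];
  STrans 7 14;
  SMulL 0;
  SRelabel 16 3 [1;2;0];
  SMulL 17;
  SRelabel 18 4 [1;2;3;0];
  SMulL 19;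
  SRelabel 20 5 [1;2;3;4;0];
  SRelabel 21 5 [1;0;2;3;4];
  STrans 3 22;
  SRelabel 13 5 [1;0;2;4;3];
  STrans 23 24;
  SRelabel 25 5 [1;3;2;0;4];
  STrans 15 26], [SRelabel 0 4 [0;1;2;3;3];
  SContr 1 3 3 0;
  SRelabel 2 3 [0;1;2;0];
  SMulR 3;
  SRelabel 4 3 [0;1;2;2];
  SRelabel 3 3 [2;0;2];
  SMulL 6;
  SRelabel 7 3 [0;1;2;1];
  STrans 5 8;
  SContr 9 2 2 2;
  SRelabel 10 2 [0;1;0]], []);
([3;4;2;0;1], 1, [SMulR 0;
  SMulR 1;
  SMulL 2;
  SRelabel 3 5 [1;2;3;4;0];
  SMulR 2;
  SRelabel 5 5 [0;2;1;3;4];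
  STrans 4 6;
  SMulL 1;
  SRelabel 8 4 [1;2;3;0];
  SMulL 9;
  SRelabel 10 5 [1;2;3;4;0];
  SRelabel 4 5 [0;1;3;2;4];
  STrans 11 12;
  SRelabel 13 5 [2;0;1;3;4];
  STrans 7 14;
  SMulL 0;
  SRelabel 16 3 [1;2;0];
  SMulL 17;
  SRelabel 18 4 [1;2;3;0];
  SMulL 19;
  SRelabel 20 5 [1;2;3;4;0];
  SRelabel 21 5 [1;0;2;3;4];
  STrans 5 22;
  SRelabel 13 5 [1;0;2;4;3];
  STrans 23 24;
  SRelabel 25 5 [2;3;0;1;4];
  STrans 15 26], [SRelabel 0 4 [0;0;1;2;3];
  SContr 1 0 0 3;
  SRelabel 2 3 [0;0;1;2];
  SMulR 3;
  SRelabel 4 3 [0;1;2;2];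
  SRelabel 3 3 [2;0;2];
  SMulL 6;
  SRelabel 7 3 [0;1;2;1];
  STrans 5 8;
  SContr 9 2 2 2;
  SRelabel 10 2 [0;1;0]], []);
([3;4;2;1;0], 1, [SMulR 0;
  SMulR 1;
  SMulR 2;
  SMulL 2;
  SRelabel 4 5 [1;2;3;4;0];
  SRelabel 3 5 [0;2;1;3;4];
  STrans 5 6;
  SMulL 1;
  SRelabel 8 4 [1;2;3;0];
  SMulL 9;
  SRelabel 10 5 [1;2;3;4;0];
  SRelabel 5 5 [0;1;3;2;4];
  STrans 11 12;
  SRelabel 13 5 [2;0;1;3;4];
  STrans 7 14;
  SMulL 0;
  SRelabel 16 3 [1;2;0];
  SMulL 17;
  SRelabel 18 4 [1;2;3;0];
  SMulL 19;
  SRelabel 20 5 [1;2;3;4;0];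
  SRelabel 21 5 [1;0;2;3;4];
  STrans 3 22;
  SRelabel 13 5 [1;0;2;4;3];
  STrans 23 24;
  SRelabel 25 5 [2;3;0;1;4];
  STrans 15 26;
  SRelabel 27 5 [1;0;2;3;4];
  STrans 3 28], [SRelabel 0 4 [0;1;1;2;3];
  SContr 1 1 1 2;
  SRelabel 2 3 [0;0;1;2];
  SMulR 3;
  SRelabel 4 3 [0;1;2;2];
  SRelabel 3 3 [2;0;2];
  SMulL 6;
  SRelabel 7 3 [0;1;2;1];
  STrans 5 8;
  SContr 9 2 2 2;
  SRelabel 10 2 [0;1;0]], []);
([4;0;1;2;3], 1, [SMulL 0;
  SRelabel 1 3 [1;2;0];
  SMulL 2;
  SRelabel 3 4 [1;2;3;0];
  SMulL 4;
  SRelabel 5 5 [1;2;3;4;0];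
  SMulR 0;
  SMulL 7;
  SRelabel 8 4 [1;2;3;0];
  SMulL 9;
  SRelabel 10 5 [1;2;3;4;0];
  SRelabel 11 5 [0;1;2;4;3];
  STrans 6 12;
  SMulR 7;
  SMulL 14;
  SRelabel 15 5 [1;2;3;4;0];
  SMulR 14;
  SRelabel 17 5 [0;2;1;3;4];
  STrans 16 18;
  SRelabel 19 5 [0;1;4;2;3];
  STrans 13 20], [SStar 0;
  SRelabel 1 5 [4;3;2;1;0];
  SRelabel 2 4 [0;1;1;2;3];
  SContr 3 1 1 0;
  SRelabel 4 3 [0;0;1;2];
  SMulR 5;
  SRelabel 6 3 [0;1;2;2];
  SRelabel 5 3 [2;0;2];
  SMulL 8;
  SRelabel 9 3 [0;1;2;1];
  STrans 7 10;
  SContr 11 2 2 2;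
  SRelabel 12 2 [0;1;0]], []);
([4;0;1;3;2], 1, [SMulR 0;
  SMulL 1;
  SRelabel 2 4 [1;2;3;0];
  SMulL 3;
  SRelabel 4 5 [1;2;3;4;0];
  SMulL 0;
  SRelabel 6 3 [1;2;0];
  SMulL 7;
  SRelabel 8 4 [1;2;3;0];
  SMulL 9;
  SRelabel 10 5 [1;2;3;4;0];
  SRelabel 5 5 [0;1;2;4;3];
  STrans 11 12;
  SMulR 1;
  SMulL 14;
  SRelabel 15 5 [1;2;3;4;0];
  SMulR 14;
  SRelabel 17 5 [0;2;1;3;4];
  STrans 16 18;
  SRelabel 19 5 [0;1;4;2;3];
  STrans 13 20;
  SRelabel 21 5 [0;1;3;2;4];
  STrans 5 22], [SRelabel 0 4 [0;0;1;2;3];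
  SContr 1 0 0 1;
  SRelabel 2 3 [0;0;1;2];
  SRelabel 0 4 [0;1;2;2;3];
  SContr 4 2 2 3;
  SRelabel 5 3 [0;1;0;2];
  SRelabel 6 3 [2;1;0];
  STrans 3 7;
  SMulL 8;
  SRelabel 9 4 [1;2;3;0];
  SRelabel 10 3 [0;0;1;2];
  SContr 11 0 0 0;
  SRelabel 12 2 [0;0;1]], []);
([4;0;2;1;3], 1, [SMulR 0;
  SMulR 1;
  SMulL 2;
  SRelabel 3 5 [1;2;3;4;0];
  SMulL 0;
  SRelabel 5 3 [1;2;0];
  SMulL 6;
  SRelabel 7 4 [1;2;3;0];
  SMulL 8;
  SRelabel 9 5 [1;2;3;4;0];
  SMulL 1;
  SRelabel 11 4 [1;2;3;0];
  SMulL 12;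
  SRelabel 13 5 [1;2;3;4;0];
  SRelabel 14 5 [0;1;2;4;3];
  STrans 10 15;
  SMulR 2;
  SRelabel 17 5 [0;2;1;3;4];
  STrans 4 18;
  SRelabel 19 5 [0;1;4;2;3];
  STrans 16 20;
  SRelabel 21 5 [0;2;1;3;4];
  STrans 4 22], [SStar 0;
  SRelabel 1 5 [4;3;2;1;0];
  SRelabel 2 4 [0;1;2;2;3];
  SContr 3 2 2 1;
  SRelabel 4 3 [0;1;0;2];
  SMulR 5;
  SRelabel 6 3 [0;1;2;2];
  SRelabel 5 3 [2;0;2];
  SMulL 8;
  SRelabel 9 3 [0;1;2;1];
  STrans 7 10;
  SContr 11 2 2 2;
  SRelabel 12 2 [0;1;0]], []);
([4;0;2;3;1], 1, [SMulR 0;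
  SMulR 1;
  SMulL 2;
  SRelabel 3 5 [1;2;3;4;0];
  SMulL 1;
  SRelabel 5 4 [1;2;3;0];
  SMulL 6;
  SRelabel 7 5 [1;2;3;4;0];
  SRelabel 8 5 [0;2;1;3;4];
  STrans 4 9;
  SMulL 0;
  SRelabel 11 3 [1;2;0];
  SMulL 12;
  SRelabel 13 4 [1;2;3;0];
  SMulL 14;
  SRelabel 15 5 [1;2;3;4;0];
  SRelabel 8 5 [0;1;2;4;3];
  STrans 16 17;
  SMulR 2;
  SRelabel 19 5 [0;2;1;3;4];
  STrans 4 20;
  SRelabel 21 5 [0;1;4;2;3];
  STrans 18 22;
  SRelabel 23 5 [0;2;3;1;4];
  STrans 10 24], [SStar 0;
  SRelabel 1 5 [4;3;2;1;0];
  SRelabel 2 4 [0;1;1;2;3];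
  SContr 3 1 1 1;
  SRelabel 4 3 [0;0;1;2];
  SMulR 5;
  SRelabel 6 3 [0;1;2;2];
  SRelabel 5 3 [2;0;2];
  SMulL 8;
  SRelabel 9 3 [0;1;2;1];
  STrans 7 10;
  SContr 11 2 2 2;
  SRelabel 12 2 [0;1;0]], []);
([4;0;3;1;2], 1, [SMulR 0;
  SMulL 1;
  SRelabel 2 4 [1;2;3;0];
  SMulL 3;
  SRelabel 4 5 [1;2;3;4;0];
  SMulR 1;
  SMulL 6;
  SRelabel 7 5 [1;2;3;4;0];
  SRelabel 8 5 [0;1;3;2;4];
  STrans 5 9;
  SMulL 0;
  SRelabel 11 3 [1;2;0];
  SMulL 12;
  SRelabel 13 4 [1;2;3;0];
  SMulL 14;
  SRelabel 15 5 [1;2;3;4;0];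
  SRelabel 5 5 [0;1;2;4;3];
  STrans 16 17;
  SMulR 6;
  SRelabel 19 5 [0;2;1;3;4];
  STrans 8 20;
  SRelabel 21 5 [0;1;4;2;3];
  STrans 18 22;
  SRelabel 23 5 [0;3;1;2;4];
  STrans 10 24], [SRelabel 0 5 [4;0;3;1;2];
  STrans 0 1;
  SRelabel 2 4 [0;0;1;2;3];
  SContr 3 0 0 2;
  SRelabel 4 3 [0;0;1;2];
  SMulL 5;
  SRelabel 6 4 [1;2;3;0];
  SRelabel 7 3 [0;0;1;2];
  SContr 8 0 0 0;
  SRelabel 9 2 [0;0;1]], []);
([4;0;3;2;1], 1, [SMulR 0;
  SMulR 1;
  SMulL 2;
  SRelabel 3 5 [1;2;3;4;0];
  SMulL 1;
  SRelabel 5 4 [1;2;3;0];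
  SMulL 6;
  SRelabel 7 5 [1;2;3;4;0];
  SRelabel 4 5 [0;1;3;2;4];
  STrans 8 9;
  SRelabel 10 5 [0;2;1;3;4];
  STrans 4 11;
  SMulL 0;
  SRelabel 13 3 [1;2;0];
  SMulL 14;
  SRelabel 15 4 [1;2;3;0];
  SMulL 16;
  SRelabel 17 5 [1;2;3;4;0];
  SRelabel 8 5 [0;1;2;4;3];
  STrans 18 19;
  SMulR 2;
  SRelabel 21 5 [0;2;1;3;4];
  STrans 4 22;
  SRelabel 23 5 [0;1;4;2;3];
  STrans 20 24;
  SRelabel 25 5 [0;3;2;1;4];
  STrans 12 26], [SStar 0;
  SRelabel 1 5 [4;3;2;1;0];
  SRelabel 2 4 [0;1;2;2;3];
  SContr 3 2 2 0;
  SRelabel 4 3 [0;1;0;2];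
  SMulR 5;
  SRelabel 6 3 [0;1;2;2];
  SRelabel 5 3 [2;0;2];
  SMulL 8;
  SRelabel 9 3 [0;1;2;1];
  STrans 7 10;
  SContr 11 2 2 2;
  SRelabel 12 2 [0;1;0]], []);
([4;1;0;2;3], 1, [SMulR 0;
  SMulR 1;
  SMulR 2;
  SMulL 0;
  SRelabel 4 3 [1;2;0];
  SMulL 5;
  SRelabel 6 4 [1;2;3;0];
  SMulL 7;
  SRelabel 8 5 [1;2;3;4;0];
  SMulL 1;
  SRelabel 10 4 [1;2;3;0];
  SMulL 11;
  SRelabel 12 5 [1;2;3;4;0];
  SRelabel 13 5 [0;1;2;4;3];
  STrans 9 14;
  SMulL 2;
  SRelabel 16 5 [1;2;3;4;0];
  SRelabel 3 5 [0;2;1;3;4];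
  STrans 17 18;
  SRelabel 19 5 [0;1;4;2;3];
  STrans 15 20;
  SRelabel 21 5 [1;0;2;3;4];
  STrans 3 22], [SRelabel 0 4 [0;0;1;2;3];
  SContr 1 0 0 1;
  SRelabel 2 3 [0;0;1;2];
  SRelabel 0 4 [0;1;2;2;3];
  SContr 4 2 2 3;
  SRelabel 5 3 [0;1;0;2];
  SRelabel 6 3 [2;0;1];
  STrans 3 7;
  SMulR 8;
  SRelabel 9 3 [0;1;2;2];
  SContr 10 2 2 2;
  SRelabel 11 2 [0;1;0]], []);
([4;1;0;3;2], 2, [SMulR 0;
  SMulR 1;
  SMulR 2;
  SMulL 1;
  SRelabel 4 4 [1;2;3;0];
  SMulL 5;
  SRelabel 6 5 [1;2;3;4;0];
  SRelabel 7 5 [1;0;2;3;4];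
  STrans 3 8;
  SMulL 0;
  SRelabel 10 3 [1;2;0];
  SMulL 11;
  SRelabel 12 4 [1;2;3;0];
  SMulL 13;
  SRelabel 14 5 [1;2;3;4;0];
  SRelabel 7 5 [0;1;2;4;3];
  STrans 15 16;
  SMulL 2;
  SRelabel 18 5 [1;2;3;4;0];
  SRelabel 3 5 [0;2;1;3;4];
  STrans 19 20;
  SRelabel 21 5 [0;1;4;2;3];
  STrans 17 22;
  SRelabel 23 5 [1;0;3;2;4];
  STrans 9 24], [SRelabel 0 4 [0;0;1;2;3];
  SContr 1 0 0 1;
  SRelabel 2 3 [0;0;1;2]], [SMulL 0;
  SRelabel 1 4 [1;2;3;0];
  SMulL 2;
  SRelabel 3 5 [1;2;3;4;0];
  SMulR 0;
  SMulR 5;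
  SRelabel 6 5 [0;1;4;3;2];
  STrans 4 7]);
([4;1;2;0;3], 1, [SMulR 0;
  SMulR 1;
  SMulR 2;
  SMulL 2;
  SRelabel 4 5 [1;2;3;4;0];
  SRelabel 5 5 [1;0;2;3;4];
  STrans 3 6;
  SMulL 0;
  SRelabel 8 3 [1;2;0];
  SMulL 9;
  SRelabel 10 4 [1;2;3;0];
  SMulL 11;
  SRelabel 12 5 [1;2;3;4;0];
  SMulL 1;
  SRelabel 14 4 [1;2;3;0];
  SMulL 15;
  SRelabel 16 5 [1;2;3;4;0];
  SRelabel 17 5 [0;1;2;4;3];
  STrans 13 18;
  SRelabel 3 5 [0;2;1;3;4];
  STrans 5 20;
  SRelabel 21 5 [0;1;4;2;3];
  STrans 19 22;
  SRelabel 23 5 [1;2;0;3;4];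
  STrans 7 24], [SStar 0;
  SRelabel 1 5 [4;3;2;1;0];
  SRelabel 2 4 [0;1;2;2;3];
  SContr 3 2 2 2;
  SRelabel 4 3 [0;1;0;2];
  SMulR 5;
  SRelabel 6 3 [0;1;2;2];
  SRelabel 5 3 [2;0;2];
  SMulL 8;
  SRelabel 9 3 [0;1;2;1];
  STrans 7 10;
  SContr 11 2 2 2;
  SRelabel 12 2 [0;1;0]], []);
([4;1;2;3;0], 2, [SMulR 0;
  SMulR 1;
  SMulR 2;
  SMulL 2;
  SRelabel 4 5 [1;2;3;4;0];
  SMulL 1;
  SRelabel 6 4 [1;2;3;0];
  SMulL 7;
  SRelabel 8 5 [1;2;3;4;0];
  SRelabel 9 5 [0;2;1;3;4];
  STrans 5 10;
  SRelabel 11 5 [1;0;2;3;4];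
  STrans 3 12;
  SMulL 0;
  SRelabel 14 3 [1;2;0];
  SMulL 15;
  SRelabel 16 4 [1;2;3;0];
  SMulL 17;
  SRelabel 18 5 [1;2;3;4;0];
  SRelabel 9 5 [0;1;2;4;3];
  STrans 19 20;
  SRelabel 3 5 [0;2;1;3;4];
  STrans 5 22;
  SRelabel 23 5 [0;1;4;2;3];
  STrans 21 24;
  SRelabel 25 5 [1;2;3;0;4];
  STrans 13 26], [SRelabel 0 4 [0;1;1;2;3];
  SContr 1 1 1 1;
  SRelabel 2 3 [0;0;1;2]], [SMulR 0;
  SMulR 1;
  SMulL 0;
  SRelabel 3 4 [1;2;3;0];
  SMulL 4;
  SRelabel 5 5 [1;2;3;4;0];
  SRelabel 2 5 [0;1;4;3;2];
  STrans 6 7;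
  SRelabel 8 5 [2;1;0;3;4];
  STrans 2 9]);
([4;1;3;0;2], 1, [SMulR 0;
  SMulR 1;
  SMulR 2;
  SMulL 1;
  SRelabel 4 4 [1;2;3;0];
  SMulL 5;
  SRelabel 6 5 [1;2;3;4;0];
  SMulL 2;
  SRelabel 8 5 [1;2;3;4;0];
  SRelabel 9 5 [0;1;3;2;4];
  STrans 7 10;
  SRelabel 11 5 [1;0;2;3;4];
  STrans 3 12;
  SMulL 0;
  SRelabel 14 3 [1;2;0];
  SMulL 15;
  SRelabel 16 4 [1;2;3;0];
  SMulL 17;
  SRelabel 18 5 [1;2;3;4;0];
  SRelabel 7 5 [0;1;2;4;3];
  STrans 19 20;
  SRelabel 3 5 [0;2;1;3;4];
  STrans 9 22;
  SRelabel 23 5 [0;1;4;2;3];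
  STrans 21 24;
  SRelabel 25 5 [1;3;0;2;4];
  STrans 13 26], [SRelabel 0 5 [4;1;3;0;2];
  STrans 0 1;
  SRelabel 2 4 [0;1;1;2;3];
  SContr 3 1 1 0;
  SRelabel 4 3 [0;0;1;2];
  SMulL 5;
  SRelabel 6 4 [1;2;3;0];
  SRelabel 7 3 [0;0;1;2];
  SContr 8 0 0 0;
  SRelabel 9 2 [0;0;1]], []);
([4;1;3;2;0], 1, [SMulR 0;
  SMulR 1;
  SMulR 2;
  SMulL 2;
  SRelabel 4 5 [1;2;3;4;0];
  SRelabel 5 5 [1;0;2;3;4];
  STrans 3 6;
  SMulL 1;
  SRelabel 8 4 [1;2;3;0];
  SMulL 9;
  SRelabel 10 5 [1;2;3;4;0];
  SRelabel 5 5 [0;1;3;2;4];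
  STrans 11 12;
  SRelabel 13 5 [1;2;0;3;4];
  STrans 7 14;
  SMulL 0;
  SRelabel 16 3 [1;2;0];
  SMulL 17;
  SRelabel 18 4 [1;2;3;0];
  SMulL 19;
  SRelabel 20 5 [1;2;3;4;0];
  SRelabel 11 5 [0;1;2;4;3];
  STrans 21 22;
  SRelabel 3 5 [0;2;1;3;4];
  STrans 5 24;
  SRelabel 25 5 [0;1;4;2;3];
  STrans 23 26;
  SRelabel 27 5 [1;3;2;0;4];
  STrans 15 28], [SRelabel 0 4 [0;1;2;2;3];
  SContr 1 2 2 2;
  SRelabel 2 3 [0;1;0;2];
  SMulR 3;
  SStar 0;
  SRelabel 5 5 [4;3;2;1;0];
  SRelabel 6 5 [4;1;3;2;0];
  STrans 0 7;
  SMulR 8;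
  SRelabel 9 5 [0;1;2;3;4;4];
  SContr 10 4 4 4;
  SRelabel 11 4 [0;1;2;3;0];
  SRelabel 12 4 [2;1;0;3];
  STrans 4 13;
  SRelabel 14 3 [0;1;2;2];
  SContr 15 2 2 0;
  SRelabel 16 2 [0;1;0]], []);
([4;2;0;1;3], 1, [SMulR 0;
  SMulR 1;
  SMulL 2;
  SRelabel 3 5 [1;2;3;4;0];
  SMulR 2;
  SRelabel 5 5 [0;2;1;3;4];
  STrans 4 6;
  SMulL 0;
  SRelabel 8 3 [1;2;0];
  SMulL 9;
  SRelabel 10 4 [1;2;3;0];
  SMulL 11;
  SRelabel 12 5 [1;2;3;4;0];
  SMulL 1;
  SRelabel 14 4 [1;2;3;0];
  SMulL 15;
  SRelabel 16 5 [1;2;3;4;0];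
  SRelabel 17 5 [0;1;2;4;3];
  STrans 13 18;
  SRelabel 7 5 [0;1;4;2;3];
  STrans 19 20;
  SRelabel 21 5 [2;0;1;3;4];
  STrans 7 22], [SRelabel 0 5 [4;2;0;1;3];
  STrans 0 1;
  SRelabel 2 4 [0;1;1;2;3];
  SContr 3 1 1 3;
  SRelabel 4 3 [0;0;1;2];
  SMulR 5;
  SRelabel 6 3 [0;1;2;2];
  SContr 7 2 2 2;
  SRelabel 8 2 [0;1;0]], []);
([4;2;0;3;1], 1, [SMulR 0;
  SMulR 1;
  SMulL 2;
  SRelabel 3 5 [1;2;3;4;0];
  SMulR 2;
  SMulL 1;
  SRelabel 6 4 [1;2;3;0];
  SMulL 7;
  SRelabel 8 5 [1;2;3;4;0];
  SRelabel 9 5 [1;0;2;3;4];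
  STrans 5 10;
  SRelabel 11 5 [0;2;1;3;4];
  STrans 4 12;
  SMulL 0;
  SRelabel 14 3 [1;2;0];
  SMulL 15;
  SRelabel 16 4 [1;2;3;0];
  SMulL 17;
  SRelabel 18 5 [1;2;3;4;0];
  SRelabel 9 5 [0;1;2;4;3];
  STrans 19 20;
  SRelabel 5 5 [0;2;1;3;4];
  STrans 4 22;
  SRelabel 23 5 [0;1;4;2;3];
  STrans 21 24;
  SRelabel 25 5 [2;0;3;1;4];
  STrans 13 26], [SRelabel 0 5 [4;2;0;3;1];
  STrans 0 1;
  SRelabel 2 4 [0;1;2;3;3];
  SContr 3 3 3 2;
  SRelabel 4 3 [0;1;2;0];
  SMulR 5;
  SRelabel 6 3 [0;1;2;2];
  SContr 7 2 2 2;
  SRelabel 8 2 [0;1;0]], []);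
([4;2;1;0;3], 1, [SMulR 0;
  SMulR 1;
  SMulR 2;
  SMulL 2;
  SRelabel 4 5 [1;2;3;4;0];
  SRelabel 3 5 [0;2;1;3;4];
  STrans 5 6;
  SRelabel 7 5 [1;0;2;3;4];
  STrans 3 8;
  SMulL 0;
  SRelabel 10 3 [1;2;0];
  SMulL 11;
  SRelabel 12 4 [1;2;3;0];
  SMulL 13;
  SRelabel 14 5 [1;2;3;4;0];
  SMulL 1;
  SRelabel 16 4 [1;2;3;0];
  SMulL 17;
  SRelabel 18 5 [1;2;3;4;0];
  SRelabel 19 5 [0;1;2;4;3];
  STrans 15 20;
  SRelabel 7 5 [0;1;4;2;3];
  STrans 21 22;
  SRelabel 23 5 [2;1;0;3;4];
  STrans 9 24], [SStar 0;
  SRelabel 1 5 [4;3;2;1;0];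
  SRelabel 2 4 [0;1;2;3;3];
  SContr 3 3 3 1;
  SRelabel 4 3 [0;1;2;0];
  SMulR 5;
  SRelabel 6 3 [0;1;2;2];
  SRelabel 5 3 [2;0;2];
  SMulL 8;
  SRelabel 9 3 [0;1;2;1];
  STrans 7 10;
  SContr 11 2 2 2;
  SRelabel 12 2 [0;1;0]], []);
([4;2;1;3;0], 1, [SMulR 0;
  SMulR 1;
  SMulR 2;
  SMulL 2;
  SRelabel 4 5 [1;2;3;4;0];
  SRelabel 5 5 [1;0;2;3;4];
  STrans 3 6;
  SMulL 1;
  SRelabel 8 4 [1;2;3;0];
  SMulL 9;
  SRelabel 10 5 [1;2;3;4;0];
  SRelabel 11 5 [1;0;2;3;4];
  STrans 3 12;
  SRelabel 13 5 [1;2;0;3;4];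
  STrans 7 14;
  SMulL 0;
  SRelabel 16 3 [1;2;0];
  SMulL 17;
  SRelabel 18 4 [1;2;3;0];
  SMulL 19;
  SRelabel 20 5 [1;2;3;4;0];
  SRelabel 11 5 [0;1;2;4;3];
  STrans 21 22;
  SRelabel 3 5 [0;2;1;3;4];
  STrans 5 24;
  SRelabel 25 5 [0;1;4;2;3];
  STrans 23 26;
  SRelabel 27 5 [2;1;3;0;4];
  STrans 15 28], [SRelabel 0 4 [0;1;1;2;3];
  SContr 1 1 1 1;
  SRelabel 2 3 [0;0;1;2];
  SMulR 3;
  SStar 0;
  SRelabel 5 5 [4;3;2;1;0];
  SRelabel 6 5 [4;2;1;3;0];
  STrans 0 7;
  SMulL 8;
  SRelabel 9 6 [1;2;3;4;5;0];
  SRelabel 10 5 [0;0;1;2;3;4];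
  SContr 11 0 0 0;
  SRelabel 12 4 [0;0;1;2;3];
  SRelabel 13 4 [2;1;0;3];
  STrans 4 14;
  SRelabel 15 3 [0;1;2;2];
  SContr 16 2 2 2;
  SRelabel 17 2 [0;1;0]], []);
([4;2;3;0;1], 1, [SMulR 0;
  SMulR 1;
  SMulL 2;
  SRelabel 3 5 [1;2;3;4;0];
  SMulR 2;
  SRelabel 5 5 [0;2;1;3;4];
  STrans 4 6;
  SMulL 1;
  SRelabel 8 4 [1;2;3;0];
  SMulL 9;
  SRelabel 10 5 [1;2;3;4;0];
  SRelabel 4 5 [0;1;3;2;4];
  STrans 11 12;
  SRelabel 13 5 [2;0;1;3;4];
  STrans 7 14;
  SMulL 0;
  SRelabel 16 3 [1;2;0];
  SMulL 17;
  SRelabel 18 4 [1;2;3;0];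
  SMulL 19;
  SRelabel 20 5 [1;2;3;4;0];
  SRelabel 11 5 [0;1;2;4;3];
  STrans 21 22;
  SRelabel 7 5 [0;1;4;2;3];
  STrans 23 24;
  SRelabel 25 5 [2;3;0;1;4];
  STrans 15 26], [SStar 0;
  SRelabel 1 5 [4;3;2;1;0];
  SRelabel 2 4 [0;1;2;3;3];
  SContr 3 3 3 0;
  SRelabel 4 3 [0;1;2;0];
  SMulR 5;
  SRelabel 6 3 [0;1;2;2];
  SRelabel 5 3 [2;0;2];
  SMulL 8;
  SRelabel 9 3 [0;1;2;1];
  STrans 7 10;
  SContr 11 2 2 2;
  SRelabel 12 2 [0;1;0]], []);
([4;2;3;1;0], 1, [SMulR 0;
  SMulR 1;
  SMulR 2;
  SMulL 2;
  SRelabel 4 5 [1;2;3;4;0];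
  SRelabel 3 5 [0;2;1;3;4];
  STrans 5 6;
  SMulL 1;
  SRelabel 8 4 [1;2;3;0];
  SMulL 9;
  SRelabel 10 5 [1;2;3;4;0];
  SRelabel 5 5 [0;1;3;2;4];
  STrans 11 12;
  SRelabel 13 5 [2;0;1;3;4];
  STrans 7 14;
  SMulL 0;
  SRelabel 16 3 [1;2;0];
  SMulL 17;
  SRelabel 18 4 [1;2;3;0];
  SMulL 19;
  SRelabel 20 5 [1;2;3;4;0];
  SRelabel 11 5 [0;1;2;4;3];
  STrans 21 22;
  SRelabel 7 5 [0;1;4;2;3];
  STrans 23 24;
  SRelabel 25 5 [2;3;0;1;4];
  STrans 15 26;
  SRelabel 27 5 [1;0;2;3;4];
  STrans 3 28], [SRelabel 0 4 [0;1;2;2;3];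
  SContr 1 2 2 1;
  SRelabel 2 3 [0;1;0;2];
  SRelabel 0 4 [0;0;1;2;3];
  SContr 4 0 0 3;
  SRelabel 5 3 [0;0;1;2];
  SRelabel 6 3 [2;1;0];
  STrans 3 7;
  SMulL 8;
  SRelabel 9 4 [1;2;3;0];
  SRelabel 10 3 [0;0;1;2];
  SContr 11 0 0 0;
  SRelabel 12 2 [0;0;1]], []);
([4;3;0;1;2], 2, [SMulR 0;
  SMulL 1;
  SRelabel 2 4 [1;2;3;0];
  SMulL 3;
  SRelabel 4 5 [1;2;3;4;0];
  SMulR 1;
  SMulL 6;
  SRelabel 7 5 [1;2;3;4;0];
  SMulR 6;
  SRelabel 9 5 [0;2;1;3;4];
  STrans 8 10;
  SRelabel 11 5 [0;1;3;2;4];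
  STrans 5 12;
  SMulL 0;
  SRelabel 14 3 [1;2;0];
  SMulL 15;
  SRelabel 16 4 [1;2;3;0];
  SMulL 17;
  SRelabel 18 5 [1;2;3;4;0];
  SRelabel 5 5 [0;1;2;4;3];
  STrans 19 20;
  SRelabel 11 5 [0;1;4;2;3];
  STrans 21 22;
  SRelabel 23 5 [3;0;1;2;4];
  STrans 13 24], [SRelabel 0 4 [0;0;1;2;3];
  SContr 1 0 0 2;
  SRelabel 2 3 [0;0;1;2]], [SMulR 0;
  SMulL 1;
  SRelabel 2 5 [1;2;3;4;0];
  SMulL 0;
  SRelabel 4 4 [1;2;3;0];
  SMulL 5;
  SRelabel 6 5 [1;2;3;4;0];
  SMulR 1;
  SRelabel 8 5 [0;1;4;3;2];
  STrans 7 9;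
  SRelabel 10 5 [0;3;2;1;4];
  STrans 3 11]);
([4;3;0;2;1], 1, [SMulR 0;
  SMulR 1;
  SMulL 2;
  SRelabel 3 5 [1;2;3;4;0];
  SMulL 1;
  SRelabel 5 4 [1;2;3;0];
  SMulL 6;
  SRelabel 7 5 [1;2;3;4;0];
  SRelabel 8 5 [0;2;1;3;4];
  STrans 4 9;
  SMulR 2;
  SRelabel 11 5 [0;2;1;3;4];
  STrans 4 12;
  SRelabel 13 5 [0;2;3;1;4];
  STrans 10 14;
  SMulL 0;
  SRelabel 16 3 [1;2;0];
  SMulL 17;
  SRelabel 18 4 [1;2;3;0];
  SMulL 19;
  SRelabel 20 5 [1;2;3;4;0];
  SRelabel 8 5 [0;1;2;4;3];
  STrans 21 22;
  SRelabel 13 5 [0;1;4;2;3];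
  STrans 23 24;
  SRelabel 25 5 [3;0;2;1;4];
  STrans 15 26], [SRelabel 0 4 [0;1;2;3;3];
  SContr 1 3 3 0;
  SRelabel 2 3 [0;1;2;0];
  SMulL 3;
  SRelabel 4 4 [1;2;3;0];
  SRelabel 5 3 [0;0;1;2];
  SContr 6 0 0 0;
  SRelabel 7 2 [0;0;1]], []);
([4;3;1;0;2], 1, [SMulR 0;
  SMulR 1;
  SMulR 2;
  SMulL 1;
  SRelabel 4 4 [1;2;3;0];
  SMulL 5;
  SRelabel 6 5 [1;2;3;4;0];
  SRelabel 7 5 [1;0;2;3;4];
  STrans 3 8;
  SMulL 2;
  SRelabel 10 5 [1;2;3;4;0];
  SRelabel 3 5 [0;2;1;3;4];
  STrans 11 12;
  SRelabel 13 5 [1;0;3;2;4];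
  STrans 9 14;
  SMulL 0;
  SRelabel 16 3 [1;2;0];
  SMulL 17;
  SRelabel 18 4 [1;2;3;0];
  SMulL 19;
  SRelabel 20 5 [1;2;3;4;0];
  SRelabel 7 5 [0;1;2;4;3];
  STrans 21 22;
  SRelabel 13 5 [0;1;4;2;3];
  STrans 23 24;
  SRelabel 25 5 [3;1;0;2;4];
  STrans 15 26], [SRelabel 0 4 [0;1;2;3;3];
  SContr 1 3 3 0;
  SRelabel 2 3 [0;1;2;0];
  SMulR 3;
  SRelabel 4 3 [0;1;2;2];
  SContr 5 2 2 2;
  SRelabel 6 2 [0;1;0]], []);
([4;3;1;2;0], 1, [SMulR 0;
  SMulR 1;
  SMulR 2;
  SMulL 2;
  SRelabel 4 5 [1;2;3;4;0];
  SMulL 1;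
  SRelabel 6 4 [1;2;3;0];
  SMulL 7;
  SRelabel 8 5 [1;2;3;4;0];
  SRelabel 9 5 [0;2;1;3;4];
  STrans 5 10;
  SRelabel 3 5 [0;2;1;3;4];
  STrans 5 12;
  SRelabel 13 5 [0;2;3;1;4];
  STrans 11 14;
  SMulL 0;
  SRelabel 16 3 [1;2;0];
  SMulL 17;
  SRelabel 18 4 [1;2;3;0];
  SMulL 19;
  SRelabel 20 5 [1;2;3;4;0];
  SRelabel 9 5 [0;1;2;4;3];
  STrans 21 22;
  SRelabel 13 5 [0;1;4;2;3];
  STrans 23 24;
  SRelabel 25 5 [3;0;2;1;4];
  STrans 15 26;
  SRelabel 27 5 [1;0;2;3;4];
  STrans 3 28], [SRelabel 0 4 [0;1;2;3;3];
  SContr 1 3 3 0;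
  SRelabel 2 3 [0;1;2;0];
  SMulR 3;
  SRelabel 4 3 [0;1;2;2];
  SRelabel 3 3 [2;0;2];
  SMulL 6;
  SRelabel 7 3 [0;1;2;1];
  STrans 5 8;
  SContr 9 2 2 2;
  SRelabel 10 2 [0;1;0]], []);
([4;3;2;0;1], 1, [SMulR 0;
  SMulR 1;
  SMulL 2;
  SRelabel 3 5 [1;2;3;4;0];
  SMulR 2;
  SMulL 1;
  SRelabel 6 4 [1;2;3;0];
  SMulL 7;
  SRelabel 8 5 [1;2;3;4;0];
  SRelabel 9 5 [1;0;2;3;4];
  STrans 5 10;
  SRelabel 5 5 [0;2;1;3;4];
  STrans 4 12;
  SRelabel 13 5 [1;0;3;2;4];
  STrans 11 14;
  SMulL 0;
  SRelabel 16 3 [1;2;0];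
  SMulL 17;
  SRelabel 18 4 [1;2;3;0];
  SMulL 19;
  SRelabel 20 5 [1;2;3;4;0];
  SRelabel 9 5 [0;1;2;4;3];
  STrans 21 22;
  SRelabel 13 5 [0;1;4;2;3];
  STrans 23 24;
  SRelabel 25 5 [3;1;0;2;4];
  STrans 15 26;
  SRelabel 27 5 [0;2;1;3;4];
  STrans 4 28], [SRelabel 0 4 [0;1;2;3;3];
  SContr 1 3 3 0;
  SRelabel 2 3 [0;1;2;0];
  SRelabel 0 4 [0;0;1;2;3];
  SContr 4 0 0 3;
  SRelabel 5 3 [0;0;1;2];
  SRelabel 6 3 [2;0;1];
  STrans 3 7;
  SMulR 8;
  SRelabel 9 3 [0;1;2;2];
  SContr 10 2 2 2;
  SRelabel 11 2 [0;1;0]], []);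
([4;3;2;1;0], 2, [SMulR 0;
  SMulR 1;
  SMulR 2;
  SMulL 2;
  SRelabel 4 5 [1;2;3;4;0];
  SRelabel 5 5 [1;0;2;3;4];
  STrans 3 6;
  SMulL 1;
  SRelabel 8 4 [1;2;3;0];
  SMulL 9;
  SRelabel 10 5 [1;2;3;4;0];
  SRelabel 11 5 [1;0;2;3;4];
  STrans 3 12;
  SRelabel 3 5 [0;2;1;3;4];
  STrans 5 14;
  SRelabel 15 5 [1;0;3;2;4];
  STrans 13 16;
  SMulL 0;
  SRelabel 18 3 [1;2;0];
  SMulL 19;
  SRelabel 20 4 [1;2;3;0];
  SMulL 21;
  SRelabel 22 5 [1;2;3;4;0];
  SRelabel 11 5 [0;1;2;4;3];
  STrans 23 24;
  SRelabel 15 5 [0;1;4;2;3];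
  STrans 25 26;
  SRelabel 27 5 [3;1;0;2;4];
  STrans 17 28;
  SRelabel 29 5 [1;2;0;3;4];
  STrans 7 30], [SRelabel 0 4 [0;1;2;3;3];
  SContr 1 3 3 0;
  SRelabel 2 3 [0;1;2;0]], [SMulR 0;
  SMulR 1;
  SMulL 1;
  SRelabel 3 5 [1;2;3;4;0];
  SRelabel 4 5 [2;1;0;3;4];
  STrans 2 5;
  SMulL 0;
  SRelabel 7 4 [1;2;3;0];
  SMulL 8;
  SRelabel 9 5 [1;2;3;4;0];
  SRelabel 2 5 [0;1;4;3;2];
  STrans 10 11;
  SRelabel 12 5 [2;3;0;1;4];
  STrans 6 13])].
Definition entry_ok (e : list nat * nat * list step * list step * list step) : bool :=
  match e with (p, c, ca, cb, cc) =>
    cert_ok [FC] (Fperm p) ca &&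
    match c with
    | 0 => leqb p (seq 0 (length p)) && cert_ok [] (Fperm p) cb
    | 1 => cert_ok [Fperm p] FC cb
    | _ => cert_ok [Fperm p] FH cb && cert_ok [FH] (Fperm p) cc
    end end.
Definition lookup (l : list nat) :=
  find (fun e : list nat * nat * list step * list step * list step =>
          match e with (p, _, _, _, _) => leqb p l end) table.
Definition big_check : bool :=
  cert_ok [FC] FH certCH &&
  forallb (fun k => forallb (fun l => negb (nodupb l) ||
      match lookup l with Some e => entry_ok e | None => false end) (allf k k)) [1;2;3;4;5].
Lemma big_check_ok : big_check = true.
Proof. vm_compute. reflexivity. Qed.
Lemma allf_complete m : forall l, (forall v, In v l -> v < m) -> In l (allf m (length l)).
Proof.
  induction l as [|a l IH]; intro H; simpl. left; reflexivity.
  apply in_flat_map. exists a. split. apply in_seq. specialize (H a (or_introl eq_refl)). lia.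
  apply in_map. apply IH. intros; apply H; right; auto.
Qed.
Lemma inbn_false' v l : ~ In v l -> inbn v l = false.
Proof.
  intro H. destruct (inbn v l) eqn:E; auto. unfold inbn in E. apply existsb_exists in E as [w [Hw E]].
  apply Nat.eqb_eq in E. subst. contradiction.
Qed.
Lemma nodupb_NoDup l : NoDup l -> nodupb l = true.
Proof.
  induction 1; simpl; auto. rewrite inbn_false', IHNoDup; auto.
Qed.
Lemma NoDup_map_inj (s : nat -> nat) : forall l, NoDup l ->
  (forall a b, In a l -> In b l -> s a = s b -> a = b) -> NoDup (map s l).
Proof.
  induction l as [|a l IH]; intros Hn Hi; simpl. constructor.
  inversion Hn; subst. constructor.
  - intro Hin. apply in_map_iff in Hin as [b [Hb Hbl]].
    assert (b = a) by (apply Hi; simpl; auto). subst; contradiction.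
  - apply IH; auto. intros; apply Hi; simpl; auto.
Qed.
Lemma length_ms (s : nat -> nat) k : length (map s (seq 0 k)) = k.
Proof. rewrite length_map, length_seq. reflexivity. Qed.

Lemma FC_FH N A x b : sphere_pt N A x -> Holds N A x b FC -> Holds N A x b FH.
Proof.
  intros Hs H. apply (cert_sound N A x b Hs [FC] FH certCH).
  constructor; auto.
  pose proof big_check_ok as B. unfold big_check in B. apply andb_true_iff in B. tauto.
Qed.

Lemma classify N k s : 1 <= k <= 5 -> is_perm k s ->
  (map s (seq 0 k) = seq 0 k /\
     forall A x b, sphere_pt N A x -> Holds N A x b (Fperm (map s (seq 0 k)))) \/
  (forall A x b, sphere_pt N A x -> (Holds N A x b (Fperm (map s (seq 0 k))) <-> Holds N A x b FC)) \/
  (forall A x b, sphere_pt N A x -> (Holds N A x b (Fperm (map s (seq 0 k))) <-> Holds N A x b FH)).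
Proof.
  intros Hk [Hr Hinj].
  set (p := map s (seq 0 k)).
  assert (Hin : In p (allf k k)).
  { rewrite <- (length_ms s k) at 2. apply allf_complete. intros v Hv.
    apply in_map_iff in Hv as [r [<- Hr']]. apply in_seq in Hr'. apply Hr. lia. }
  assert (Hnd : nodupb p = true).
  { apply nodupb_NoDup, NoDup_map_inj. apply seq_NoDup.
    intros a b Ha Hb. apply in_seq in Ha, Hb. apply Hinj; lia. }
  pose proof big_check_ok as B. unfold big_check in B. apply andb_true_iff in B as [_ B].
  rewrite forallb_forall in B. assert (Hk' : In k [1;2;3;4;5]) by (simpl; lia).
  specialize (B k Hk'). rewrite forallb_forall in B. specialize (B p Hin).
  rewrite Hnd in B. simpl in B.
  destruct (lookup p) as [e|] eqn:El; [|discriminate].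
  unfold lookup in El. apply find_some in El as [_ Ep].
  destruct e as [[[[p' c] ca] cb] cc]. apply leqb_eq in Ep. subst p'.
  unfold entry_ok in B. apply andb_true_iff in B as [Ha B].
  assert (HC : forall A x b, sphere_pt N A x -> Holds N A x b FC -> Holds N A x b (Fperm p)).
  { intros A x b Hs H. apply (cert_sound N A x b Hs [FC] _ ca); auto. }
  destruct c as [|[|c]].
  - left. apply andb_true_iff in B as [Hp Hc]. apply leqb_eq in Hp.
    split. rewrite Hp. unfold p. rewrite (length_ms s k). reflexivity.
    intros A x b Hs. apply (cert_sound N A x b Hs [] _ cb); auto.
  - right; left. intros A x b Hs. split; auto.
    intro H. apply (cert_sound N A x b Hs [Fperm p] _ cb); auto.
  - right; right. apply andb_true_iff in B as [Hb Hc]. intros A x b Hs. split.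
    + intro H. apply (cert_sound N A x b Hs [Fperm p] _ cb); auto.
    + intro H. apply (cert_sound N A x b Hs [FH] _ cc); auto.
Qed.

Lemma R_link N k s A x : R_sigma N k s A x <-> Holds N A x false (Fperm (map s (seq 0 k))).
Proof.
  unfold Holds, Fperm, R_sigma, indices_ok. rewrite length_ms. simpl.
  unfold Wd. split; intros H i Hi; specialize (H i Hi); rewrite ?map_map in *; exact H.
Qed.
Lemma len_filter_map {T U} (f : U -> bool) (h : T -> U) l :
  length (filter f (map h l)) = length (filter (fun a => f (h a)) l).
Proof. induction l; simpl; auto. destruct (f (h a)); simpl; auto. Qed.
Lemma len_filter_filter {T} (f g : T -> bool) l :
  length (filter f (filter g l)) = length (filter (fun a => g a && f a) l).
Proof. induction l; simpl; auto. destruct (g a); simpl; auto. destruct (f a); simpl; auto. Qed.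
Lemma nth_ms (s : nat -> nat) k r : r < k -> nth r (map s (seq 0 k)) 0 = s r.
Proof.
  intro H. rewrite (nth_indep (map s (seq 0 k)) 0 (s 0)) by (rewrite length_ms; auto).
  rewrite map_nth, seq_nth; auto.
Qed.
Lemma Rbar_link N k s A x : Rbar_sigma N k s A x <-> Holds N A x true (Fperm (map s (seq 0 k))).
Proof.
  assert (Hsg : forall i, Nat.odd (inv_count k s i) = sg (Dinv (map s (seq 0 k))) i).
  { intro i. unfold sg, Dinv, inv_count. rewrite length_ms, len_filter_map, len_filter_filter.
    f_equal. f_equal. apply filter_ext_in. intros [a b] Hab. apply in_prod_iff in Hab as [Ha Hb].
    apply in_seq in Ha, Hb. simpl. rewrite !nth_ms by lia. unfold neqp; simpl. reflexivity. }
  unfold Holds, Fperm, Rbar_sigma, indices_ok. rewrite length_ms. simpl.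
  unfold Wd. split; intros H i Hi; specialize (H i Hi); rewrite ?map_map in *; rewrite ?Hsg in *; exact H.
Qed.
Lemma Wd2 A x a b : Wd A x [a; b] = cmul (x a) (x b).
Proof. unfold Wd, mprod; simpl. rewrite mul1r. reflexivity. Qed.
Lemma Wd3 A x a b c : Wd A x [a; b; c] = cmul (x a) (cmul (x b) (x c)).
Proof. unfold Wd, mprod; simpl. rewrite mul1r. reflexivity. Qed.
Definition f2 (a b : nat) : nat -> nat := fun t => if t =? 0 then a else b.
Definition f3 (a b c : nat) : nat -> nat := fun t => if t =? 0 then a else if t =? 1 then b else c.
Lemma f2_ok N a b : a < N -> b < N -> forall v, v < 2 -> f2 a b v < N.
Proof. intros. unfold f2. destruct (v =? 0); auto. Qed.
Lemma f3_ok N a b c : a < N -> b < N -> c < N -> forall v, v < 3 -> f3 a b c v < N.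
Proof. intros. unfold f3. destruct (v =? 0); auto. destruct (v =? 1); auto. Qed.

Lemma C_false N A x : classical N A x <-> Holds N A x false FC.
Proof.
  unfold FC, Fperm, Holds, classical. simpl map. split.
  - intros H i Hi. simpl. rewrite !Wd2. apply H; apply Hi; simpl; lia.
  - intros H i j Hi Hj. specialize (H (f2 i j) (f2_ok N i j Hi Hj)). simpl in H.
    rewrite !Wd2 in H. exact H.
Qed.
Lemma C_true N A x : anticomm N A x <-> Holds N A x true FC.
Proof.
  unfold FC, Fperm, Holds, anticomm. simpl map. split.
  - intros H i Hi. rewrite !Wd2. unfold sg, neqp; simpl.
    destruct (Nat.eqb_spec (i 1) (i 0)) as [E|E]; simpl.
    + rewrite E. reflexivity.
    + apply H; try (apply Hi; simpl; lia). congruence.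
  - intros H i j Hi Hj Hij. specialize (H (f2 i j) (f2_ok N i j Hi Hj)).
    rewrite !Wd2 in H. unfold sg, neqp in H; simpl in H. unfold f2 in H; simpl in H.
    destruct (Nat.eqb_spec j i); [congruence|]. exact H.
Qed.
Lemma H_false N A x : halflib N A x <-> Holds N A x false FH.
Proof.
  unfold FH, Fperm, Holds, halflib. simpl map. split.
  - intros H i Hi. simpl. rewrite !Wd3. apply H; apply Hi; simpl; lia.
  - intros H i j k Hi Hj Hk. specialize (H (f3 i j k) (f3_ok N i j k Hi Hj Hk)). simpl in H.
    rewrite !Wd3 in H. exact H.
Qed.
Lemma sign3 a b c : negb (a =? b) && negb (b =? c) && negb (a =? c) =
  xorb (negb (c =? b)) (xorb (negb (c =? a)) (xorb (negb (b =? a)) false)).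
Proof.
  destruct (Nat.eqb_spec a b); destruct (Nat.eqb_spec b c); destruct (Nat.eqb_spec a c);
  destruct (Nat.eqb_spec c b); destruct (Nat.eqb_spec c a); destruct (Nat.eqb_spec b a);
  simpl; try reflexivity; exfalso; lia.
Qed.
Lemma H_true N A x : halflib_bar N A x <-> Holds N A x true FH.
Proof.
  unfold FH, Fperm, Holds, halflib_bar. simpl map. split.
  - intros H i Hi. rewrite !Wd3. unfold sg; simpl. unfold neqp; simpl.
    rewrite H by (apply Hi; simpl; lia). f_equal. rewrite sign3.
    destruct (negb (i 2 =? i 1)), (negb (i 2 =? i 0)), (negb (i 1 =? i 0)); reflexivity.
  - intros H i j k Hi Hj Hk. specialize (H (f3 i j k) (f3_ok N i j k Hi Hj Hk)).
    rewrite !Wd3 in H. unfold sg, neqp in H; simpl in H. unfold f3 in H; simpl in H.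
    rewrite H. f_equal. rewrite sign3.
    destruct (negb (k =? j)), (negb (k =? i)), (negb (j =? i)); reflexivity.
Qed.
Definition SB (N : nat) (b : bool) (E : permset) : rels := fun A x =>
  forall k s, E k s -> Holds N A x b (Fperm (map s (seq 0 k))).
Definition peq (N : nat) (P Q : rels) : Prop :=
  forall A x, sphere_pt N A x -> (P A x <-> Q A x).

Lemma SB_class N b E (HE : forall k s, E k s -> (1 <= k <= 5)%nat /\ is_perm k s) :
  peq N (SB N b E) (fun A x => Holds N A x b FC) \/
  peq N (SB N b E) (fun A x => Holds N A x b FH) \/
  peq N (SB N b E) free_rels.
Proof.
  set (ClT := fun k s => forall A x b, sphere_pt N A x ->
        (Holds N A x b (Fperm (map s (seq 0 k))) <-> Holds N A x b FC)).
  set (HlT := fun k s => forall A x b, sphere_pt N A x ->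
        (Holds N A x b (Fperm (map s (seq 0 k))) <-> Holds N A x b FH)).
  destruct (classic (exists k s, E k s /\ ClT k s)) as [[k0 [s0 [E0 C0]]]|NC].
  - left. intros A x Hs. split.
    + intro H. apply (C0 A x b Hs). apply H, E0.
    + intros H k s Eks. destruct (HE k s Eks) as [Hk Hp].
      destruct (classify N k s Hk Hp) as [[_ Hi]|[Hc|Hh]].
      * apply Hi, Hs.
      * apply (Hc A x b Hs), H.
      * apply (Hh A x b Hs), FC_FH; auto.
  - destruct (classic (exists k s, E k s /\ HlT k s)) as [[k0 [s0 [E0 C0]]]|NH].
    + right; left. intros A x Hs. split.
      * intro H. apply (C0 A x b Hs). apply H, E0.
      * intros H k s Eks. destruct (HE k s Eks) as [Hk Hp].
        destruct (classify N k s Hk Hp) as [[_ Hi]|[Hc|Hh]].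
        -- apply Hi, Hs.
        -- exfalso. apply NC. exists k, s. split; auto.
        -- apply (Hh A x b Hs), H.
    + right; right. intros A x Hs. split; [intros; exact I|]. intros _ k s Eks.
      destruct (HE k s Eks) as [Hk Hp].
      destruct (classify N k s Hk Hp) as [[_ Hi]|[Hc|Hh]].
      * apply Hi, Hs.
      * exfalso. apply NC. exists k, s. split; auto.
      * exfalso. apply NH. exists k, s. split; auto.
Qed.

Lemma claim1 N E (HE : forall k s, E k s -> (1 <= k <= 5)%nat /\ is_perm k s) :
  sph_eq N (S_E N E) (classical N) \/ sph_eq N (S_E N E) (halflib N)
     \/ sph_eq N (S_E N E) free_rels.
Proof.
  assert (L : forall A x, S_E N E A x <-> SB N false E A x).
  { intros A x. unfold S_E, SB. split; intros H k s Eks; apply R_link; auto. }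
  destruct (SB_class N false E HE) as [H|[H|H]]; [left|right;left|right;right];
    intros A x Hs; rewrite L, (H A x Hs); [symmetry; apply C_false|symmetry; apply H_false|tauto].
Qed.
Lemma claim3 N F (HF : forall k s, F k s -> (1 <= k <= 5)%nat /\ is_perm k s) :
  sph_eq N (Sbar_F N F) (anticomm N) \/ sph_eq N (Sbar_F N F) (halflib_bar N)
     \/ sph_eq N (Sbar_F N F) free_rels.
Proof.
  assert (L : forall A x, Sbar_F N F A x <-> SB N true F A x).
  { intros A x. unfold Sbar_F, SB. split; intros H k s Eks; apply Rbar_link; auto. }
  destruct (SB_class N true F HF) as [H|[H|H]]; [left|right;left|right;right];
    intros A x Hs; rewrite L, (H A x Hs); [symmetry; apply C_true|symmetry; apply H_true|tauto].
Qed.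
Lemma claim2 N k s : (1 <= k <= 5)%nat -> is_perm k s -> (exists r, (r < k)%nat /\ s r <> r) ->
  sph_eq N (S_E N (single k s)) (classical N) \/ sph_eq N (S_E N (single k s)) (halflib N).
Proof.
  intros Hk Hp [r [Hr Hsr]].
  assert (L : forall A x, S_E N (single k s) A x <-> Holds N A x false (Fperm (map s (seq 0 k)))).
  { intros A x. unfold S_E, single. split.
    - intro H. apply R_link, H. auto.
    - intros H k' s' [-> ->]. apply R_link, H. }
  destruct (classify N k s Hk Hp) as [[Hid _]|[Hc|Hh]].
  - exfalso. apply Hsr. rewrite <- (nth_ms s k r Hr), Hid, seq_nth; auto.
  - left. intros A x Hs. rewrite L, (Hc A x false Hs). symmetry; apply C_false.
  - right. intros A x Hs. rewrite L, (Hh A x false Hs). symmetry; apply H_false.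
Qed.

Lemma both0 (A : CStarAlg) (y z : car A) : y = z -> y = copp z -> y = c0.
Proof. intros H1 H2. apply half0. rewrite H2 at 1. rewrite <- H1. reflexivity. Qed.
Lemma neq3 i j k : negb (i =? j) && negb (j =? k) && negb (i =? k) = true -> i <> j /\ j <> k /\ i <> k.
Proof.
  intro H. apply andb_true_iff in H as [H H3]. apply andb_true_iff in H as [H1 H2].
  apply negb_true_iff, Nat.eqb_neq in H1, H2, H3. auto.
Qed.
Lemma neq3' i j k : i <> j -> j <> k -> i <> k -> negb (i =? j) && negb (j =? k) && negb (i =? k) = true.
Proof.
  intros. apply Nat.eqb_neq in H, H0, H1. rewrite H, H0, H1. reflexivity.
Qed.
Lemma L_hh N A x : halflib N A x -> halflib_bar N A x -> poly1 N A x.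
Proof.
  intros H1 H2 i j k Hi Hj Hk Hij Hjk Hik. specialize (H2 i j k Hi Hj Hk).
  rewrite neq3' in H2 by auto. apply (both0 _ _ _ (H1 i j k Hi Hj Hk) H2).
Qed.
Lemma L_hp N A x : halflib N A x -> poly1 N A x -> halflib_bar N A x.
Proof.
  intros H1 H2 i j k Hi Hj Hk.
  destruct (negb (i =? j) && negb (j =? k) && negb (i =? k)) eqn:E; simpl.
  - apply neq3 in E as [? [? ?]]. rewrite (H2 i j k), (H2 k j i) by auto. symmetry; apply opp0.
  - apply H1; auto.
Qed.
Lemma L_bp N A x : halflib_bar N A x -> poly1 N A x -> halflib N A x.
Proof.
  intros H1 H2 i j k Hi Hj Hk. specialize (H1 i j k Hi Hj Hk).
  destruct (negb (i =? j) && negb (j =? k) && negb (i =? k)) eqn:E; simpl in H1.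
  - apply neq3 in E as [? [? ?]]. rewrite (H2 i j k), (H2 k j i) by auto. reflexivity.
  - exact H1.
Qed.
Lemma cl_hl N A x : sphere_pt N A x -> classical N A x -> halflib N A x.
Proof. intros Hs H. apply H_false, FC_FH, C_false; auto. Qed.
Lemma an_hb N A x : sphere_pt N A x -> anticomm N A x -> halflib_bar N A x.
Proof. intros Hs H. apply H_true, FC_FH, C_true; auto. Qed.

Lemma sph_and N P Q P' Q' : sph_eq N P P' -> sph_eq N Q Q' -> sph_eq N (rels_and P Q) (rels_and P' Q').
Proof. intros H1 H2 A x Hs. unfold rels_and. rewrite (H1 A x Hs), (H2 A x Hs). tauto. Qed.
Lemma sph_tr N P Q R : sph_eq N P Q -> sph_eq N Q R -> sph_eq N P R.
Proof. intros H1 H2 A x Hs. rewrite (H1 A x Hs). apply H2, Hs. Qed.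

Theorem theorem2p5 (N : nat) (HN : (3 <= N)%nat) (E F : permset)
  (HE : forall k s, E k s -> (1 <= k <= 5)%nat /\ is_perm k s)
  (HF : forall k s, F k s -> (1 <= k <= 5)%nat /\ is_perm k s) :
  (sph_eq N (S_E N E) (classical N) \/ sph_eq N (S_E N E) (halflib N)
     \/ sph_eq N (S_E N E) free_rels)
  /\ (forall k s, (1 <= k <= 5)%nat -> is_perm k s -> (exists r, (r < k)%nat /\ s r <> r) ->
        sph_eq N (S_E N (single k s)) (classical N)
        \/ sph_eq N (S_E N (single k s)) (halflib N))
  /\ (sph_eq N (Sbar_F N F) (anticomm N) \/ sph_eq N (Sbar_F N F) (halflib_bar N)
     \/ sph_eq N (Sbar_F N F) free_rels)
  /\ (let M := rels_and (S_E N E) (Sbar_F N F) in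
      sph_eq N M (classical N)
      \/ sph_eq N M (halflib N)
      \/ sph_eq N M free_rels
      \/ sph_eq N M (rels_and (classical N) (poly1 N))
      \/ sph_eq N M (rels_and (halflib N) (poly1 N))
      \/ sph_eq N M (halflib_bar N)
      \/ sph_eq N M (rels_and (classical N) (poly0 N))
      \/ sph_eq N M (rels_and (anticomm N) (poly1 N))
      \/ sph_eq N M (anticomm N)).
Proof.
  pose proof (claim1 N E HE) as C1. pose proof (claim3 N F HF) as C3.
  split; [exact C1|]. split; [intros; apply claim2; auto|]. split; [exact C3|].
  intro M.
  destruct C1 as [h1|[h1|h1]]; destruct C3 as [h3|[h3|h3]];
    pose proof (sph_and N _ _ _ _ h1 h3) as h; fold M in h.
  -
    do 6 right; left. eapply sph_tr; [exact h|]. intros A x Hs. unfold rels_and. split.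
    + intros [H1 H2]. split; auto. intros i j Hi Hj Hij.
      apply (both0 _ _ _ (H1 i j Hi Hj) (H2 i j Hi Hj Hij)).
    + intros [H1 H2]. split; auto. intros i j Hi Hj Hij.
      rewrite (H2 i j), (H2 j i) by auto. symmetry; apply opp0.
  -
    do 3 right; left. eapply sph_tr; [exact h|]. intros A x Hs. unfold rels_and. split.
    + intros [H1 H2]. split; auto. apply L_hh; auto. apply cl_hl; auto.
    + intros [H1 H2]. split; auto. apply L_hp; auto. apply cl_hl; auto.
  -
    left. eapply sph_tr; [exact h|]. intros A x Hs. unfold rels_and, free_rels. tauto.
  -
    do 7 right; left. eapply sph_tr; [exact h|]. intros A x Hs. unfold rels_and. split.
    + intros [H1 H2]. split; auto. apply L_hh; auto. apply an_hb; auto.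
    + intros [H1 H2]. split; auto. apply L_bp; auto. apply an_hb; auto.
  -
    do 4 right; left. eapply sph_tr; [exact h|]. intros A x Hs. unfold rels_and. split.
    + intros [H1 H2]. split; auto. apply L_hh; auto.
    + intros [H1 H2]. split; auto. apply L_hp; auto.
  - right; left. eapply sph_tr; [exact h|]. intros A x Hs. unfold rels_and, free_rels. tauto.
  - do 8 right. eapply sph_tr; [exact h|]. intros A x Hs. unfold rels_and, free_rels. tauto.
  - do 5 right; left. eapply sph_tr; [exact h|]. intros A x Hs. unfold rels_and, free_rels. tauto.
  - do 2 right; left. eapply sph_tr; [exact h|]. intros A x Hs. unfold rels_and, free_rels. tauto.
Qed.
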